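(* For every $2n_1\in\{24,26,28,30,32\}$, every $2n_2\in\{34,36,38\}$ and every integer $s\ge1$, there exist a binary Euclidean formally self-dual LCD $[4sn_1,2sn_1,6]_2$ code and a binary Euclidean formally self-dual LCD $[4sn_2,2sn_2,7]_2$ code. In addition, binary Euclidean formally self-dual LCD $[44s,22s,5]_2$, $[80s,40s,8]_2$ and $[100s,50s,9]_2$ codes exist for every integer $s\ge1$.
   Context: A binary linear code $\mathcal{C}$ is Euclidean LCD if $\mathcal{C}\cap\mathcal{C}^{\perp_E}=\{0\}$, where $\perp_E$ is the dual with respect to $\sum_ix_iy_i$; it is Euclidean formally self-dual if it has the same weight distribution as $\mathcal{C}^{\perp_E}$. $[n,k,d]_2$ denotes length $n$, dimension $k$, minimum distance $d$. *)

(* Defs.v *)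
From mathcomp Require Import all_boot all_algebra.
Set Implicit Arguments. Unset Strict Implicit. Unset Printing Implicit Defensive.
Import GRing.Theory.
Local Open Scope ring_scope.

(* A binary linear code of length n is the row space of a matrix C : 'M['F_2]_n. *)
Definition F2 := 'F_2.

Definition wt n (x : 'rV[F2]_n) : nat := #|[set i : 'I_n | x 0 i != 0]|.

Definition in_code n (C : 'M[F2]_n) (x : 'rV[F2]_n) : bool := (x <= C)%MS.

(* Euclidean dual: all y with sum_i x_i y_i = 0 for every codeword x,
   i.e. y *m C^T = 0 ; its row space is kermx C^T *)
Definition edual n (C : 'M[F2]_n) : 'M[F2]_n := kermx C^T.

Definition dimension n (C : 'M[F2]_n) : nat := \rank C.

Definition min_dist n (C : 'M[F2]_n) (d : nat) : Prop :=
  (exists2 x, in_code C x && (x != 0) & wt x = d) /\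
  (forall x, in_code C x -> x != 0 -> (d <= wt x)%N).

Definition euclid_LCD n (C : 'M[F2]_n) : Prop :=
  forall x, in_code C x -> in_code (edual C) x -> x = 0.

Definition weight_count n (C : 'M[F2]_n) (w : nat) : nat :=
  #|[set x : 'rV[F2]_n | in_code C x && (wt x == w)]|.

Definition euclid_FSD n (C : 'M[F2]_n) : Prop :=
  forall w, weight_count C w = weight_count (edual C) w.

Definition exists_FSD_LCD (n k d : nat) : Prop :=
  exists C : 'M[F2]_n,
    [/\ dimension C = k, min_dist C d, euclid_FSD C & euclid_LCD C].

(* Main.v *)
Require Import Defs.
From mathcomp Require Import all_boot all_algebra.
Set Implicit Arguments. Unset Strict Implicit. Unset Printing Implicit Defensive.
Import GRing.Theory.
Local Open Scope ring_scope.

Lemma wt_sum n (x : 'rV[F2]_n) : wt x = (\sum_(i < n) (x ord0 i != 0%R))%N.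
Proof.
rewrite /wt -sum1_card big_mkcond /=; apply: eq_bigr => i _.
by rewrite inE; case: (x 0 i != 0).
Qed.

Lemma wt_row_mx n1 n2 (a : 'rV[F2]_n1) (b : 'rV[F2]_n2) :
  wt (row_mx a b) = (wt a + wt b)%N.
Proof.
rewrite !wt_sum big_split_ord /=.
by congr (_ + _)%N; apply: eq_bigr => i _; rewrite ?row_mxEl ?row_mxEr.
Qed.

Lemma in_code_block n1 n2 (C1 : 'M[F2]_n1) (C2 : 'M[F2]_n2) (x : 'rV[F2]_(n1 + n2)) :
  in_code (block_mx C1 0 0 C2) x = in_code C1 (lsubmx x) && in_code C2 (rsubmx x).
Proof.
rewrite /in_code; apply/idP/andP.
  case/submxP => u ->; rewrite -(hsubmxK u) mul_row_block !mulmx0 addr0 add0r.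
  by rewrite row_mxKl row_mxKr !submxMl.
case; case/submxP => a Ha; case/submxP => b Hb.
rewrite -(hsubmxK x) Ha Hb.
have -> : row_mx (a *m C1) (b *m C2) = row_mx a b *m block_mx C1 0 0 C2.
  by rewrite mul_row_block !mulmx0 addr0 add0r.
exact: submxMl.
Qed.

Lemma in_dual n (C : 'M[F2]_n) x : in_code (edual C) x = (x *m C^T == 0).
Proof. by rewrite /in_code /edual sub_kermx. Qed.

Lemma in_dual_block n1 n2 (C1 : 'M[F2]_n1) (C2 : 'M[F2]_n2) (x : 'rV[F2]_(n1 + n2)) :
  in_code (edual (block_mx C1 0 0 C2)) x =
  in_code (edual C1) (lsubmx x) && in_code (edual C2) (rsubmx x).
Proof.
rewrite !in_dual tr_block_mx !trmx0 -{1}(hsubmxK x) mul_row_block !mulmx0 addr0 add0r.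
rewrite -row_mx0; apply/eqP/andP => [/eq_row_mx [-> ->]|[/eqP -> /eqP ->]] //.
Qed.

Definition FSD' n (C : 'M[F2]_n) :=
  exists f : 'rV[F2]_n -> 'rV[F2]_n,
    [/\ injective f, forall x, wt (f x) = wt x &
        forall x, in_code (edual C) (f x) = in_code C x].

Lemma FSD'_FSD n (C : 'M[F2]_n) : FSD' C -> euclid_FSD C.
Proof.
case=> f [injf wtf inf] w; rewrite /weight_count.
symmetry; rewrite -(card_preimset _ injf); apply: eq_card => x.
by rewrite !inE inf wtf.
Qed.

Definition good n k d := exists C : 'M[F2]_n,
  [/\ dimension C = k, min_dist C d, FSD' C & euclid_LCD C].

Lemma good_exists n k d : good n k d -> exists_FSD_LCD n k d.
Proof. by case=> C [? ? /FSD'_FSD ? ?]; exists C. Qed.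

Lemma good_add n1 k1 n2 k2 d : good n1 k1 d -> good n2 k2 d -> good (n1 + n2) (k1 + k2) d.
Proof.
case=> C1 [r1 [[x1 /andP[c1 nz1] w1] m1] [f1 [i1 wf1 e1]] L1].
case=> C2 [r2 [_ m2] [f2 [i2 wf2 e2]] L2].
exists (block_mx C1 0 0 C2); split.
- by rewrite /dimension rank_diag_block_mx -r1 -r2.
- split.
    apply: (@ex_intro2 _ _ _ (row_mx x1 0)); last first.
      rewrite wt_row_mx w1 wt_sum big1 ?addn0 // => i _; by rewrite mxE.
    rewrite in_code_block row_mxKl row_mxKr c1 /in_code sub0mx /=.
    by apply: contra nz1 => /eqP; rewrite -row_mx0 => /eq_row_mx [-> _].
  move=> x; rewrite in_code_block => /andP [ca cb] nz.
  rewrite -(hsubmxK x) wt_row_mx.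
  have [a0 | anz] := eqVneq (lsubmx x) 0.
    have bnz : rsubmx x != 0.
      by apply: contra nz => /eqP b0; rewrite -(hsubmxK x) a0 b0 row_mx0.
    by apply: leq_trans (m2 _ cb bnz) _; rewrite leq_addl.
  by apply: leq_trans (m1 _ ca anz) _; rewrite leq_addr.
- exists (fun x => row_mx (f1 (lsubmx x)) (f2 (rsubmx x))); split.
  + move=> x y /eq_row_mx [/i1 h1 /i2 h2].
    by rewrite -(hsubmxK x) -(hsubmxK y) h1 h2.
  + move=> x /=; have {3}<- := hsubmxK x; by rewrite !wt_row_mx wf1 wf2.
  + by move=> x /=; rewrite in_dual_block in_code_block row_mxKl row_mxKr e1 e2.
- move=> x; rewrite in_code_block in_dual_block => /andP[ca cb] /andP[da db].
  by rewrite -(hsubmxK x) (L1 _ ca da) (L2 _ cb db) row_mx0.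
Qed.

Lemma good_mul n k d s : good n k d -> good (s.+1 * n) (s.+1 * k) d.
Proof.
move=> g; elim: s => [|s IH]; first by rewrite !mul1n.
by rewrite (mulSn s.+1 n) (mulSn s.+1 k); apply: good_add.
Qed.

Definition xorl (a b : seq bool) : seq bool := [seq p.1 (+) p.2 | p <- zip a b].

Fixpoint comboA (bs : seq bool) (rows : seq (seq bool)) (acc : seq bool) : seq bool :=
  match bs, rows with
  | b :: bs', r :: rs => comboA bs' rs (if b then xorl r acc else acc)
  | _, _ => acc
  end.

Fixpoint chk (d : nat) (rows : seq (seq bool)) (acc : seq bool) (j c : nat) : bool :=
  match rows with
  | [::] => (c == 0)%N || (d <= c + count id acc)%N
  | r :: rs => chk d rs acc j c &&
               (if j is j'.+1 then chk d rs (xorl r acc) j' c.+1 else true)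
  end.

Lemma chk_ok d rows acc j c : chk d rows acc j c ->
  forall bs, size bs = size rows -> (count id bs <= j)%N ->
  (c + count id bs == 0)%N || (d <= c + count id bs + count id (comboA bs rows acc))%N.
Proof.
elim: rows acc j c => [|r rs IH] acc j c /=.
  by move=> h [|//] _ _ /=; rewrite !addn0.
case/andP => h1 h2 [|b bs] //= [sz] hc.
case: b hc => /= hc.
  move: hc h2; case: j {h1} => [|j] // hc h2.
  by have := IH _ _ _ h2 bs sz hc; rewrite !addSnnS.
by have := IH _ _ _ h1 bs sz hc.
Qed.

Definition b2F (b : bool) : F2 := if b then 1 else 0.

Lemma F2_cases (x : F2) : x = 0 \/ x = 1.
Proof. case: x => [[|[|m]] H]; [left|right|]; try by apply: val_inj.
exfalso; have : (m.+2 < 2)%N := H. by [].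
Qed.

Lemma F2_addxx (x : F2) : x + x = 0.
Proof. by case: (F2_cases x) => ->; [rewrite addr0 | apply: val_inj]. Qed.

Lemma F2_opp (x : F2) : - x = x.
Proof. by apply/eqP; rewrite eq_sym -subr_eq0 opprK F2_addxx. Qed.

Lemma mx_addxx m n (M : 'M[F2]_(m, n)) : M + M = 0.
Proof. by apply/matrixP => i j; rewrite !mxE F2_addxx. Qed.

Lemma mx_opp m n (M : 'M[F2]_(m, n)) : - M = M.
Proof. by apply/matrixP => i j; rewrite !mxE F2_opp. Qed.

Lemma b2F_neq0 b : (b2F b != 0) = b.
Proof. by case: b. Qed.

Lemma b2F_addb a b : b2F (a (+) b) = b2F a + b2F b.
Proof. by case: a; case: b; rewrite /b2F /= ?addr0 ?add0r //; apply: val_inj. Qed.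

Definition vec k (l : seq bool) : 'rV[F2]_k := \row_(j < k) b2F (nth false l j).
Definition mat k (rows : seq (seq bool)) : 'M[F2]_k :=
  \matrix_(i < k, j < k) b2F (nth false (nth [::] rows i) j).
Definition lst k (u : 'rV[F2]_k) : seq bool := [seq u 0 j != 0 | j <- enum 'I_k].

Lemma size_lst k (u : 'rV[F2]_k) : size (lst u) = k.
Proof. by rewrite size_map size_enum_ord. Qed.

Lemma vec_lst k (u : 'rV[F2]_k) : vec k (lst u) = u.
Proof.
apply/rowP => j; rewrite mxE (nth_map j) ?size_enum_ord // nth_ord_enum.
by case: (F2_cases (u 0 j)) => ->.
Qed.

Lemma wt_vec k l : size l = k -> wt (vec k l) = count id l.
Proof.
move=> sz; rewrite wt_sum -sum1_count (big_nth false) sz big_mkord [RHS]big_mkcond /=.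
by apply: eq_bigr => i _; rewrite mxE b2F_neq0; case: (nth false l i).
Qed.

Lemma size_xorl a b : size (xorl a b) = minn (size a) (size b).
Proof. by rewrite size_map size_zip. Qed.

Lemma vec_xorl k a b : size a = size b -> vec k (xorl a b) = vec k a + vec k b.
Proof.
move=> sz; apply/rowP => j; rewrite !mxE.
have [lt|ge] := ltnP j (size a).
  rewrite (nth_map (false, false)) ?size_zip ?sz ?minnn -?sz // nth_zip //=.
  exact: b2F_addb.
rewrite !nth_default ?size_xorl ?sz ?minnn -?sz //.
by rewrite addr0.
Qed.

Definition allsz k (rows : seq (seq bool)) := all (fun r => size r == k) rows.

Lemma size_comboA k bs rows acc : allsz k rows -> size acc = k -> size (comboA bs rows acc) = k.
Proof.
elim: bs rows acc => [|b bs IH] [|r rs] acc //= /andP[/eqP hr hrs] ha.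
apply: IH => //; case: b => //; by rewrite size_xorl hr ha minnn.
Qed.

Lemma comboA_sum k bs rows acc : allsz k rows -> size acc = k ->
  vec k (comboA bs rows acc) =
  vec k acc + \sum_(p <- zip bs rows) (if p.1 then vec k p.2 else 0).
Proof.
elim: bs rows acc => [|b bs IH] [|r rs] acc //=; rewrite ?big_nil ?addr0 //.
move=> /andP[/eqP hr hrs] ha; rewrite big_cons /=.
case: b => /=.
  rewrite IH // ?size_xorl ?hr ?ha ?minnn // vec_xorl ?hr ?ha //.
  by rewrite addrA [vec k r + _]addrC.
by rewrite IH // add0r.
Qed.

Lemma row_mat k rows (i : 'I_k) : row i (mat k rows) = vec k (nth [::] rows i).
Proof. by apply/rowP => j; rewrite !mxE. Qed.

Lemma vec_nseq k : vec k (nseq k false) = 0.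
Proof. by apply/rowP => j; rewrite !mxE nth_nseq; case: ifP. Qed.

Lemma mul_vec k bs rows : size bs = k -> size rows = k -> allsz k rows ->
  vec k bs *m mat k rows = vec k (comboA bs rows (nseq k false)).
Proof.
move=> sb sr ha; rewrite comboA_sum ?size_nseq // vec_nseq add0r mulmx_sum_row.
rewrite (big_nth (false, [::])) size_zip sb sr minnn big_mkord.
apply: eq_bigr => i _; rewrite nth_zip ?sb ?sr //= row_mat mxE.
by case: (nth false bs i); rewrite ?scale1r ?scale0r.
Qed.

Definition unitl k i : seq bool := mkseq (fun j => j == i) k.

Definition symchk k (rows : seq (seq bool)) :=
  all (fun i => all (fun j => nth false (nth [::] rows i) j == nth false (nth [::] rows j) i)
    (iota 0 k)) (iota 0 k).

Definition invchk k rows inv :=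
  all (fun i => comboA (nth [::] rows i) inv (nseq k false) == unitl k i) (iota 0 k).

Definition Nchk k rows N :=
  all (fun i => xorl (nth [::] N i) (comboA (nth [::] N i) rows (nseq k false)) == unitl k i)
    (iota 0 k).

Definition check k d t rows inv N i0 :=
  [&& size rows == k, allsz k rows, size inv == k, allsz k inv, size N == k, allsz k N,
      symchk k rows, (d <= t.*2.+2)%N, chk d rows (nseq k false) t 0,
      chk d inv (nseq k false) t 0, invchk k rows inv, Nchk k rows N,
      (i0 < k)%N & (count id (unitl k i0) + count id (comboA (unitl k i0) rows (nseq k false)) == d)%N].

Lemma vec_unitl k (i : 'I_k) : vec k (unitl k i) = row i 1%:M.
Proof. apply/rowP => j; rewrite !mxE /unitl nth_mkseq // eq_sym.
by rewrite (_ : b2F _ = (i == j :> nat)%:R) //; case: (i == j :> nat).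
Qed.

Lemma allszP k rows i : allsz k rows -> (i < size rows)%N -> size (nth [::] rows i) = k.
Proof. by move=> /all_nthP h lt; apply/eqP; apply: h. Qed.

Lemma wt_eq0 n (x : 'rV[F2]_n) : wt x = 0%N -> x = 0.
Proof.
move=> /eqP; rewrite /wt cards_eq0 => /eqP h; apply/rowP => j; rewrite mxE.
apply/eqP; apply: contraT => nz.
have : j \in [set i : 'I_n | x 0 i != 0] by rewrite inE.
by rewrite h inE.
Qed.

Section Base.
Variables (k d t : nat) (rows inv N : seq (seq bool)) (i0 : nat).
Hypothesis H : check k d t rows inv N i0.

Let A := mat k rows.
Let G : 'M[F2]_(k, k + k) := row_mx 1%:M A.
Let C : 'M[F2]_(k + k) := col_mx G 0.

Lemma szr : size rows = k. Proof. by case/and5P: H => /eqP. Qed.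
Lemma ar : allsz k rows. Proof. by case/and5P: H. Qed.
Lemma szi : size inv = k. Proof. by case/and5P: H => _ _ /eqP. Qed.
Lemma ai : allsz k inv. Proof. by case/and5P: H. Qed.
Lemma szN : size N = k. Proof. by case/and5P: H => _ _ _ _ /and3P[/eqP]. Qed.
Lemma aN : allsz k N. Proof. by case/and5P: H => _ _ _ _ /and3P[]. Qed.

Lemma symA : A^T = A.
Proof.
case/and5P: H => _ _ _ _ /and3P[_ _ /and3P[/allP h _ _]].
apply/matrixP => i j; rewrite !mxE.
have hi : (i : nat) \in iota 0 k by rewrite mem_iota add0n ltn_ord.
have hj : (j : nat) \in iota 0 k by rewrite mem_iota add0n ltn_ord.
by move: (h _ hi) => /allP /(_ _ hj) /eqP ->.
Qed.

Lemma mulA_vec (u : 'rV[F2]_k) : u *m A = vec k (comboA (lst u) rows (nseq k false)).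
Proof. by rewrite -{1}(vec_lst u) mul_vec ?size_lst ?szr ?ar. Qed.

Lemma mulInv_vec (u : 'rV[F2]_k) :
  u *m mat k inv = vec k (comboA (lst u) inv (nseq k false)).
Proof. by rewrite -{1}(vec_lst u) mul_vec ?size_lst ?szi ?ai. Qed.

Lemma AInv : A *m mat k inv = 1%:M.
Proof.
case/and5P: H => _ _ _ _ /and3P[_ _ /and5P[_ _ _ _ /and3P[/allP h _ _]]].
apply/row_matrixP => i; rewrite row_mul row_mat mul_vec ?szi ?ai ?(allszP ar) ?szr //.
by rewrite (eqP (h i _)) ?vec_unitl // mem_iota add0n ltn_ord.
Qed.

Lemma NA : mat k N *m (1%:M + A) = 1%:M.
Proof.
case/and5P: H => _ _ _ _ /and3P[_ _ /and5P[_ _ _ _ /and3P[_ /allP h _]]].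
apply/row_matrixP => i; rewrite row_mul row_mat mulmxDr mulmx1 mul_vec
  ?szr ?ar ?(allszP aN) ?szN //.
rewrite -vec_xorl ?(allszP aN) ?szN ?(size_comboA _ ar) ?size_nseq //.
by rewrite (eqP (h i _)) ?vec_unitl // mem_iota add0n ltn_ord.
Qed.

Lemma inC x : in_code C x = (rsubmx x == lsubmx x *m A).
Proof.
rewrite /in_code /C -addsmxE addsmx0; apply/idP/eqP.
  by case/submxP => u ->; rewrite mul_mx_row mulmx1 row_mxKl row_mxKr.
move=> e; rewrite -(hsubmxK x) e.
have -> : row_mx (lsubmx x) (lsubmx x *m A) = lsubmx x *m G by rewrite mul_mx_row mulmx1.
exact: submxMl.
Qed.

Lemma inD y : in_code (edual C) y = (lsubmx y == rsubmx y *m A).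
Proof.
rewrite in_dual /C tr_col_mx trmx0 mul_mx_row mulmx0 -row_mx0.
apply/eqP/eqP => [/eq_row_mx [h _]|h].
  move: h; rewrite /G tr_row_mx trmx1 symA -{1}(hsubmxK y) mul_row_col mulmx1.
  by move/eqP; rewrite addr_eq0 mx_opp => /eqP.
rewrite /G tr_row_mx trmx1 symA -{1}(hsubmxK y) mul_row_col mulmx1 h mx_addxx.
by [].
Qed.

Lemma base_dim : dimension C = k.
Proof.
rewrite /dimension /C rank_col_mx0; apply/eqP; rewrite eqn_leq rank_leq_row /=.
have e : G *m col_mx 1%:M 0 = 1%:M by rewrite mul_row_col mulmx1 mulmx0 addr0.
rewrite -{1}(mxrank1 F2 k) -e; exact: mxrankM_maxl.
Qed.

Lemma base_min : min_dist C d.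
Proof.
case/and5P: H => _ _ _ _ /and3P[_ _ /and5P[_ le2 c1 c2 /and4P[_ _ lti /eqP hw]]].
split.
  pose e := vec k (unitl k (Ordinal lti)).
  exists (row_mx e (e *m A)).
    rewrite inC row_mxKl row_mxKr eqxx /=.
    apply/eqP => /eqP; rewrite -row_mx0 => /eqP /eq_row_mx [e0 _].
    have := congr1 (fun v : 'rV_k => v 0 (Ordinal lti)) e0.
    by rewrite /e vec_unitl !mxE eqxx.
  rewrite wt_row_mx /e mul_vec ?size_mkseq ?szr ?ar // !wt_vec ?size_mkseq //.
    by rewrite (size_comboA _ ar) ?size_nseq.

move=> x; rewrite inC => /eqP hx nz.
set l := lsubmx x.
have l0 : l != 0.
  apply: contra nz => /eqP l0; rewrite -(hsubmxK x) hx -/l l0 mul0mx.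
  by rewrite row_mx0.
rewrite -(hsubmxK x) hx wt_row_mx -/l.
have wl : wt l = count id (lst l) by rewrite -{1}(vec_lst l) wt_vec ?size_lst.
have wlA : wt (l *m A) = count id (comboA (lst l) rows (nseq k false)).
  by rewrite mulA_vec wt_vec // (size_comboA _ ar) ?size_nseq.
have [le|gt] := leqP (wt l) t.
  have := chk_ok c1 (bs := lst l); rewrite size_lst szr -wl => /(_ erefl le).
  rewrite add0n -wlA; case/orP => // /eqP /wt_eq0 /eqP; by rewrite (negPf l0).
have [le'|gt'] := leqP (wt (l *m A)) t; last first.
  apply: leq_trans le2 _; rewrite -addnn -addnS -addSn; exact: leq_add.
set w := l *m A.
have lw : l = w *m mat k inv by rewrite /w -mulmxA AInv mulmx1.
have w0 : w != 0 by apply: contra l0 => /eqP w0; rewrite lw w0 mul0mx.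
have ww : wt w = count id (lst w) by rewrite -{1}(vec_lst w) wt_vec ?size_lst.
have := chk_ok c2 (bs := lst w); rewrite size_lst szi -ww => /(_ erefl le').
rewrite add0n; case/orP.
  by move=> /eqP /wt_eq0 /eqP; rewrite (negPf w0).
rewrite -(@wt_vec k); last by rewrite (size_comboA _ ai) ?size_nseq.
by rewrite -mulInv_vec -lw addnC.
Qed.

Lemma base_FSD : FSD' C.
Proof.
exists (fun x => row_mx (rsubmx x) (lsubmx x)); split.
- move=> x y /= /eq_row_mx [h1 h2].
  by rewrite -(hsubmxK x) -(hsubmxK y) h1 h2.
- by move=> x /=; rewrite wt_row_mx addnC -wt_row_mx hsubmxK.
- by move=> x /=; rewrite inD inC row_mxKl row_mxKr.
Qed.

Lemma base_LCD : euclid_LCD C.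
Proof.
move=> x; rewrite inC inD => /eqP hr /eqP hl.
set l := lsubmx x in hr hl.
have NA' := mulmx1C NA.
have llA : l *m A *m A = l by rewrite -hr.
set m := l *m (1%:M + A).
have m0 : m *m (1%:M + A) = 0.
  rewrite /m !mulmxDr !mulmx1 mulmxDl llA.
  by rewrite [l *m A + l]addrC mx_addxx.
have : m = 0 by rewrite -[m]mulmx1 -NA' mulmxA m0 mul0mx.
move=> {}m0.
have l0 : l = 0 by rewrite -[l]mulmx1 -NA' mulmxA -/m m0 mul0mx.
by rewrite -(hsubmxK x) hr -/l l0 mul0mx row_mx0.
Qed.

Lemma base_good : good (k + k) k d.
Proof. by exists C; split; [exact: base_dim|exact: base_min|exact: base_FSD|exact: base_LCD]. Qed.

End Base.

Definition dec (s : seq (seq nat)) : seq (seq bool) := map (map (fun n => n == 1)) s.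

Definition c24_r : seq (seq nat) := [:: [:: 0;0;0;0;0;0;0;0;0;0;0;0;1;1;0;1;1;0;0;0;0;1;0;0];
  [:: 0;0;0;1;1;1;1;0;0;1;1;1;1;0;1;1;0;1;1;0;1;0;1;1];
  [:: 0;0;0;1;0;1;1;0;0;1;1;1;0;1;1;1;0;1;1;0;0;0;1;0];
  [:: 0;1;1;0;1;1;0;0;1;1;1;0;1;0;1;1;0;0;0;1;1;0;0;1];
  [:: 0;1;0;1;1;0;0;0;1;1;1;0;0;1;0;0;1;1;0;1;1;0;1;0];
  [:: 0;1;1;1;0;0;1;1;1;1;0;1;0;1;0;1;1;0;0;0;1;0;1;1];
  [:: 0;1;1;0;0;1;1;1;0;1;1;0;1;1;1;1;0;0;1;1;0;0;1;1];
  [:: 0;0;0;0;0;1;1;0;0;1;1;0;0;0;0;0;0;1;0;0;0;1;1;1];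
  [:: 0;0;0;1;1;1;0;0;0;0;1;1;1;0;1;1;1;1;0;0;0;1;1;0];
  [:: 0;1;1;1;1;1;1;1;0;1;0;1;0;1;1;0;1;1;1;0;1;1;0;1];
  [:: 0;1;1;1;1;0;1;1;1;0;1;1;1;0;1;1;0;1;1;1;1;1;1;1];
  [:: 0;1;1;0;0;1;0;0;1;1;1;0;1;0;1;1;0;0;1;0;0;1;1;1];
  [:: 1;1;0;1;0;0;1;0;1;0;1;1;1;0;1;1;1;1;0;1;0;0;0;0];
  [:: 1;0;1;0;1;1;1;0;0;1;0;0;0;1;0;1;0;1;0;0;0;0;0;0];
  [:: 0;1;1;1;0;0;1;0;1;1;1;1;1;0;1;0;1;0;1;1;0;1;1;0];
  [:: 1;1;1;1;0;1;1;0;1;0;1;1;1;1;0;0;0;1;0;0;1;1;0;0];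
  [:: 1;0;0;0;1;1;0;0;1;1;0;0;1;0;1;0;0;0;1;0;1;0;1;1];
  [:: 0;1;1;0;1;0;0;1;1;1;1;0;1;1;0;1;0;1;0;0;1;1;1;0];
  [:: 0;1;1;0;0;0;1;0;0;1;1;1;0;0;1;0;1;0;0;1;1;0;1;1];
  [:: 0;0;0;1;1;0;1;0;0;0;1;0;1;0;1;0;0;0;1;1;0;0;1;0];
  [:: 0;1;0;1;1;1;0;0;0;1;1;0;0;0;0;1;1;1;1;0;0;0;0;0];
  [:: 1;0;0;0;0;0;0;1;1;1;1;1;0;0;1;1;0;1;0;0;0;0;0;1];
  [:: 0;1;1;0;1;1;1;1;1;0;1;1;0;0;1;0;1;1;1;1;0;0;0;1];
  [:: 0;1;0;1;0;1;1;1;0;1;1;1;0;0;0;0;1;0;1;0;0;1;1;1]].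
Definition c24_i : seq (seq nat) := [:: [:: 1;0;0;1;0;1;0;1;1;1;1;1;1;0;0;1;0;0;1;1;0;1;1;1];
  [:: 0;0;1;1;0;1;0;1;1;1;1;1;1;0;0;1;1;0;0;1;0;1;0;0];
  [:: 0;1;0;1;0;1;0;0;1;0;1;0;0;0;0;0;0;1;1;1;0;0;0;1];
  [:: 1;1;1;1;0;0;0;0;1;0;0;1;1;0;1;1;1;1;1;0;1;1;0;0];
  [:: 0;0;0;0;1;0;0;0;1;0;1;1;0;0;0;1;1;0;0;1;1;0;1;0];
  [:: 1;1;1;0;0;0;1;0;1;1;0;1;1;0;1;0;0;0;0;1;0;1;0;1];
  [:: 0;0;0;0;0;1;0;0;0;1;1;0;1;1;0;1;0;0;0;1;1;1;1;1];
  [:: 1;1;0;0;0;0;0;1;0;0;0;1;0;1;1;1;0;1;1;0;1;0;0;0];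
  [:: 1;1;1;1;1;1;0;0;0;0;0;1;0;1;0;1;0;0;1;1;1;0;0;1];
  [:: 1;1;0;0;0;1;1;0;0;0;0;0;1;1;1;1;0;1;0;1;0;1;0;0];
  [:: 1;1;1;0;1;0;1;0;0;0;1;1;1;0;1;1;0;1;1;1;0;0;1;0];
  [:: 1;1;0;1;1;1;0;1;1;0;1;0;0;1;0;0;0;0;1;1;0;1;1;0];
  [:: 1;1;0;1;0;1;1;0;0;1;1;0;1;0;0;1;0;1;1;1;0;0;0;1];
  [:: 0;0;0;0;0;0;1;1;1;1;0;1;0;0;0;1;1;0;1;1;1;0;1;1];
  [:: 0;0;0;1;0;1;0;1;0;1;1;0;0;0;1;0;1;0;1;0;0;1;0;0];
  [:: 1;1;0;1;1;0;1;1;1;1;1;0;1;1;0;0;1;1;1;1;1;1;1;0];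
  [:: 0;1;0;1;1;0;0;0;0;0;0;0;0;1;1;1;1;1;0;0;1;1;1;1];
  [:: 0;0;1;1;0;0;0;1;0;1;1;0;1;0;0;1;1;1;0;0;0;1;1;1];
  [:: 1;0;1;1;0;0;0;1;1;0;1;1;1;1;1;1;0;0;1;0;1;1;1;1];
  [:: 1;1;1;0;1;1;1;0;1;1;1;1;1;1;0;1;0;0;0;0;1;1;1;0];
  [:: 0;0;0;1;1;0;1;1;1;0;0;0;0;1;0;1;1;0;1;1;1;1;1;1];
  [:: 1;1;0;1;0;1;1;0;0;1;0;1;0;0;1;1;1;1;1;1;1;0;1;1];
  [:: 1;0;0;0;1;0;1;0;0;0;1;1;0;1;0;1;1;1;1;1;1;1;1;1];
  [:: 1;0;1;0;0;1;1;0;1;0;0;0;1;1;0;0;1;1;1;0;1;1;1;1]].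
Definition c24_n : seq (seq nat) := [:: [:: 1;1;1;1;0;1;0;0;0;0;1;1;0;0;0;1;0;0;0;0;1;1;0;1];
  [:: 1;0;1;1;0;1;0;1;1;0;1;1;1;1;0;1;1;0;0;1;1;1;1;1];
  [:: 1;1;0;1;1;0;0;0;0;1;1;0;0;0;0;0;1;1;0;0;1;0;1;0];
  [:: 1;1;1;0;0;0;1;1;0;0;1;1;0;1;0;1;0;0;0;0;1;1;0;0];
  [:: 0;0;1;0;0;0;1;1;0;1;0;0;1;0;1;1;0;0;0;1;0;0;1;0];
  [:: 1;1;0;0;0;1;1;0;0;1;0;1;0;1;1;1;0;1;0;1;1;1;0;1];
  [:: 0;0;0;1;1;1;0;1;0;1;0;0;1;1;1;0;0;1;0;1;1;0;0;0];
  [:: 0;1;0;1;1;0;1;1;0;0;0;0;1;0;0;1;1;1;1;0;1;1;1;0];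
  [:: 0;1;0;0;0;0;0;0;0;0;0;1;0;1;0;1;0;1;0;0;1;0;0;1];
  [:: 0;0;1;0;1;1;1;0;0;0;0;0;1;0;1;1;1;1;0;1;1;1;0;0];
  [:: 1;1;1;1;0;0;0;0;0;0;1;1;0;0;1;0;1;0;0;1;0;0;1;0];
  [:: 1;1;0;1;0;1;0;0;1;0;1;1;0;0;0;0;0;0;0;0;0;1;0;1];
  [:: 0;1;0;0;1;0;1;1;0;1;0;0;0;1;0;1;1;0;0;1;1;1;0;0];
  [:: 0;1;0;1;0;1;1;0;1;0;0;0;1;1;1;0;1;1;0;1;1;1;0;0];
  [:: 0;0;0;0;1;1;1;0;0;1;1;0;0;1;0;0;0;0;1;0;1;1;0;1];
  [:: 1;1;0;1;1;1;0;1;1;1;0;0;1;0;0;0;0;0;0;0;1;0;1;0];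
  [:: 0;1;1;0;0;0;0;1;0;1;1;0;1;1;0;0;1;0;0;1;0;1;0;0];
  [:: 0;0;1;0;0;1;1;1;1;1;0;0;0;1;0;0;0;0;0;0;0;1;1;0];
  [:: 0;0;0;0;0;0;0;1;0;0;0;0;0;0;1;0;0;0;0;1;0;0;1;0];
  [:: 0;1;0;0;1;1;1;0;0;1;1;0;1;1;0;0;1;0;1;0;1;1;0;1];
  [:: 1;1;1;1;0;1;1;1;1;1;0;0;1;1;1;1;0;0;0;1;0;0;0;0];
  [:: 1;1;0;1;0;1;0;1;0;1;0;1;1;1;1;0;1;1;0;1;0;0;1;1];
  [:: 0;1;1;0;1;0;0;1;0;0;1;0;0;0;0;1;0;1;1;0;0;1;1;1];
  [:: 1;1;0;0;0;1;0;0;1;0;0;1;0;0;1;0;0;0;0;1;0;1;1;1]].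
Lemma c24_good : good (24 + 24) 24 6.
Proof. apply: (@base_good 24 6 2 (dec c24_r) (dec c24_i) (dec c24_n) 0). vm_compute. reflexivity. Qed.

Definition c26_r : seq (seq nat) := [:: [:: 0;0;1;0;0;1;0;0;1;0;1;0;0;0;0;0;0;0;0;0;0;1;0;0;0;0];
  [:: 0;0;0;0;1;0;0;1;1;1;0;1;0;0;1;0;1;1;0;1;1;0;1;0;0;0];
  [:: 1;0;1;0;1;1;1;1;0;1;1;1;1;1;1;1;0;1;0;1;1;0;0;0;1;1];
  [:: 0;0;0;0;0;0;1;0;1;1;0;1;1;0;0;0;0;1;1;0;0;1;0;0;0;1];
  [:: 0;1;1;0;1;0;1;1;1;1;0;1;1;0;0;0;0;0;0;1;0;0;1;1;0;0];
  [:: 1;0;1;0;0;0;0;0;0;0;1;0;0;0;1;0;0;0;1;1;0;0;1;0;1;1];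
  [:: 0;0;1;1;1;0;0;1;0;0;1;0;0;1;0;0;1;0;0;1;0;0;0;1;1;1];
  [:: 0;1;1;0;1;0;1;1;1;0;0;0;0;0;1;0;1;1;0;0;1;0;0;1;1;0];
  [:: 1;1;0;1;1;0;0;1;0;0;1;0;0;0;1;1;0;0;1;0;0;1;1;0;0;0];
  [:: 0;1;1;1;1;0;0;0;0;0;0;1;1;0;1;1;0;0;0;0;1;1;0;0;1;0];
  [:: 1;0;1;0;0;1;1;0;1;0;1;1;1;0;1;0;1;0;0;1;0;1;0;0;0;0];
  [:: 0;1;1;1;1;0;0;0;0;1;1;0;0;0;1;0;1;1;1;1;0;1;1;1;1;1];
  [:: 0;0;1;1;1;0;0;0;0;1;1;0;0;1;1;0;1;0;0;1;0;1;1;0;1;0];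
  [:: 0;0;1;0;0;0;1;0;0;0;0;0;1;1;0;1;0;0;1;0;1;1;0;0;1;0];
  [:: 0;1;1;0;0;1;0;1;1;1;1;1;1;0;0;1;0;0;0;0;1;0;1;0;0;1];
  [:: 0;0;1;0;0;0;0;0;1;1;0;0;0;1;1;0;0;1;0;0;0;0;0;0;1;1];
  [:: 0;1;0;0;0;0;1;1;0;0;1;1;1;0;0;0;0;1;1;0;1;0;0;0;0;0];
  [:: 0;1;1;1;0;0;0;1;0;0;0;1;0;0;0;1;1;1;0;1;0;0;0;0;0;0];
  [:: 0;0;0;1;0;1;0;0;1;0;0;1;0;1;0;0;1;0;1;0;1;0;1;1;0;1];
  [:: 0;1;1;0;1;1;1;0;0;0;1;1;1;0;0;0;0;1;0;1;1;0;0;0;0;0];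
  [:: 0;1;1;0;0;0;0;1;0;1;0;0;0;1;1;0;1;0;1;1;1;1;0;1;1;1];
  [:: 1;0;0;1;0;0;0;0;1;1;1;1;1;1;0;0;0;0;0;0;1;0;1;0;0;0];
  [:: 0;1;0;0;1;1;0;0;1;0;0;1;1;0;1;0;0;0;1;0;0;1;0;1;1;1];
  [:: 0;0;0;0;1;0;1;1;0;0;0;1;0;0;0;0;0;0;1;0;1;0;1;1;0;1];
  [:: 0;0;1;0;0;1;1;1;0;1;0;1;1;1;0;1;0;0;0;0;1;0;1;0;1;0];
  [:: 0;0;1;1;0;1;1;0;0;0;0;1;0;0;1;1;0;0;1;0;1;0;1;1;0;1]].
Definition c26_i : seq (seq nat) := [:: [:: 1;1;1;1;1;0;0;0;0;1;1;1;1;0;1;0;0;1;1;1;0;1;0;1;0;0];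
  [:: 1;1;0;0;0;0;0;1;0;0;1;0;0;1;0;1;0;0;0;1;1;1;0;1;0;1];
  [:: 1;0;0;1;1;1;1;0;1;1;0;0;0;1;0;1;0;0;0;0;1;0;0;0;0;1];
  [:: 1;0;1;1;1;1;0;1;1;0;0;1;0;1;0;1;0;1;0;0;1;1;0;1;1;1];
  [:: 1;0;1;1;0;1;0;0;0;1;1;0;0;0;1;0;0;0;0;0;1;1;1;0;1;0];
  [:: 0;0;1;1;1;0;0;0;0;0;1;0;0;0;1;0;0;1;1;1;1;0;1;0;1;0];
  [:: 0;0;1;0;0;0;0;1;0;0;1;1;1;0;1;1;1;1;0;0;1;0;0;0;0;1];
  [:: 0;1;0;1;0;0;1;1;1;1;0;1;1;1;0;0;1;1;1;0;1;1;1;0;0;0];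
  [:: 0;0;1;1;0;0;0;1;0;0;0;1;1;0;0;1;0;1;0;0;0;1;1;1;0;0];
  [:: 1;0;1;0;1;0;0;1;0;1;0;0;0;0;0;1;0;0;0;1;1;1;1;0;0;0];
  [:: 1;1;0;0;1;1;1;0;0;0;0;0;1;0;1;1;1;1;0;0;0;1;0;0;0;0];
  [:: 1;0;0;1;0;0;1;1;1;0;0;0;1;0;0;0;0;1;0;1;0;1;0;1;1;1];
  [:: 1;0;0;0;0;0;1;1;1;0;1;1;1;1;1;0;0;1;0;1;0;0;0;0;1;1];
  [:: 0;1;1;1;0;0;0;1;0;0;0;0;1;0;0;1;0;0;1;1;0;1;0;1;0;1];
  [:: 1;0;0;0;1;1;1;0;0;0;1;0;1;0;0;0;1;1;0;0;0;0;1;0;0;1];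
  [:: 0;1;1;1;0;0;1;0;1;1;1;0;0;1;0;0;0;0;0;1;1;1;0;0;1;0];
  [:: 0;0;0;0;0;0;1;1;0;0;1;0;0;0;1;0;0;1;0;0;1;1;0;0;1;1];
  [:: 1;0;0;1;0;1;1;1;1;0;1;1;1;0;1;0;1;1;0;0;0;1;0;1;1;0];
  [:: 1;0;0;0;0;1;0;1;0;0;0;0;0;1;0;0;0;0;1;1;0;1;0;0;1;0];
  [:: 1;1;0;0;0;1;0;0;0;1;0;1;1;1;0;1;0;0;1;1;0;1;1;0;1;1];
  [:: 0;1;1;1;1;1;1;1;0;1;0;0;0;0;0;1;1;0;0;0;1;0;1;1;0;0];
  [:: 1;1;0;1;1;0;0;1;1;1;1;1;0;1;0;1;1;1;1;1;0;0;0;1;1;1];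
  [:: 0;0;0;0;1;1;0;1;1;1;0;0;0;0;1;0;0;0;0;1;1;0;1;0;1;0];
  [:: 1;1;0;1;0;0;0;0;1;0;0;1;0;1;0;0;0;1;0;0;1;1;0;1;1;0];
  [:: 0;0;0;1;1;1;0;0;0;0;0;1;1;0;0;1;1;1;1;1;0;1;1;1;0;1];
  [:: 0;1;1;1;0;0;1;0;0;0;0;1;1;1;1;0;1;0;0;1;0;1;0;0;1;0]].
Definition c26_n : seq (seq nat) := [:: [:: 0;0;1;0;1;1;0;1;0;1;1;1;0;1;0;0;1;1;1;0;0;0;0;0;0;0];
  [:: 0;1;1;0;1;0;1;1;0;0;1;1;1;1;0;0;1;1;0;1;0;0;0;1;1;0];
  [:: 1;1;0;0;1;0;0;0;0;0;0;1;1;0;0;0;0;1;1;0;1;1;1;0;0;1];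
  [:: 0;0;0;1;0;1;1;1;0;1;1;1;1;1;0;1;0;1;0;0;0;0;0;1;1;1];
  [:: 1;1;1;0;0;0;1;0;0;0;0;0;0;1;0;1;1;0;0;0;1;0;1;1;0;1];
  [:: 1;0;0;1;0;1;0;0;1;1;0;1;1;0;1;1;1;0;0;0;1;1;0;0;0;0];
  [:: 0;1;0;1;1;0;1;0;1;0;0;0;0;1;1;0;0;0;1;0;1;1;1;0;0;1];
  [:: 1;1;0;1;0;0;0;0;1;1;0;0;1;0;0;1;1;1;1;0;1;0;0;0;0;0];
  [:: 0;0;0;0;0;1;1;1;0;1;0;1;0;0;0;0;1;0;1;1;1;1;0;1;0;1];
  [:: 1;0;0;1;0;1;0;1;1;1;0;0;0;0;0;0;1;0;1;1;1;1;0;0;1;1];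
  [:: 1;1;0;1;0;0;0;0;0;0;0;1;1;0;1;1;0;0;0;0;1;1;0;1;0;0];
  [:: 1;1;1;1;0;1;0;0;1;0;1;0;0;0;1;1;1;0;1;1;0;1;1;1;0;0];
  [:: 0;1;1;1;0;1;0;1;0;0;1;0;0;0;1;0;0;0;1;0;0;1;1;0;1;1];
  [:: 1;1;0;1;1;0;1;0;0;0;0;0;0;1;1;0;1;1;0;1;0;1;0;1;1;0];
  [:: 0;0;0;0;0;1;1;0;0;0;1;1;1;1;0;1;1;1;0;1;0;0;0;0;1;0];
  [:: 0;0;0;1;1;1;0;1;0;0;1;1;0;0;1;0;1;0;0;0;0;0;1;1;0;0];
  [:: 1;1;0;0;1;1;0;1;1;1;0;1;0;1;1;1;1;1;1;1;1;1;1;1;0;0];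
  [:: 1;1;1;1;0;0;0;1;0;0;0;0;0;1;1;0;1;1;1;0;1;0;0;1;1;1];
  [:: 1;0;1;0;0;0;1;1;1;1;0;1;1;0;0;0;1;1;1;0;1;1;1;0;0;0];
  [:: 0;1;0;0;0;0;0;0;1;1;0;1;0;1;1;0;1;0;0;1;1;1;0;1;0;0];
  [:: 0;0;1;0;1;1;1;1;1;1;1;0;0;0;0;0;1;1;1;1;0;0;1;1;1;1];
  [:: 0;0;1;0;0;1;1;0;1;1;1;1;1;1;0;0;1;0;1;1;0;0;1;0;0;0];
  [:: 0;0;1;0;1;0;1;0;0;0;0;1;1;0;0;1;1;0;1;0;1;1;0;0;1;1];
  [:: 0;1;0;1;1;0;0;0;1;0;1;1;0;1;0;1;1;1;0;1;1;0;0;0;0;0];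
  [:: 0;1;0;1;0;0;0;0;0;1;0;0;1;1;1;0;0;1;0;0;1;0;1;0;0;0];
  [:: 0;0;1;1;1;0;1;0;1;1;0;0;1;0;0;0;0;1;0;0;1;0;1;0;0;0]].
Lemma c26_good : good (26 + 26) 26 6.
Proof. apply: (@base_good 26 6 2 (dec c26_r) (dec c26_i) (dec c26_n) 0). vm_compute. reflexivity. Qed.

Definition c28_r : seq (seq nat) := [:: [:: 0;1;0;0;0;0;1;0;0;0;1;0;1;0;0;0;0;0;0;0;0;0;1;0;0;0;0;0];
  [:: 1;1;1;0;1;1;1;0;0;0;1;0;1;1;1;0;0;1;0;0;0;1;1;1;1;1;1;1];
  [:: 0;1;1;1;1;0;0;0;0;1;0;1;0;0;0;0;1;1;1;1;1;0;0;0;1;1;1;0];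
  [:: 0;0;1;1;1;0;0;0;0;0;1;0;0;1;1;1;1;1;1;1;1;1;1;0;0;1;0;0];
  [:: 0;1;1;1;0;0;1;0;1;1;1;1;0;0;1;0;0;0;1;0;1;1;0;1;0;1;0;0];
  [:: 0;1;0;0;0;0;0;1;1;0;1;0;0;0;0;0;1;1;1;0;0;0;0;0;1;0;1;1];
  [:: 1;1;0;0;1;0;1;0;0;1;1;0;0;1;0;0;0;1;1;1;0;0;0;0;0;0;1;0];
  [:: 0;0;0;0;0;1;0;1;0;1;1;1;1;0;1;1;0;0;0;0;1;1;1;1;1;1;0;0];
  [:: 0;0;0;0;1;1;0;0;0;1;0;1;1;0;0;1;0;1;1;1;1;1;0;0;1;0;1;0];
  [:: 0;0;1;0;1;0;1;1;1;1;0;0;0;1;1;0;0;1;1;1;0;0;1;0;0;1;1;0];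
  [:: 1;1;0;1;1;1;1;1;0;0;1;0;1;0;1;0;1;1;1;1;1;0;0;0;0;0;0;1];
  [:: 0;0;1;0;1;0;0;1;1;0;0;0;1;0;0;1;0;0;1;0;0;1;0;1;0;1;1;1];
  [:: 1;1;0;0;0;0;0;1;1;0;1;1;1;0;0;1;1;0;1;0;1;0;0;1;0;1;0;1];
  [:: 0;1;0;1;0;0;1;0;0;1;0;0;0;1;1;0;0;0;0;1;0;1;0;0;1;0;0;0];
  [:: 0;1;0;1;1;0;0;1;0;1;1;0;0;1;1;1;1;1;0;0;0;0;1;1;1;1;0;1];
  [:: 0;0;0;1;0;0;0;1;1;0;0;1;1;0;1;0;0;0;1;0;1;1;1;0;0;1;1;1];
  [:: 0;0;1;1;0;1;0;0;0;0;1;0;1;0;1;0;0;0;0;0;1;1;1;1;1;0;0;0];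
  [:: 0;1;1;1;0;1;1;0;1;1;1;0;0;0;1;0;0;0;1;0;0;1;1;0;1;1;1;0];
  [:: 0;0;1;1;1;1;1;0;1;1;1;1;1;0;0;1;0;1;1;0;1;0;1;0;1;0;0;0];
  [:: 0;0;1;1;0;0;1;0;1;1;1;0;0;1;0;0;0;0;0;0;1;0;1;1;1;0;0;1];
  [:: 0;0;1;1;1;0;0;1;1;0;1;0;1;0;0;1;1;0;1;1;0;0;1;0;0;0;1;0];
  [:: 0;1;0;1;1;0;0;1;1;0;0;1;0;1;0;1;1;1;0;0;0;1;0;0;1;1;1;0];
  [:: 1;1;0;1;0;0;0;1;0;1;0;0;0;0;1;1;1;1;1;1;1;0;0;0;0;1;0;1];
  [:: 0;1;0;0;1;0;0;1;0;0;0;1;1;0;1;0;1;0;0;1;0;0;0;0;0;1;1;0];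
  [:: 0;1;1;0;0;1;0;1;1;0;0;0;0;1;1;0;1;1;1;1;0;1;0;0;1;0;0;0];
  [:: 0;1;1;1;1;0;0;1;0;1;0;1;1;0;1;1;0;1;0;0;0;1;1;1;0;1;0;1];
  [:: 0;1;1;0;0;1;1;0;1;1;0;1;0;0;0;1;0;1;0;0;1;1;0;1;0;0;0;1];
  [:: 0;1;0;0;0;1;0;0;0;0;1;1;1;0;1;1;0;0;0;1;0;0;1;0;0;1;1;0]].
Definition c28_i : seq (seq nat) := [:: [:: 0;1;1;1;0;1;1;0;1;0;1;0;1;1;0;1;0;1;0;0;1;1;1;1;1;1;1;0];
  [:: 1;1;0;0;0;1;1;0;1;0;1;1;0;0;1;1;0;0;1;1;1;1;1;1;1;0;0;1];
  [:: 1;0;0;0;1;0;1;0;0;0;1;0;1;0;0;1;0;1;0;1;1;0;1;0;0;1;0;0];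
  [:: 1;0;0;0;0;1;0;0;1;0;1;1;1;1;0;0;0;0;0;1;0;1;0;1;1;1;0;1];
  [:: 0;0;1;0;1;1;0;1;1;1;0;0;0;0;1;1;0;1;0;1;1;1;0;1;0;0;0;1];
  [:: 1;1;0;1;1;0;1;1;0;0;0;0;0;1;1;0;0;0;1;0;1;0;0;0;1;0;0;1];
  [:: 1;1;1;0;0;1;1;0;1;1;1;1;1;0;0;1;1;0;0;0;0;0;0;1;1;0;0;1];
  [:: 0;0;0;0;1;1;0;0;1;1;1;1;1;1;1;0;1;1;1;0;0;0;0;1;1;1;0;0];
  [:: 1;1;0;1;1;0;1;1;0;0;1;1;0;1;1;1;1;1;1;1;0;1;1;0;1;0;1;0];
  [:: 0;0;0;0;1;0;1;1;0;0;1;0;0;0;0;0;1;1;0;1;0;0;0;1;0;1;1;1];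
  [:: 1;1;1;1;0;0;1;1;1;1;0;0;1;1;0;0;0;1;1;0;0;0;1;1;1;0;1;1];
  [:: 0;1;0;1;0;0;1;1;1;0;0;0;1;1;0;0;0;0;0;0;0;1;1;1;1;0;1;1];
  [:: 1;0;1;1;0;0;1;1;0;0;1;1;0;1;1;1;1;0;1;1;1;1;0;0;0;1;0;0];
  [:: 1;0;0;1;0;1;0;1;1;0;1;1;1;0;0;1;0;0;1;1;1;0;0;0;1;0;0;1];
  [:: 0;1;0;0;1;1;0;1;1;0;0;0;1;0;0;0;1;1;1;0;0;1;0;1;0;1;0;0];
  [:: 1;1;1;0;1;0;1;0;1;0;0;0;1;1;0;0;0;0;1;0;0;0;1;0;1;1;0;0];
  [:: 0;0;0;0;0;0;1;1;1;1;0;0;1;0;1;0;1;0;1;1;0;1;0;1;1;1;0;1];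
  [:: 1;0;1;0;1;0;0;1;1;1;1;0;0;0;1;0;0;0;0;0;0;0;1;0;0;1;0;1];
  [:: 0;1;0;0;0;1;0;1;1;0;1;0;1;1;1;1;1;0;0;1;0;1;1;1;1;0;0;0];
  [:: 0;1;1;1;1;0;0;0;1;1;0;0;1;1;0;0;1;0;1;0;1;0;0;0;0;1;1;1];
  [:: 1;1;1;0;1;1;0;0;0;0;0;0;1;1;0;0;0;0;0;1;0;1;0;0;0;1;1;0];
  [:: 1;1;0;1;1;0;0;0;1;0;0;1;1;0;1;0;1;0;1;0;1;0;0;1;1;0;0;1];
  [:: 1;1;1;0;0;0;0;0;1;0;1;1;0;0;0;1;0;1;1;0;0;0;0;1;1;1;1;1];
  [:: 1;1;0;1;1;0;1;1;0;1;1;1;0;0;1;0;1;0;1;0;0;1;1;1;0;0;1;0];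
  [:: 1;1;0;1;0;1;1;1;1;0;1;1;0;1;0;1;1;0;1;0;0;1;1;0;1;0;0;1];
  [:: 1;0;1;1;0;0;0;1;0;1;0;0;1;0;1;1;1;1;0;1;1;0;1;0;0;1;0;1];
  [:: 1;0;0;0;0;0;0;0;1;1;1;1;0;0;0;0;0;0;0;1;1;0;1;1;0;0;0;0];
  [:: 0;1;0;1;1;1;1;0;0;1;1;1;0;1;0;0;1;1;0;1;0;1;1;0;1;1;0;1]].
Definition c28_n : seq (seq nat) := [:: [:: 1;0;0;1;1;0;1;0;0;1;0;1;1;1;1;0;1;1;0;1;1;1;0;0;0;0;0;0];
  [:: 0;1;0;0;0;0;0;0;0;0;1;0;0;0;1;1;0;0;0;1;0;1;0;1;0;1;1;1];
  [:: 0;0;1;0;1;1;0;1;0;0;0;0;1;0;1;0;1;1;1;1;0;0;1;0;0;0;0;1];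
  [:: 1;0;0;1;0;1;0;1;0;1;0;0;1;0;0;0;1;0;1;1;0;1;0;1;0;1;0;0];
  [:: 1;0;1;0;0;1;1;0;1;1;0;0;1;0;0;1;1;0;0;1;0;1;1;0;0;0;1;0];
  [:: 0;0;1;1;1;0;0;1;1;1;1;0;0;0;1;0;0;0;0;1;0;1;1;1;1;1;0;1];
  [:: 1;0;0;0;1;0;0;1;0;0;1;1;1;1;0;0;0;1;0;1;1;0;1;1;1;1;1;1];
  [:: 0;0;1;1;0;1;1;1;1;1;1;0;1;1;1;1;1;0;1;0;0;0;1;0;0;0;0;0];
  [:: 0;0;0;0;1;1;0;1;0;1;1;0;0;0;0;0;1;1;0;1;1;1;1;1;1;0;1;1];
  [:: 1;0;0;1;1;1;0;1;1;1;0;0;1;1;1;0;0;1;0;0;0;0;0;1;1;0;1;0];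
  [:: 0;1;0;0;0;1;1;1;1;0;1;0;1;0;0;1;0;0;1;1;1;0;0;1;1;1;0;1];
  [:: 1;0;0;0;0;0;1;0;0;0;0;0;0;1;0;1;1;1;0;1;1;0;0;0;0;0;0;0];
  [:: 1;0;1;1;1;0;1;1;0;1;1;0;0;1;1;0;1;0;0;1;0;0;1;1;1;0;0;0];
  [:: 1;0;0;0;0;0;1;1;0;1;0;1;1;0;1;0;0;1;1;1;0;1;1;0;0;0;1;0];
  [:: 1;1;1;0;0;1;0;1;0;1;0;0;1;1;1;1;0;1;1;1;0;1;1;1;1;1;1;1];
  [:: 0;1;0;0;1;0;0;1;0;0;1;1;0;0;1;1;0;0;0;1;1;0;0;0;1;0;0;0];
  [:: 1;0;1;1;1;0;0;1;1;0;0;1;1;0;0;0;0;1;1;0;1;1;0;0;0;0;0;0];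
  [:: 1;0;1;0;0;0;1;0;1;1;0;1;0;1;1;0;1;1;0;0;1;0;0;1;1;0;0;0];
  [:: 0;0;1;1;0;0;0;1;0;0;1;0;0;1;1;0;1;0;0;0;0;1;1;0;1;1;0;0];
  [:: 1;1;1;1;1;1;1;0;1;0;1;1;1;1;1;1;0;0;0;0;1;0;1;0;0;0;1;1];
  [:: 1;0;0;0;0;0;1;0;1;0;1;1;0;0;0;1;1;1;0;1;1;0;1;0;0;1;0;0];
  [:: 1;1;0;1;1;1;0;0;1;0;0;0;0;1;1;0;1;0;1;0;0;1;0;1;0;0;1;0];
  [:: 0;0;1;0;1;1;1;1;1;0;0;0;1;1;1;0;0;0;1;1;1;0;0;0;1;1;0;1];
  [:: 0;1;0;1;0;1;1;0;1;1;1;0;1;0;1;0;0;1;0;0;0;1;0;0;0;0;0;1];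
  [:: 0;0;0;0;0;1;1;0;1;1;1;0;1;0;1;1;0;1;1;0;0;0;1;0;1;0;0;0];
  [:: 0;1;0;1;0;1;1;0;0;0;1;0;0;0;1;0;0;0;1;0;1;0;1;0;0;1;1;1];
  [:: 0;1;0;0;1;0;1;0;1;1;0;0;0;1;1;0;0;0;0;1;0;1;0;0;0;1;1;1];
  [:: 0;1;1;0;0;1;1;0;1;0;1;0;0;0;1;0;0;0;0;1;0;0;1;1;0;1;1;1]].
Lemma c28_good : good (28 + 28) 28 6.
Proof. apply: (@base_good 28 6 2 (dec c28_r) (dec c28_i) (dec c28_n) 0). vm_compute. reflexivity. Qed.

Definition c30_r : seq (seq nat) := [:: [:: 0;0;1;0;0;0;0;0;0;0;0;0;1;0;0;0;1;0;0;1;0;0;0;1;0;0;0;0;0;0];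
  [:: 0;1;1;1;1;1;0;0;0;1;1;1;0;0;0;0;0;0;1;1;0;0;1;0;1;0;0;1;0;0];
  [:: 1;1;1;0;0;1;1;0;0;1;0;1;0;1;0;1;0;0;0;0;0;1;1;1;0;1;1;0;1;0];
  [:: 0;1;0;1;1;0;0;1;1;1;0;1;0;0;0;0;0;1;0;0;1;0;1;0;0;1;1;1;1;1];
  [:: 0;1;0;1;0;0;0;0;0;1;0;1;0;0;0;0;1;0;1;0;0;1;0;0;1;0;0;1;1;0];
  [:: 0;1;1;0;0;0;0;0;1;0;0;1;1;0;1;1;0;0;0;0;1;0;1;0;1;0;0;0;1;1];
  [:: 0;0;1;0;0;0;0;1;0;0;0;1;1;1;1;1;1;1;1;0;1;0;0;1;0;1;1;1;0;0];
  [:: 0;0;0;1;0;0;1;1;0;1;1;1;1;1;1;1;0;1;0;0;0;1;0;1;1;1;1;1;1;1];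
  [:: 0;0;0;1;0;1;0;0;0;0;1;0;0;0;1;1;1;0;0;0;0;0;1;1;1;0;0;0;0;0];
  [:: 0;1;1;1;1;0;0;1;0;1;1;0;0;1;0;1;0;1;1;0;0;1;1;1;1;0;0;0;1;0];
  [:: 0;1;0;0;0;0;0;1;1;1;0;1;1;1;0;1;1;0;0;1;0;1;1;0;0;0;1;1;0;1];
  [:: 0;1;1;1;1;1;1;1;0;0;1;0;0;0;1;0;1;1;0;0;0;0;0;1;1;1;1;0;1;0];
  [:: 1;0;0;0;0;1;1;1;0;0;1;0;1;1;0;0;1;0;0;0;0;0;0;1;0;0;0;0;0;1];
  [:: 0;0;1;0;0;0;1;1;0;1;1;0;1;0;0;1;1;0;1;1;1;1;0;1;1;1;1;1;0;1];
  [:: 0;0;0;0;0;1;1;1;1;0;0;1;0;0;1;0;1;0;0;1;0;0;1;1;0;0;0;0;1;0];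
  [:: 0;0;1;0;0;1;1;1;1;1;1;0;0;1;0;0;0;0;0;0;1;0;1;1;0;1;1;0;1;1];
  [:: 1;0;0;0;1;0;1;0;1;0;1;1;1;1;1;0;1;0;1;1;0;1;0;1;0;0;1;0;1;0];
  [:: 0;0;0;1;0;0;1;1;0;1;0;1;0;0;0;0;0;1;1;0;0;0;1;1;0;1;0;1;0;1];
  [:: 0;1;0;0;1;0;1;0;0;1;0;0;0;1;0;0;1;1;0;1;0;0;1;1;1;0;1;1;0;0];
  [:: 1;1;0;0;0;0;0;0;0;0;1;0;0;1;1;0;1;0;1;0;0;0;1;0;1;1;1;1;1;0];
  [:: 0;0;0;1;0;1;1;0;0;0;0;0;0;1;0;1;0;0;0;0;0;1;1;1;0;1;0;0;0;0];
  [:: 0;0;1;0;1;0;0;1;0;1;1;0;0;1;0;0;1;0;0;0;1;0;1;1;0;0;1;1;0;0];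
  [:: 0;1;1;1;0;1;0;0;1;1;1;0;0;0;1;1;0;1;1;1;1;1;1;1;0;0;1;1;0;0];
  [:: 1;0;1;0;0;0;1;1;1;1;0;1;1;1;1;1;1;1;1;0;1;1;1;1;0;1;1;0;1;1];
  [:: 0;1;0;0;1;1;0;1;1;1;0;1;0;1;0;0;0;0;1;1;0;0;0;0;1;0;1;1;1;1];
  [:: 0;0;1;1;0;0;1;1;0;0;0;1;0;1;0;1;0;1;0;1;1;0;0;1;0;0;1;1;0;1];
  [:: 0;0;1;1;0;0;1;1;0;0;1;1;0;1;0;1;1;0;1;1;0;1;1;1;1;1;0;0;0;0];
  [:: 0;1;0;1;1;0;1;1;0;0;1;0;0;1;0;0;0;1;1;1;0;1;1;0;1;1;0;0;1;0];
  [:: 0;0;1;1;1;1;0;1;0;1;0;1;0;0;1;1;1;0;0;1;0;0;0;1;1;0;0;1;0;0];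
  [:: 0;0;0;1;0;1;0;1;0;0;1;0;1;1;0;1;0;1;0;0;0;0;0;1;1;1;0;0;0;0]].
Definition c30_i : seq (seq nat) := [:: [:: 1;1;0;0;1;0;0;1;1;1;0;0;0;0;0;1;0;1;0;1;0;1;1;0;0;1;1;1;0;0];
  [:: 1;1;0;1;1;1;1;1;0;0;0;1;1;0;1;0;1;1;0;1;0;1;0;1;1;1;0;0;0;1];
  [:: 0;0;1;1;0;0;1;0;0;0;1;1;0;0;1;0;1;1;1;1;1;0;1;1;0;0;1;1;1;0];
  [:: 0;1;1;1;1;1;1;1;1;1;0;1;0;0;0;1;0;1;1;0;0;1;1;1;1;1;0;0;1;0];
  [:: 1;1;0;1;0;1;1;1;0;0;0;0;0;0;0;1;0;0;0;0;1;1;1;0;0;0;1;0;0;0];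
  [:: 0;1;0;1;1;0;1;1;1;0;0;1;1;0;0;1;0;0;0;1;1;1;1;0;1;1;1;1;0;1];
  [:: 0;1;1;1;1;1;0;0;0;0;0;0;1;0;1;1;1;1;0;0;0;0;1;1;1;1;0;1;1;0];
  [:: 1;1;0;1;1;1;0;0;1;0;0;0;1;0;0;0;0;1;1;0;0;1;1;1;0;1;1;0;0;0];
  [:: 1;0;0;1;0;1;0;1;1;1;1;1;0;0;1;1;0;1;0;0;1;1;0;0;0;0;1;1;1;0];
  [:: 1;0;0;1;0;0;0;0;1;0;0;1;0;1;1;0;1;0;1;1;1;1;1;0;0;0;1;1;0;1];
  [:: 0;0;1;0;0;0;0;0;1;0;1;1;1;0;1;0;1;0;1;0;1;0;1;1;1;0;0;0;0;0];
  [:: 0;1;1;1;0;1;0;0;1;1;1;1;0;0;0;0;0;0;1;1;0;0;1;0;0;1;0;0;1;0];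
  [:: 0;1;0;0;0;1;1;1;0;0;1;0;1;1;0;0;1;0;0;1;0;0;1;1;1;1;0;0;1;1];
  [:: 0;0;0;0;0;0;0;0;0;1;0;0;1;1;0;1;0;0;1;0;1;1;1;1;1;1;1;0;0;1];
  [:: 0;1;1;0;0;0;1;0;1;1;1;0;0;0;0;0;0;0;0;1;0;1;0;0;1;0;1;0;0;0];
  [:: 1;0;0;1;1;1;1;0;1;0;0;0;0;1;0;0;1;1;1;0;1;0;1;1;1;0;0;0;0;0];
  [:: 0;1;1;0;0;0;1;0;0;1;1;0;1;0;0;1;0;0;1;1;1;0;1;1;0;0;1;1;0;0];
  [:: 1;1;1;1;0;0;1;1;1;0;0;0;0;0;0;1;0;0;0;1;0;0;1;0;1;0;1;0;1;1];
  [:: 0;0;1;1;0;0;0;1;0;1;1;1;0;1;0;1;1;0;1;1;0;1;0;1;1;1;1;0;1;1];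
  [:: 1;1;1;0;0;1;0;0;0;1;0;1;1;0;1;0;1;1;1;0;0;0;1;1;1;1;1;0;0;1];
  [:: 0;0;1;0;1;1;0;0;1;1;1;0;0;1;0;1;1;0;0;0;1;0;1;0;1;1;1;1;0;0];
  [:: 1;1;0;1;1;1;0;1;1;1;0;0;0;1;1;0;0;0;1;0;0;0;0;0;1;1;0;1;0;0];
  [:: 1;0;1;1;1;1;1;1;0;1;1;1;1;1;0;1;1;1;0;1;1;0;0;0;1;1;1;1;0;0];
  [:: 0;1;1;1;0;0;1;1;0;0;1;0;1;1;0;1;1;0;1;1;0;0;0;0;0;0;1;0;0;0];
  [:: 0;1;0;1;0;1;1;0;0;0;1;0;1;1;1;1;0;1;1;1;1;1;1;0;0;1;1;1;1;1];
  [:: 1;1;0;1;0;1;1;1;0;0;0;1;1;1;0;0;0;0;1;1;1;1;1;0;1;0;0;0;0;0];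
  [:: 1;0;1;0;1;1;0;1;1;1;0;0;0;1;1;0;1;1;1;1;1;0;1;1;1;0;1;0;0;0];
  [:: 1;0;1;0;0;1;1;0;1;1;0;0;0;0;0;0;1;0;0;0;1;1;1;0;1;0;0;1;1;0];
  [:: 0;0;1;1;0;0;1;0;1;0;0;1;1;0;0;0;0;1;1;0;0;0;0;0;1;0;0;1;1;0];
  [:: 0;1;0;0;0;1;0;0;0;1;0;0;1;1;0;0;0;1;1;1;0;0;0;0;1;0;0;0;0;1]].
Definition c30_n : seq (seq nat) := [:: [:: 1;0;1;0;0;1;1;1;1;1;0;0;1;1;1;1;0;1;1;0;1;0;0;0;0;1;1;0;0;1];
  [:: 0;1;1;0;1;0;0;0;0;0;0;0;1;1;0;0;0;0;0;1;0;0;0;1;1;0;1;1;0;0];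
  [:: 1;1;0;0;1;1;0;0;0;0;0;0;1;1;0;0;0;0;0;1;1;0;1;1;1;1;0;1;0;0];
  [:: 0;0;0;1;0;1;0;1;0;1;1;0;1;0;1;0;1;1;0;1;0;1;1;1;1;1;0;1;0;1];
  [:: 0;1;1;0;1;0;0;1;1;1;1;0;1;0;1;0;1;1;1;0;0;1;0;1;1;0;0;0;0;0];
  [:: 1;0;1;1;0;1;0;0;0;1;1;1;0;0;0;1;0;1;0;0;0;1;0;0;0;0;0;0;0;1];
  [:: 1;0;0;0;0;0;1;1;1;0;0;1;0;0;1;0;0;1;0;0;1;1;0;1;1;0;0;0;1;0];
  [:: 1;0;0;1;1;0;1;1;0;0;1;0;1;1;0;1;1;1;0;1;0;1;0;0;0;1;0;0;0;0];
  [:: 1;0;0;0;1;0;1;0;1;1;1;1;0;1;1;0;0;0;0;1;0;0;1;0;1;1;0;1;1;0];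
  [:: 1;0;0;1;1;1;0;0;1;1;1;1;0;1;1;0;0;1;1;0;1;0;0;1;0;1;1;1;0;1];
  [:: 0;0;0;1;1;1;0;1;1;1;0;1;0;0;1;0;0;0;0;0;0;1;0;0;0;1;1;1;0;0];
  [:: 0;0;0;0;0;1;1;0;1;1;1;0;1;0;1;0;0;1;0;1;0;1;1;0;1;0;0;0;1;1];
  [:: 1;1;1;1;1;0;0;1;0;0;0;1;0;0;0;0;0;0;0;1;0;1;1;1;1;0;1;1;1;0];
  [:: 1;1;1;0;0;0;0;1;1;1;0;0;0;1;1;1;0;0;0;1;0;1;1;1;1;1;0;1;1;0];
  [:: 1;0;0;1;1;0;1;0;1;1;1;1;0;1;0;1;1;0;1;1;0;0;0;1;0;1;1;1;1;0];
  [:: 1;0;0;0;0;1;0;1;0;0;0;0;0;1;1;1;0;1;0;1;0;1;1;0;0;1;1;1;0;0];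
  [:: 0;0;0;1;1;0;0;1;0;0;0;0;0;0;1;0;1;1;0;1;0;1;1;0;0;1;1;0;0;0];
  [:: 1;0;0;1;1;1;1;1;0;1;0;1;0;0;0;1;1;0;1;1;1;0;0;1;1;0;0;0;1;0];
  [:: 1;0;0;0;1;0;0;0;0;1;0;0;0;0;1;0;0;1;1;0;0;1;0;1;0;0;1;1;1;0];
  [:: 0;1;1;1;0;0;0;1;1;0;0;1;1;1;1;1;1;1;0;0;1;0;1;1;1;0;0;1;0;0];
  [:: 1;0;1;0;0;0;1;0;0;1;0;0;0;0;0;0;0;1;0;1;0;1;0;1;1;0;0;0;1;1];
  [:: 0;0;0;1;1;1;1;1;0;0;1;1;1;1;0;1;1;0;1;0;1;0;1;0;0;1;1;1;0;0];
  [:: 0;0;1;1;0;0;0;0;1;0;0;1;1;1;0;1;1;0;0;1;0;1;1;0;1;1;1;0;1;0];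
  [:: 0;1;1;1;1;0;1;0;0;1;0;0;1;1;1;0;0;1;1;1;1;0;0;1;1;1;1;1;1;1];
  [:: 0;1;1;1;1;0;1;0;1;0;0;1;1;1;0;0;0;1;0;1;1;0;1;1;0;0;0;0;0;1];
  [:: 1;0;1;1;0;0;0;1;1;1;1;0;0;1;1;1;1;0;0;0;0;1;1;1;0;0;0;1;1;0];
  [:: 1;1;0;0;0;0;0;0;0;1;1;0;1;0;1;1;1;0;1;0;0;1;1;1;0;0;0;0;1;0];
  [:: 0;1;1;1;0;0;0;0;1;1;1;0;1;1;1;1;0;0;1;1;0;1;0;1;0;1;0;0;1;1];
  [:: 0;0;0;0;0;0;1;0;1;0;0;1;1;1;1;0;0;1;1;0;1;0;1;1;0;1;1;1;1;1];
  [:: 1;0;0;1;0;1;0;0;0;1;0;1;0;0;0;0;0;0;0;0;1;0;0;1;1;0;0;1;1;1]].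
Lemma c30_good : good (30 + 30) 30 6.
Proof. apply: (@base_good 30 6 2 (dec c30_r) (dec c30_i) (dec c30_n) 0). vm_compute. reflexivity. Qed.

Definition c32_r : seq (seq nat) := [:: [:: 0;1;0;0;0;0;0;1;0;0;0;1;0;1;0;0;0;0;0;0;0;0;0;0;0;0;0;0;1;0;0;0];
  [:: 1;0;1;1;0;1;0;0;1;1;0;0;0;1;1;0;1;0;1;0;1;1;1;1;0;1;1;0;0;1;0;1];
  [:: 0;1;1;1;1;1;0;1;0;0;0;0;1;0;0;1;0;1;0;0;0;0;0;1;0;0;0;0;0;0;1;1];
  [:: 0;1;1;0;1;1;1;1;1;1;0;1;1;1;0;0;0;0;1;1;0;1;1;1;0;1;0;1;1;1;1;1];
  [:: 0;0;1;1;0;1;0;0;1;0;1;1;1;0;1;0;0;1;0;0;0;1;1;0;0;0;0;0;0;0;1;0];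
  [:: 0;1;1;1;1;0;0;0;1;0;0;1;0;0;0;0;0;1;0;0;1;0;1;1;0;0;0;1;0;1;1;1];
  [:: 0;0;0;1;0;0;0;0;0;1;0;1;0;1;0;1;1;1;1;0;1;0;1;0;1;1;0;1;1;1;1;1];
  [:: 1;0;1;1;0;0;0;0;1;1;0;1;0;1;1;0;1;0;0;0;0;1;0;0;0;1;0;0;0;1;1;0];
  [:: 0;1;0;1;1;1;0;1;1;0;1;0;0;0;1;1;1;1;1;0;1;1;0;0;1;0;0;1;1;0;0;0];
  [:: 0;1;0;1;0;0;1;1;0;1;1;1;0;0;1;1;0;1;1;0;0;1;0;1;1;0;0;1;1;0;0;0];
  [:: 0;0;0;0;1;0;0;0;1;1;1;0;1;1;0;1;0;1;1;1;0;1;0;0;0;1;1;0;0;1;0;0];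
  [:: 1;0;0;1;1;1;1;1;0;1;0;1;0;0;0;1;1;1;1;1;0;1;1;0;1;1;1;0;0;0;0;1];
  [:: 0;0;1;1;1;0;0;0;0;0;1;0;0;0;0;0;0;1;0;1;0;1;0;1;0;1;1;0;0;0;0;0];
  [:: 1;1;0;1;0;0;1;1;0;0;1;0;0;1;0;0;1;0;1;0;1;0;0;0;1;0;1;1;0;1;1;0];
  [:: 0;1;0;0;1;0;0;1;1;1;0;0;0;0;1;1;1;1;1;0;0;0;0;0;0;1;0;1;1;1;0;0];
  [:: 0;0;1;0;0;0;1;0;1;1;1;1;0;0;1;1;1;0;1;1;0;1;0;0;0;1;0;1;0;0;1;0];
  [:: 0;1;0;0;0;0;1;1;1;0;0;1;0;1;1;1;0;1;1;0;1;1;0;0;1;1;1;1;1;1;1;0];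
  [:: 0;0;1;0;1;1;1;0;1;1;1;1;1;0;1;0;1;0;1;1;1;0;1;1;1;1;0;0;0;0;0;1];
  [:: 0;1;0;1;0;0;1;0;1;1;1;1;0;1;1;1;1;1;1;0;1;1;0;1;1;1;1;1;0;0;1;1];
  [:: 0;0;0;1;0;0;0;0;0;0;1;1;1;0;0;1;0;1;0;1;0;0;1;1;0;1;1;1;0;1;0;1];
  [:: 0;1;0;0;0;1;1;0;1;0;0;0;0;1;0;0;1;1;1;0;0;1;1;1;0;0;1;0;0;1;1;0];
  [:: 0;1;0;1;1;0;0;1;1;1;1;1;1;0;0;1;1;0;1;0;1;0;0;0;0;1;1;1;0;1;0;1];
  [:: 0;1;0;1;1;1;1;0;0;0;0;1;0;0;0;0;0;1;0;1;1;0;1;0;1;0;0;0;1;0;0;0];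
  [:: 0;1;1;1;0;1;0;0;0;1;0;0;1;0;0;0;0;1;1;1;1;0;0;1;1;0;1;0;0;0;1;1];
  [:: 0;0;0;0;0;0;1;0;1;1;0;1;0;1;0;0;1;1;1;0;0;0;1;1;1;1;0;0;0;1;0;0];
  [:: 0;1;0;1;0;0;1;1;0;0;1;1;1;0;1;1;1;1;1;1;0;1;0;0;1;1;1;0;0;0;0;0];
  [:: 0;1;0;0;0;0;0;0;0;0;1;1;1;1;0;0;1;0;1;1;1;1;0;1;0;1;0;0;0;0;1;1];
  [:: 0;0;0;1;0;1;1;0;1;1;0;0;0;1;1;1;1;0;1;1;0;1;0;0;0;0;0;1;0;0;0;1];
  [:: 1;0;0;1;0;0;1;0;1;1;0;0;0;0;1;0;1;0;0;0;0;0;1;0;0;0;0;0;0;1;0;1];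
  [:: 0;1;0;1;0;1;1;1;0;0;1;0;0;1;1;0;1;0;0;1;1;1;0;0;1;0;0;0;1;1;1;1];
  [:: 0;0;1;1;1;1;1;1;0;0;0;0;0;1;0;1;1;0;1;0;1;0;0;1;0;0;1;0;0;1;1;1];
  [:: 0;1;1;1;0;1;1;0;0;0;0;1;0;0;0;0;0;1;1;1;0;1;0;1;0;0;1;1;1;1;1;1]].
Definition c32_i : seq (seq nat) := [:: [:: 0;1;0;0;1;1;1;1;1;1;0;0;0;1;0;1;0;1;0;1;0;0;0;1;0;1;1;1;0;1;1;0];
  [:: 1;1;1;1;0;0;0;1;1;1;0;1;0;0;1;1;1;0;1;1;0;0;1;0;0;0;1;1;1;0;0;1];
  [:: 0;1;1;0;0;1;0;0;0;1;1;0;0;0;1;0;1;1;1;0;0;0;0;1;0;1;1;0;1;0;1;1];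
  [:: 0;1;0;0;0;0;1;0;0;0;1;1;1;0;1;1;0;1;0;1;0;1;1;0;0;0;0;0;0;0;1;1];
  [:: 1;0;0;0;0;1;0;0;0;0;1;0;0;0;1;0;1;1;0;0;1;0;0;1;1;1;0;1;0;1;1;0];
  [:: 1;0;1;0;1;1;1;1;1;0;1;0;1;1;1;0;0;1;1;0;1;0;1;1;0;1;0;1;0;0;0;1];
  [:: 1;0;0;1;0;1;1;0;1;0;1;0;1;0;1;1;0;0;0;1;1;1;1;0;0;1;1;0;0;0;0;0];
  [:: 1;1;0;0;0;1;0;1;1;1;1;0;1;1;1;1;1;0;0;0;1;0;1;1;1;1;1;1;1;0;0;0];
  [:: 1;1;0;0;0;1;1;1;1;1;0;1;0;1;0;0;1;0;0;0;1;0;0;0;1;0;0;0;0;1;1;0];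
  [:: 1;1;1;0;0;0;0;1;1;0;0;1;1;1;0;0;1;0;0;1;0;1;1;0;0;1;0;1;0;0;0;0];
  [:: 0;0;1;1;1;1;1;1;0;0;0;1;1;0;1;0;1;1;0;0;1;0;1;0;0;1;1;0;0;0;0;1];
  [:: 0;1;0;1;0;0;0;0;1;1;1;1;0;0;0;0;1;1;0;0;1;1;1;1;0;1;0;0;0;0;1;1];
  [:: 0;0;0;1;0;1;1;1;0;1;1;0;0;0;0;1;1;0;1;0;0;0;0;0;0;1;0;0;1;1;1;1];
  [:: 1;0;0;0;0;1;0;1;1;1;0;0;0;1;1;0;1;1;0;1;0;1;0;0;1;1;0;0;0;1;1;0];
  [:: 0;1;1;1;1;1;1;1;0;0;1;0;0;1;1;1;0;1;0;0;1;1;1;0;1;1;1;1;1;0;0;0];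
  [:: 1;1;0;1;0;0;1;1;0;0;0;0;1;0;1;0;0;1;1;0;0;0;1;1;1;0;1;1;0;0;1;1];
  [:: 0;1;1;0;1;0;0;1;1;1;1;1;1;1;0;0;0;1;0;0;0;1;0;0;0;0;1;1;0;1;1;1];
  [:: 1;0;1;1;1;1;0;0;0;0;1;1;0;1;1;1;1;1;0;1;1;1;0;1;1;1;1;1;0;1;0;1];
  [:: 0;1;1;0;0;1;0;0;0;0;0;0;1;0;0;1;0;0;1;0;0;0;1;1;0;0;0;1;1;1;0;0];
  [:: 1;1;0;1;0;0;1;0;0;1;0;0;0;1;0;0;0;1;0;0;0;0;0;0;0;1;1;1;0;1;0;1];
  [:: 0;0;0;0;1;1;1;1;1;0;1;1;0;0;1;0;0;1;0;0;1;0;1;0;1;1;0;1;0;1;1;1];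
  [:: 0;0;0;1;0;0;1;0;0;1;0;1;0;1;1;0;1;1;0;0;0;0;0;0;0;1;1;0;0;1;0;0];
  [:: 0;1;0;1;0;1;1;1;0;1;1;1;0;0;1;1;0;0;1;0;1;0;0;1;0;0;1;0;1;1;1;1];
  [:: 1;0;1;0;1;1;0;1;0;0;0;1;0;0;0;1;0;1;1;0;0;0;1;1;1;0;0;1;0;0;1;0];
  [:: 0;0;0;0;1;0;0;1;1;0;0;0;0;1;1;1;0;1;0;0;1;0;0;1;1;0;1;0;0;0;1;0];
  [:: 1;0;1;0;1;1;1;1;0;1;1;1;1;1;1;0;0;1;0;1;1;1;0;0;0;1;1;1;1;0;0;0];
  [:: 1;1;1;0;0;0;1;1;0;0;1;0;0;0;1;1;1;1;0;1;0;1;1;0;1;1;0;1;0;0;0;1];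
  [:: 1;1;0;0;1;1;0;1;0;1;0;0;0;0;1;1;1;1;1;1;1;0;0;1;0;1;1;0;0;0;1;0];
  [:: 0;1;1;0;0;0;0;1;0;0;0;0;1;0;1;0;0;0;1;0;0;0;1;0;0;1;0;0;0;1;0;0];
  [:: 1;0;0;0;1;0;0;0;1;0;0;0;1;1;0;0;1;1;1;1;1;1;1;0;0;0;0;0;1;0;1;0];
  [:: 1;0;1;1;1;0;0;0;1;0;0;1;1;1;0;1;1;0;0;0;1;0;1;1;1;0;0;1;0;1;0;0];
  [:: 0;1;1;1;0;1;0;0;0;0;1;1;1;0;0;1;1;1;0;1;1;0;1;0;0;0;1;0;0;0;0;1]].
Definition c32_n : seq (seq nat) := [:: [:: 0;0;1;0;1;0;0;0;1;0;0;1;1;0;0;0;0;1;1;1;1;1;1;1;1;0;1;0;0;0;0;0];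
  [:: 0;1;1;0;1;1;1;1;1;0;1;0;0;1;1;1;1;0;0;0;0;1;0;0;1;1;1;1;1;1;1;0];
  [:: 1;1;1;0;0;1;1;1;1;0;0;0;1;1;0;0;0;0;0;1;0;1;0;0;0;0;0;0;0;1;1;0];
  [:: 0;0;0;1;1;1;1;1;1;0;0;0;1;0;0;1;1;1;1;1;1;0;0;1;0;1;1;0;1;1;0;0];
  [:: 1;1;0;1;0;0;0;1;1;1;1;1;1;0;0;0;1;0;0;1;1;1;0;1;1;0;0;0;0;1;1;0];
  [:: 0;1;1;1;0;1;1;0;0;0;0;0;1;1;1;0;0;1;0;0;1;1;1;1;0;1;1;1;0;0;0;0];
  [:: 0;1;1;1;0;1;1;1;1;0;1;0;1;0;0;1;0;1;1;1;1;1;0;1;1;0;0;1;0;1;0;0];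
  [:: 0;1;1;1;1;0;1;0;1;0;1;0;1;0;0;0;1;0;0;0;1;1;0;0;0;1;1;0;1;0;1;1];
  [:: 1;1;1;1;1;0;1;1;0;0;0;1;1;1;0;0;0;1;1;0;1;0;1;1;0;0;0;1;1;1;1;0];
  [:: 0;0;0;0;1;0;0;0;0;0;1;1;1;1;0;0;0;1;0;0;1;0;1;0;0;0;0;0;0;0;0;1];
  [:: 0;1;0;0;1;0;1;1;0;1;1;0;1;0;0;0;0;0;0;0;1;0;0;1;0;1;1;1;0;0;1;0];
  [:: 1;0;0;0;1;0;0;0;1;1;0;1;1;1;1;0;1;0;1;0;1;1;1;0;0;1;0;1;1;0;1;1];
  [:: 1;0;1;1;1;1;1;1;1;1;1;1;0;1;1;1;1;1;1;1;0;1;1;1;1;0;1;0;0;0;1;0];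
  [:: 0;1;1;0;0;1;0;0;1;1;0;1;1;0;0;1;0;1;1;0;1;0;1;1;1;1;1;1;0;0;1;1];
  [:: 0;1;0;0;0;1;0;0;0;0;0;1;1;0;0;1;1;0;0;1;0;1;0;1;0;1;1;1;0;0;0;1];
  [:: 0;1;0;1;0;0;1;0;0;0;0;0;1;1;1;0;1;1;1;0;1;1;1;1;1;1;0;1;0;0;0;1];
  [:: 0;1;0;1;1;0;0;1;0;0;0;1;1;0;1;1;0;0;0;1;0;0;1;0;0;0;0;1;1;0;0;0];
  [:: 1;0;0;1;0;1;1;0;1;1;0;0;1;1;0;1;0;0;0;0;1;0;0;1;0;1;0;0;0;0;0;1];
  [:: 1;0;0;1;0;0;1;0;1;0;0;1;1;1;0;1;0;0;0;0;1;0;1;1;1;1;0;1;1;1;1;1];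
  [:: 1;0;1;1;1;0;1;0;0;0;0;0;1;0;1;0;1;0;0;0;1;0;0;0;1;0;0;1;1;0;1;0];
  [:: 1;0;0;1;1;1;1;1;1;1;1;1;0;1;0;1;0;1;1;1;1;1;1;1;0;1;0;0;0;0;1;0];
  [:: 1;1;1;0;1;1;1;1;0;0;0;1;1;0;1;1;0;0;0;0;1;1;1;1;0;1;0;0;0;1;0;1];
  [:: 1;0;0;0;0;1;0;0;1;1;0;1;1;1;0;1;1;0;1;0;1;1;0;0;1;1;1;0;1;1;1;0];
  [:: 1;0;0;1;1;1;1;0;1;0;1;0;1;1;1;1;0;1;1;0;1;1;0;0;0;1;1;0;0;0;1;1];
  [:: 1;1;0;0;1;0;1;0;0;0;0;0;1;1;0;1;0;0;1;1;0;0;1;0;1;0;1;0;1;1;1;1];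
  [:: 0;1;0;1;0;1;0;1;0;0;1;1;0;1;1;1;0;1;1;0;1;1;1;1;0;0;1;1;0;0;0;1];
  [:: 1;1;0;1;0;1;0;1;0;0;1;0;1;1;1;0;0;0;0;0;0;0;1;1;1;1;1;1;0;0;0;0];
  [:: 0;1;0;0;0;1;1;0;1;0;1;1;0;1;1;1;1;0;1;1;0;0;0;0;0;1;1;0;1;1;1;0];
  [:: 0;1;0;1;0;0;0;1;1;0;0;1;0;0;0;0;1;0;1;1;0;0;1;0;1;0;0;1;1;1;0;1];
  [:: 0;1;1;1;1;0;1;0;1;0;0;0;0;0;0;0;0;0;1;0;0;1;1;0;1;0;0;1;1;0;0;1];
  [:: 0;1;1;0;1;0;0;1;1;0;1;1;1;1;0;0;0;0;1;1;1;0;1;1;1;0;0;1;0;0;1;0];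
  [:: 0;0;0;0;0;0;0;1;0;1;0;1;0;1;1;1;0;1;1;0;0;1;0;1;1;1;0;0;1;1;0;0]].
Lemma c32_good : good (32 + 32) 32 6.
Proof. apply: (@base_good 32 6 2 (dec c32_r) (dec c32_i) (dec c32_n) 0). vm_compute. reflexivity. Qed.

Definition c34_r : seq (seq nat) := [:: [:: 0;0;0;0;0;1;0;0;0;0;0;0;0;1;1;0;0;0;0;0;0;0;0;0;0;0;0;0;1;0;1;0;1;0];
  [:: 0;1;0;0;0;1;0;1;0;1;1;0;0;0;0;1;0;1;0;1;1;0;0;1;1;0;1;0;0;1;1;0;1;0];
  [:: 0;0;1;1;0;0;1;0;0;1;1;1;1;0;1;0;0;0;1;0;0;1;1;1;0;0;1;0;0;0;0;1;0;1];
  [:: 0;0;1;1;0;0;0;1;1;0;1;0;0;1;0;0;0;0;1;0;0;1;0;0;1;0;0;1;1;0;1;0;0;1];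
  [:: 0;0;0;0;1;0;0;0;0;1;1;1;0;0;0;0;0;0;0;0;0;0;1;1;0;0;0;1;1;0;1;0;0;0];
  [:: 1;1;0;0;0;1;1;0;1;1;1;0;1;0;0;0;0;0;1;1;0;1;1;1;1;0;0;0;1;0;1;0;1;1];
  [:: 0;0;1;0;0;1;1;1;1;0;1;0;1;0;0;1;1;0;0;1;0;1;0;0;0;0;1;1;1;1;0;0;0;1];
  [:: 0;1;0;1;0;0;1;1;0;1;1;1;1;0;0;1;0;0;0;0;1;0;0;1;0;1;0;1;1;1;1;1;1;1];
  [:: 0;0;0;1;0;1;1;0;1;1;1;1;1;1;0;0;1;0;1;0;0;0;0;0;0;0;0;1;0;1;0;0;1;1];
  [:: 0;1;1;0;1;1;0;1;1;0;0;1;0;0;1;1;0;0;0;1;1;1;1;0;0;0;0;0;1;0;1;0;0;1];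
  [:: 0;1;1;1;1;1;1;1;1;0;0;0;1;1;0;1;1;1;0;1;0;0;0;0;1;0;1;0;0;1;1;0;0;0];
  [:: 0;0;1;0;1;0;0;1;1;1;0;0;1;0;0;0;1;0;1;1;1;0;0;0;1;0;1;1;1;1;1;0;1;0];
  [:: 0;0;1;0;0;1;1;1;1;0;1;1;0;0;0;0;1;1;0;0;0;0;0;0;1;1;0;1;0;0;1;0;0;1];
  [:: 1;0;0;1;0;0;0;0;1;0;1;0;0;0;1;1;1;0;0;0;1;1;0;0;0;0;1;0;0;1;1;1;0;0];
  [:: 1;0;1;0;0;0;0;0;0;1;0;0;0;1;1;0;1;0;1;0;1;0;0;1;1;0;0;0;0;0;0;1;0;0];
  [:: 0;1;0;0;0;0;1;1;0;1;1;0;0;1;0;0;0;0;0;0;1;0;1;0;1;0;0;0;0;0;1;0;0;1];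
  [:: 0;0;0;0;0;0;1;0;1;0;1;1;1;1;1;0;1;0;0;0;0;0;0;1;1;0;1;0;1;1;1;0;0;1];
  [:: 0;1;0;0;0;0;0;0;0;0;1;0;1;0;0;0;0;1;0;1;1;0;0;1;1;1;0;1;0;1;1;1;1;0];
  [:: 0;0;1;1;0;1;0;0;1;0;0;1;0;0;1;0;0;0;0;0;1;1;0;1;0;1;1;1;1;0;1;1;0;0];
  [:: 0;1;0;0;0;1;1;0;0;1;1;1;0;0;0;0;0;1;0;1;0;0;0;1;1;1;1;0;0;1;0;1;1;1];
  [:: 0;1;0;0;0;0;0;1;0;1;0;1;0;1;1;1;0;1;1;0;1;0;0;0;0;1;1;1;1;0;0;1;1;0];
  [:: 0;0;1;1;0;1;1;0;0;1;0;0;0;1;0;0;0;0;1;0;0;1;1;0;1;1;1;1;1;1;1;1;1;0];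
  [:: 0;0;1;0;1;1;0;0;0;1;0;0;0;0;0;1;0;0;0;0;0;1;0;0;1;1;0;1;0;0;0;1;0;0];
  [:: 0;1;1;0;1;1;0;1;0;0;0;0;0;0;1;0;1;1;1;1;0;0;0;1;0;1;0;0;1;1;0;1;0;0];
  [:: 0;1;0;1;0;1;0;0;0;0;1;1;1;0;1;1;1;1;0;1;0;1;1;0;1;0;1;0;1;1;0;0;1;1];
  [:: 0;0;0;0;0;0;0;1;0;0;0;0;1;0;0;0;0;1;1;1;1;1;1;1;0;1;0;1;0;0;1;1;1;0];
  [:: 0;1;1;0;0;0;1;0;0;0;1;1;0;1;0;0;1;0;1;1;1;1;0;0;1;0;1;1;1;0;1;1;0;0];
  [:: 0;0;0;1;1;0;1;1;1;0;0;1;1;0;0;0;0;1;1;0;1;1;1;0;0;1;1;0;0;0;1;1;1;0];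
  [:: 1;0;0;1;1;1;1;1;0;1;0;1;0;0;0;0;1;0;1;0;1;1;0;1;1;0;1;0;0;1;1;1;1;1];
  [:: 0;1;0;0;0;0;1;1;1;0;1;1;0;1;0;0;1;1;0;1;0;1;0;1;1;0;0;0;1;0;1;0;0;0];
  [:: 1;1;0;1;1;1;0;1;0;1;1;1;1;1;0;1;1;1;1;0;0;1;0;0;0;1;1;1;1;1;0;0;0;1];
  [:: 0;0;1;0;0;0;0;1;0;0;0;0;0;1;1;0;0;1;1;1;1;1;1;1;0;1;1;1;1;0;0;1;0;1];
  [:: 1;1;0;0;0;1;0;1;1;0;0;1;0;0;0;0;0;1;0;1;1;1;0;0;1;1;0;1;1;0;0;0;0;1];
  [:: 0;0;1;1;0;1;1;1;1;1;0;0;1;0;0;1;1;0;0;1;0;0;0;0;1;0;0;0;1;0;1;1;1;1]].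
Definition c34_i : seq (seq nat) := [:: [:: 1;1;0;0;0;0;0;0;1;0;0;0;1;1;1;0;0;0;0;1;1;1;1;0;0;1;0;0;1;1;0;0;0;0];
  [:: 1;0;1;1;1;1;0;1;1;0;1;0;1;0;0;0;0;1;1;1;1;0;0;0;0;0;1;1;0;1;1;0;0;0];
  [:: 0;1;0;0;0;0;1;1;1;0;1;0;1;1;1;1;0;0;1;0;1;0;1;0;0;1;0;0;0;1;0;0;0;1];
  [:: 0;1;0;1;0;0;1;0;1;1;1;1;0;0;1;1;0;1;0;1;0;0;1;0;1;0;1;0;1;0;1;1;1;1];
  [:: 0;1;0;0;0;0;1;1;1;0;1;1;0;1;0;1;1;0;1;0;1;0;1;0;1;0;0;1;1;0;0;1;0;0];
  [:: 0;1;0;0;0;1;1;0;0;1;0;1;0;1;1;0;1;0;1;1;1;0;0;1;0;1;0;0;1;0;0;1;0;1];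
  [:: 0;0;1;1;1;1;0;1;1;1;0;1;1;0;1;1;1;1;0;1;0;0;0;0;1;1;1;0;0;0;1;1;1;0];
  [:: 0;1;1;0;1;0;1;0;1;1;1;1;1;1;1;0;0;0;0;0;0;0;1;0;0;0;1;1;1;1;1;0;0;1];
  [:: 1;1;1;1;1;0;1;1;0;0;0;1;0;0;0;0;0;0;0;0;0;0;1;0;0;1;1;1;0;1;0;0;0;0];
  [:: 0;0;0;1;0;1;1;1;0;0;1;1;1;1;0;1;1;1;0;0;1;1;0;0;1;1;0;1;1;0;0;0;1;0];
  [:: 0;1;1;1;1;0;0;1;0;1;1;1;0;0;1;1;1;0;1;0;0;1;0;1;0;1;0;0;0;1;1;0;0;1];
  [:: 0;0;0;1;1;1;1;1;1;1;1;0;1;0;1;0;1;0;1;1;0;0;1;0;0;1;1;0;0;0;0;0;0;1];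
  [:: 1;1;1;0;0;0;1;1;0;1;0;1;1;0;0;0;1;1;0;1;0;0;1;0;0;0;1;0;1;1;0;0;1;1];
  [:: 1;0;1;0;1;1;0;1;0;1;0;0;0;0;1;1;1;0;1;1;0;1;1;1;0;0;0;1;0;0;1;1;1;0];
  [:: 1;0;1;1;0;1;1;1;0;0;1;1;0;1;1;0;1;0;0;0;0;0;1;0;1;0;1;0;0;0;1;1;0;1];
  [:: 0;0;1;1;1;0;1;0;0;1;1;0;0;1;0;0;1;0;0;1;1;0;0;0;1;1;1;1;1;0;1;0;1;0];
  [:: 0;0;0;0;1;1;1;0;0;1;1;1;1;1;1;1;0;1;0;0;0;0;1;1;0;0;0;0;1;0;1;0;1;0];
  [:: 0;1;0;1;0;0;1;0;0;1;0;0;1;0;0;0;1;0;1;0;0;1;1;1;1;1;0;1;0;0;0;1;0;1];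
  [:: 0;1;1;0;1;1;0;0;0;0;1;1;0;1;0;0;0;1;0;1;1;1;1;1;0;1;1;1;0;0;0;0;0;1];
  [:: 1;1;0;1;0;1;1;0;0;0;0;1;1;1;0;1;0;0;1;0;0;0;0;1;0;1;1;1;1;0;0;0;1;1];
  [:: 1;1;1;0;1;1;0;0;0;1;0;0;0;0;0;1;0;0;1;0;1;1;0;0;1;0;0;1;1;0;0;0;0;0];
  [:: 1;0;0;0;0;0;0;0;0;1;1;0;0;1;0;0;0;1;1;0;1;1;0;1;1;1;0;1;1;0;1;1;1;0];
  [:: 1;0;1;1;1;0;0;1;1;0;0;1;1;1;1;0;1;1;1;0;0;0;1;0;1;1;0;0;1;0;0;1;1;0];
  [:: 0;0;0;0;0;1;0;0;0;0;1;0;0;1;0;0;1;1;1;1;0;1;0;1;1;0;0;0;0;0;0;1;0;1];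
  [:: 0;0;0;1;1;0;1;0;0;1;0;0;0;0;1;1;0;1;0;0;1;1;1;1;1;1;1;1;1;1;0;1;0;1];
  [:: 1;0;1;0;0;1;1;0;1;1;1;1;0;0;0;1;0;1;1;1;0;1;1;0;1;1;1;0;1;0;1;1;1;0];
  [:: 0;1;0;1;0;0;1;1;1;0;0;1;1;0;1;1;0;0;1;1;0;0;0;0;1;1;1;0;1;0;0;1;0;0];
  [:: 0;1;0;0;1;0;0;1;1;1;0;0;0;1;0;1;0;1;1;1;1;1;0;0;1;0;0;0;0;1;0;1;1;0];
  [:: 1;0;0;1;1;1;0;1;0;1;0;0;1;0;0;1;1;0;0;1;1;1;1;0;1;1;1;0;1;0;0;1;0;1];
  [:: 1;1;1;0;0;0;0;1;1;0;1;0;1;0;0;0;0;0;0;0;0;0;0;0;1;0;0;1;0;0;0;1;0;0];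
  [:: 0;1;0;1;0;0;1;1;0;0;1;0;0;1;1;1;1;0;0;0;0;1;0;0;0;1;0;0;0;0;1;1;1;0];
  [:: 0;0;0;1;1;1;1;0;0;0;0;0;0;1;1;0;0;1;0;0;0;1;1;1;1;1;1;1;1;1;1;0;1;1];
  [:: 0;0;0;1;0;0;1;0;0;1;0;0;1;1;0;1;1;0;0;1;0;1;1;0;0;1;0;1;0;0;1;1;0;1];
  [:: 0;0;1;1;0;1;0;1;0;0;1;1;1;0;1;0;0;1;1;1;0;0;0;1;1;0;0;0;1;0;0;1;1;1]].
Definition c34_n : seq (seq nat) := [:: [:: 1;1;0;1;1;1;0;1;0;0;1;1;1;0;1;1;1;0;1;0;0;1;1;1;1;1;1;0;1;0;1;1;0;1];
  [:: 1;1;1;1;0;0;1;1;0;0;0;0;0;0;0;0;0;1;0;0;1;0;1;0;1;1;1;0;1;0;0;0;0;0];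
  [:: 0;1;1;1;1;1;1;0;0;1;1;0;1;1;1;1;0;0;0;1;1;0;1;1;0;0;1;1;0;1;1;1;0;1];
  [:: 1;1;1;1;1;1;0;0;1;1;1;1;0;1;1;1;0;1;0;1;1;0;1;0;1;1;0;0;0;0;0;0;0;0];
  [:: 1;0;1;1;1;0;1;0;1;0;0;1;0;0;0;1;1;0;1;0;0;1;0;1;1;0;0;1;1;1;1;0;1;0];
  [:: 1;0;1;1;0;0;0;0;0;0;1;0;0;1;0;0;0;0;1;1;0;0;0;1;0;0;1;0;0;0;0;1;0;0];
  [:: 0;1;1;0;1;0;1;1;1;0;0;0;0;0;0;1;0;1;0;0;0;1;1;0;0;0;1;0;1;1;0;1;1;1];
  [:: 1;1;0;0;0;0;1;1;0;0;1;0;0;0;1;0;1;0;0;1;0;0;0;0;0;0;0;0;0;1;1;0;1;1];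
  [:: 0;0;0;1;1;0;1;0;0;0;1;0;1;1;1;0;1;0;0;0;1;1;0;1;1;0;0;0;1;1;1;1;0;0];
  [:: 0;0;1;1;0;0;0;0;0;1;0;1;1;0;1;1;1;0;0;0;1;1;1;1;1;0;1;0;0;1;0;0;1;1];
  [:: 1;0;1;1;0;1;0;1;1;0;0;1;0;0;0;0;1;0;1;0;0;1;0;0;1;1;0;0;0;1;1;1;1;1];
  [:: 1;0;0;1;1;0;0;0;0;1;1;0;0;1;1;1;1;0;1;0;1;1;0;1;1;0;1;1;0;0;0;0;1;0];
  [:: 1;0;1;0;0;0;0;0;1;1;0;0;1;0;0;1;0;0;0;0;1;0;1;0;0;0;1;0;0;1;0;0;1;0];
  [:: 0;0;1;1;0;1;0;0;1;0;0;1;0;0;0;1;0;0;1;1;1;0;1;0;0;0;0;1;1;0;0;1;0;1];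
  [:: 1;0;1;1;0;0;0;1;1;1;0;1;0;0;0;0;0;1;1;1;1;1;0;1;1;0;1;0;0;1;1;0;0;1];
  [:: 1;0;1;1;1;0;1;0;0;1;0;1;1;1;0;1;0;1;1;0;1;1;1;0;1;1;1;1;0;0;0;1;0;0];
  [:: 1;0;0;0;1;0;0;1;1;1;1;1;0;0;0;0;1;1;1;1;0;1;1;0;0;1;1;1;0;1;1;0;0;1];
  [:: 0;1;0;1;0;0;1;0;0;0;0;0;0;0;1;1;1;1;0;1;0;1;0;1;1;1;1;1;1;0;1;1;1;1];
  [:: 1;0;0;0;1;1;0;0;0;0;1;1;0;1;1;1;1;0;0;0;0;1;0;0;0;0;0;1;1;0;0;1;1;1];
  [:: 0;0;1;1;0;1;0;1;0;0;0;0;0;1;1;0;1;1;0;0;1;0;0;0;0;0;1;0;0;0;0;0;1;1];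
  [:: 0;1;1;1;0;0;0;0;1;1;0;1;1;1;1;1;0;0;0;1;0;0;0;0;0;1;1;1;0;0;1;1;1;1];
  [:: 1;0;0;0;1;0;1;0;1;1;1;1;0;0;1;1;1;1;1;0;0;0;0;1;1;0;1;0;1;0;1;0;0;0];
  [:: 1;1;1;1;0;0;1;0;0;1;0;0;1;1;0;1;1;0;0;0;0;0;1;0;1;0;0;0;0;1;0;0;0;1];
  [:: 1;0;1;0;1;1;0;0;1;1;0;1;0;0;1;0;0;1;0;0;0;1;0;0;0;1;0;1;1;1;0;1;0;1];
  [:: 1;1;0;1;1;0;0;0;1;1;1;1;0;0;1;1;0;1;0;0;0;1;1;0;1;0;0;1;1;0;0;1;1;0];
  [:: 1;1;0;1;0;0;0;0;0;0;1;0;0;0;0;1;1;1;0;0;1;0;0;1;0;1;0;0;1;1;1;0;1;1];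
  [:: 1;1;1;0;0;1;1;0;0;1;0;1;1;0;1;1;1;1;0;1;1;1;0;0;0;0;1;0;1;1;1;1;1;0];
  [:: 0;0;1;0;1;0;0;0;0;0;0;1;0;1;0;1;1;1;1;0;1;0;0;1;1;0;0;1;1;1;0;1;0;0];
  [:: 1;1;0;0;1;0;1;0;1;0;0;0;0;1;0;0;0;1;1;0;0;1;0;1;1;1;1;1;0;0;0;1;0;0];
  [:: 0;0;1;0;1;0;1;1;1;1;1;0;1;0;1;0;1;0;0;0;0;0;1;1;0;1;1;1;0;0;1;0;0;0];
  [:: 1;0;1;0;1;0;0;1;1;0;1;0;0;0;1;0;1;1;0;0;1;1;0;0;0;1;1;0;0;1;1;0;1;0];
  [:: 1;0;1;0;0;1;1;0;1;0;1;0;0;1;0;1;0;1;1;0;1;0;0;1;1;0;1;1;1;0;0;1;0;0];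
  [:: 0;0;0;0;1;0;1;1;0;1;1;1;1;0;0;0;0;1;1;1;1;0;0;0;1;1;1;0;0;0;1;0;1;1];
  [:: 1;0;1;0;0;0;1;1;0;1;1;0;0;1;1;0;1;1;1;1;1;0;1;1;0;1;0;0;0;0;0;0;1;1]].
Lemma c34_good : good (34 + 34) 34 7.
Proof. apply: (@base_good 34 7 3 (dec c34_r) (dec c34_i) (dec c34_n) 0). vm_compute. reflexivity. Qed.

Definition c36_r : seq (seq nat) := [:: [:: 0;0;0;0;0;0;0;0;0;1;1;0;0;0;1;0;1;1;0;0;0;1;0;0;0;0;0;0;0;0;0;0;0;0;0;0];
  [:: 0;0;1;1;1;1;1;0;0;1;0;1;1;1;0;1;0;1;0;0;0;0;0;0;1;0;1;1;1;1;0;1;0;1;0;1];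
  [:: 0;1;0;1;1;1;1;0;1;0;0;0;0;1;1;0;0;0;0;1;0;0;0;0;1;1;1;1;1;1;0;1;0;1;0;1];
  [:: 0;1;1;0;1;1;0;0;0;0;1;0;1;1;0;1;1;0;0;1;0;1;1;1;0;0;0;1;0;0;1;1;0;1;0;1];
  [:: 0;1;1;1;1;1;0;0;1;0;1;1;0;1;0;0;0;1;0;0;0;1;0;1;1;0;0;0;0;0;0;1;1;0;1;0];
  [:: 0;1;1;1;1;0;1;1;0;1;0;1;1;1;1;1;0;0;1;0;0;0;0;0;1;0;1;1;1;1;0;0;0;1;0;0];
  [:: 0;1;1;0;0;1;0;0;1;0;1;0;1;1;0;0;0;0;1;1;0;1;1;1;1;0;1;1;0;1;0;1;1;0;0;1];
  [:: 0;0;0;0;0;1;0;0;1;0;0;1;1;1;1;1;1;1;1;1;1;1;0;1;1;0;1;1;0;1;1;1;1;0;1;0];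
  [:: 0;0;1;0;1;0;1;1;1;1;0;0;1;1;0;0;1;0;1;1;0;1;1;1;0;0;0;1;1;1;1;0;1;1;1;0];
  [:: 1;1;0;0;0;1;0;0;1;1;0;0;1;0;1;1;1;1;1;1;0;0;0;1;1;1;0;1;1;0;1;0;0;1;0;0];
  [:: 1;0;0;1;1;0;1;0;0;0;0;1;0;1;0;0;0;0;1;1;1;1;1;1;1;1;1;1;0;1;0;0;0;0;1;0];
  [:: 0;1;0;0;1;1;0;1;0;0;1;1;1;0;0;1;0;0;0;1;0;1;0;0;0;0;1;0;0;1;1;0;1;0;0;0];
  [:: 0;1;0;1;0;1;1;1;1;1;0;1;0;1;0;1;1;1;0;1;0;0;0;1;1;1;0;1;1;1;1;0;0;1;0;0];
  [:: 0;1;1;1;1;1;1;1;1;0;1;0;1;0;1;1;0;1;1;0;0;0;1;0;1;1;1;1;0;1;1;1;0;0;1;0];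
  [:: 1;0;1;0;0;1;0;1;0;1;0;0;0;1;1;1;1;0;0;0;1;1;0;1;1;0;1;1;1;0;0;1;0;1;0;0];
  [:: 0;1;0;1;0;1;0;1;0;1;0;1;1;1;1;1;0;0;1;1;1;0;0;0;0;1;0;0;1;0;0;1;0;0;1;1];
  [:: 1;0;0;1;0;0;0;1;1;1;0;0;1;0;1;0;1;1;1;1;1;0;1;1;0;0;1;0;0;1;1;0;1;0;0;0];
  [:: 1;1;0;0;1;0;0;1;0;1;0;0;1;1;0;0;1;0;1;1;1;0;1;0;1;1;1;0;1;0;1;1;1;0;0;1];
  [:: 0;0;0;0;0;1;1;1;1;1;1;0;0;1;0;1;1;1;1;0;0;0;1;1;1;1;1;1;0;0;0;1;0;1;0;0];
  [:: 0;0;1;1;0;0;1;1;1;1;1;1;1;0;0;1;1;1;0;0;1;0;0;0;0;0;0;1;0;1;0;1;0;1;1;0];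
  [:: 0;0;0;0;0;0;0;1;0;0;1;0;0;0;1;1;1;1;0;1;0;1;1;0;1;0;0;0;1;1;1;0;0;1;1;1];
  [:: 1;0;0;1;1;0;1;1;1;0;1;1;0;0;1;0;0;0;0;0;1;0;1;1;1;0;1;0;0;0;0;1;1;0;0;0];
  [:: 0;0;0;1;0;0;1;0;1;0;1;0;0;1;0;0;1;1;1;0;1;1;0;1;0;0;1;0;0;1;1;0;0;0;1;0];
  [:: 0;0;0;1;1;0;1;1;1;1;1;0;1;0;1;0;1;0;1;0;0;1;1;0;0;0;1;0;0;0;1;1;1;0;0;1];
  [:: 0;1;1;0;1;1;1;1;0;1;1;0;1;1;1;0;0;1;1;0;1;1;0;0;1;0;1;1;0;1;1;1;1;0;0;1];
  [:: 0;0;1;0;0;0;0;0;0;1;1;0;1;1;0;1;0;1;1;0;0;0;0;0;0;0;1;1;0;1;1;1;0;0;0;1];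
  [:: 0;1;1;0;0;1;1;1;0;0;1;1;0;1;1;0;1;1;1;0;0;1;1;1;1;1;1;0;0;0;0;1;1;1;1;1];
  [:: 0;1;1;1;0;1;1;1;1;1;1;0;1;1;1;0;0;0;1;1;0;0;0;0;1;1;0;0;0;0;1;0;0;0;0;1];
  [:: 0;1;1;0;0;1;0;0;1;1;0;0;1;0;1;1;0;1;0;0;1;0;0;0;0;0;0;0;0;0;1;1;0;0;0;1];
  [:: 0;1;1;0;0;1;1;1;1;0;1;1;1;1;0;0;1;0;0;1;1;0;1;0;1;1;0;0;0;1;0;0;0;1;0;0];
  [:: 0;0;0;1;0;0;0;1;1;1;0;1;1;1;0;0;1;1;0;0;1;0;1;1;1;1;0;1;1;0;1;0;0;1;1;0];
  [:: 0;1;1;1;1;0;1;1;0;0;0;0;0;1;1;1;0;1;1;1;0;1;0;1;1;1;1;0;1;0;0;1;1;0;1;1];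
  [:: 0;0;0;0;1;0;1;1;1;0;0;1;0;0;0;0;1;1;0;0;0;1;0;1;1;0;1;0;0;0;0;1;0;1;0;1];
  [:: 0;1;1;1;0;1;0;0;1;1;0;0;1;0;1;0;0;0;1;1;1;0;0;0;0;0;1;0;0;1;1;0;1;1;0;1];
  [:: 0;0;0;0;1;0;0;1;1;0;1;0;0;1;0;1;0;0;0;1;1;0;1;0;0;0;1;0;0;0;1;1;0;0;0;1];
  [:: 0;1;1;1;0;0;1;0;0;0;0;0;0;0;0;1;0;1;0;0;1;0;0;1;1;1;1;1;1;0;0;1;1;1;1;0]].
Definition c36_i : seq (seq nat) := [:: [:: 1;0;0;1;0;0;0;1;1;0;0;1;1;1;0;1;0;0;1;0;0;1;0;1;1;0;1;1;0;1;1;0;0;1;1;0];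
  [:: 0;1;0;1;1;0;1;0;0;0;0;0;0;1;1;0;1;0;0;0;1;0;0;0;1;1;0;0;0;0;0;0;0;1;1;1];
  [:: 0;0;1;1;1;0;1;1;1;0;1;0;1;0;1;0;0;0;1;0;0;0;0;0;1;1;0;0;1;0;1;1;1;0;0;0];
  [:: 1;1;1;1;0;0;1;0;1;0;0;0;1;1;0;0;1;1;1;1;1;0;0;0;1;0;0;1;1;0;1;0;0;0;1;1];
  [:: 0;1;1;0;0;1;1;0;0;0;1;1;0;1;0;1;0;1;1;1;1;0;1;1;1;0;0;0;1;0;0;1;0;1;1;1];
  [:: 0;0;0;0;1;0;1;0;1;1;1;0;1;1;0;1;1;1;0;1;0;0;1;0;0;0;0;0;1;1;1;0;1;1;0;0];
  [:: 0;1;1;1;1;1;0;1;0;1;1;0;0;1;1;1;0;0;0;1;1;1;1;1;0;0;1;1;0;0;1;1;0;1;0;1];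
  [:: 1;0;1;0;0;0;1;0;1;1;1;0;0;0;0;1;1;1;0;0;1;0;0;0;0;1;0;1;0;0;1;0;1;1;1;1];
  [:: 1;0;1;1;0;1;0;1;1;1;1;0;1;0;1;0;0;0;1;1;0;1;1;0;1;0;1;0;0;0;0;0;1;1;0;0];
  [:: 0;0;0;0;0;1;1;1;1;1;0;1;0;1;1;0;0;0;1;1;0;0;1;1;0;1;1;1;0;1;0;0;0;0;1;0];
  [:: 0;0;1;0;1;1;1;1;1;0;1;0;1;0;1;1;1;1;1;0;1;0;1;1;0;0;1;0;1;1;1;1;1;1;1;0];
  [:: 1;0;0;0;1;0;0;0;0;1;0;0;0;0;0;0;0;1;1;0;1;0;1;0;1;0;0;0;1;0;1;0;1;1;0;0];
  [:: 1;0;1;1;0;1;0;0;1;0;1;0;0;1;1;0;0;0;1;0;0;0;0;1;0;1;1;1;1;0;1;1;0;0;0;0];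
  [:: 1;1;0;1;1;1;1;0;0;1;0;0;1;0;0;1;1;0;1;1;1;0;1;1;1;1;1;0;0;1;1;0;1;1;1;1];
  [:: 0;1;1;0;0;0;1;0;1;1;1;0;1;0;1;0;0;0;1;1;1;1;0;0;1;1;1;1;0;0;0;1;0;0;1;0];
  [:: 1;0;0;0;1;1;1;1;0;0;1;0;0;1;0;1;0;0;1;1;0;1;1;0;0;0;1;0;0;1;1;1;0;0;0;0];
  [:: 0;1;0;1;0;1;0;1;0;0;1;0;0;1;0;0;1;0;1;0;0;0;1;0;1;1;0;1;0;0;0;1;0;1;1;1];
  [:: 0;0;0;1;1;1;0;1;0;0;1;1;0;0;0;0;0;0;1;1;0;1;0;1;0;0;1;0;1;0;0;1;0;1;0;0];
  [:: 1;0;1;1;1;0;0;0;1;1;1;1;1;1;1;1;1;1;1;1;1;1;1;1;0;1;0;1;0;1;1;1;1;0;0;0];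
  [:: 0;0;0;1;1;1;1;0;1;1;0;0;0;1;1;1;0;1;1;1;1;1;0;1;1;0;1;0;1;1;1;1;0;0;0;1];
  [:: 0;1;0;1;1;0;1;1;0;0;1;1;0;1;1;0;0;0;1;1;0;0;0;1;1;0;1;1;0;1;0;0;0;1;0;0];
  [:: 1;0;0;0;0;0;1;0;1;0;0;0;0;0;1;1;0;1;1;1;0;0;1;1;0;1;0;1;0;0;1;0;1;1;0;1];
  [:: 0;0;0;0;1;1;1;0;1;1;1;1;0;1;0;1;1;0;1;0;0;1;0;0;0;0;1;0;1;0;0;1;1;1;1;1];
  [:: 1;0;0;0;1;0;1;0;0;1;1;0;1;1;0;0;0;1;1;1;1;1;0;0;1;0;1;0;1;1;0;0;1;0;1;0];
  [:: 1;1;1;1;1;0;0;0;1;0;0;1;0;1;1;0;1;0;0;1;1;0;0;1;1;0;0;0;1;1;1;1;0;0;0;1];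
  [:: 0;1;1;0;0;0;0;1;0;1;0;0;1;1;1;0;1;0;1;0;0;1;0;0;0;1;1;1;1;1;1;0;1;0;1;0];
  [:: 1;0;0;0;0;0;1;0;1;1;1;0;1;1;1;1;0;1;0;1;1;0;1;1;0;1;0;0;1;1;1;0;0;0;1;0];
  [:: 1;0;0;1;0;0;1;1;0;1;0;0;1;0;1;0;1;0;1;0;1;1;0;0;0;1;0;0;1;1;1;1;1;1;0;0];
  [:: 0;0;1;1;1;1;0;0;0;0;1;1;1;0;0;0;0;1;0;1;0;0;1;1;1;1;1;1;1;1;1;1;1;0;1;1];
  [:: 1;0;0;0;0;1;0;0;0;1;1;0;0;1;0;1;0;0;1;1;1;0;0;1;1;1;1;1;1;1;0;0;0;1;1;0];
  [:: 1;0;1;1;0;1;1;1;0;0;1;1;1;1;0;1;0;0;1;1;0;1;0;0;1;1;1;1;1;0;1;0;0;1;0;1];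
  [:: 0;0;1;0;1;0;1;0;0;0;1;0;1;0;1;1;1;1;1;1;0;0;1;0;1;0;0;1;1;0;0;1;1;0;1;0];
  [:: 0;0;1;0;0;1;0;1;1;0;1;1;0;1;0;0;0;0;1;0;0;1;1;1;0;1;0;1;1;0;0;1;1;1;0;0];
  [:: 1;1;0;0;1;1;1;1;1;0;1;1;0;1;0;0;1;1;0;0;1;1;1;0;0;0;0;1;0;1;1;0;1;0;0;0];
  [:: 1;1;0;1;1;0;0;1;0;1;1;0;0;1;1;0;1;0;0;0;0;0;1;1;0;1;1;0;1;1;0;1;0;0;1;0];
  [:: 0;1;0;1;1;0;1;1;0;0;0;0;0;1;0;0;1;0;0;1;0;1;1;0;1;0;0;0;1;0;1;0;0;0;0;0]].
Definition c36_n : seq (seq nat) := [:: [:: 0;1;0;1;0;0;0;1;0;1;1;0;1;1;1;0;1;1;0;0;1;0;1;0;1;0;0;0;0;1;1;1;0;1;1;0];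
  [:: 1;1;0;0;0;0;1;0;0;1;0;0;0;1;1;1;0;0;0;0;0;1;0;0;1;0;0;1;1;1;1;0;1;0;1;0];
  [:: 0;0;0;1;0;1;0;1;0;0;0;0;1;0;0;0;1;1;1;0;0;0;1;1;1;1;0;1;1;1;1;0;1;1;0;1];
  [:: 1;0;1;0;0;0;0;1;1;0;0;0;1;1;0;0;1;1;0;0;1;1;0;1;1;1;0;0;1;1;0;1;0;1;0;1];
  [:: 0;0;0;0;0;0;1;1;0;0;1;0;0;0;1;0;1;0;0;0;1;1;1;1;1;1;0;1;0;1;0;1;0;0;0;1];
  [:: 0;0;1;0;0;1;1;1;1;0;0;1;1;1;1;0;0;1;0;0;1;0;1;0;0;1;0;0;1;1;0;1;0;1;1;1];
  [:: 0;1;0;0;1;1;0;0;0;1;0;1;1;1;1;0;0;1;1;0;1;1;1;0;0;1;0;1;1;1;1;1;1;0;0;0];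
  [:: 1;0;1;1;1;1;0;1;1;1;1;1;1;0;0;1;0;0;1;1;1;1;0;1;0;0;1;0;0;0;1;1;0;1;1;1];
  [:: 0;0;0;1;0;1;0;1;0;1;0;0;1;0;1;0;1;1;1;1;0;0;1;1;1;1;1;1;1;1;0;1;0;0;0;1];
  [:: 1;1;0;0;0;0;1;1;1;1;1;1;0;0;0;1;1;0;0;0;1;0;0;1;0;0;0;1;1;0;1;1;1;0;1;0];
  [:: 1;0;0;0;1;0;0;1;0;1;1;0;1;1;1;0;1;1;1;1;0;0;1;0;0;1;0;0;1;0;1;0;0;0;1;0];
  [:: 0;0;0;0;0;1;1;1;0;1;0;0;1;0;1;0;0;0;0;1;0;0;1;1;0;0;1;1;0;0;0;0;0;0;0;0];
  [:: 1;0;1;1;0;1;1;1;1;0;1;1;1;1;0;1;0;0;0;1;0;0;1;1;0;1;1;0;1;1;1;1;1;0;0;0];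
  [:: 1;1;0;1;0;1;1;0;0;0;1;0;1;1;1;1;0;1;1;1;0;0;0;1;0;1;0;0;1;0;0;0;0;0;1;1];
  [:: 1;1;0;0;1;1;1;0;1;0;1;1;0;1;0;1;0;1;0;1;0;1;0;1;1;1;0;0;0;0;0;0;1;0;1;1];
  [:: 0;1;0;0;0;0;0;1;0;1;0;0;1;1;1;1;0;0;1;0;0;0;0;1;0;0;1;0;0;1;0;0;0;0;1;1];
  [:: 1;0;1;1;1;0;0;0;1;1;1;0;0;0;0;0;0;0;1;1;1;1;0;0;1;1;0;0;1;0;0;0;0;1;0;1];
  [:: 1;0;1;1;0;1;1;0;1;0;1;0;0;1;1;0;0;1;1;1;0;0;0;0;0;0;0;0;0;0;0;1;1;1;1;0];
  [:: 0;0;1;0;0;0;1;1;1;0;1;0;0;1;0;1;1;1;0;1;1;1;0;0;0;0;0;1;0;1;1;1;1;1;0;1];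
  [:: 0;0;0;0;0;0;0;1;1;0;1;1;1;1;1;0;1;1;1;0;0;0;0;1;1;1;1;0;0;1;0;1;1;1;1;1];
  [:: 1;0;0;1;1;1;1;1;0;1;0;0;0;0;0;0;1;0;1;0;1;1;1;1;1;1;0;0;0;0;1;1;1;0;1;1];
  [:: 0;1;0;1;1;0;1;1;0;0;0;0;0;0;1;0;1;0;1;0;1;0;0;0;1;1;0;1;1;1;1;1;1;1;1;0];
  [:: 1;0;1;0;1;1;1;0;1;0;1;1;1;0;0;0;0;0;0;0;1;0;0;0;1;1;0;1;1;1;0;1;1;0;0;1];
  [:: 0;0;1;1;1;0;0;1;1;1;0;1;1;1;1;1;0;0;0;1;1;0;0;1;1;1;0;1;0;0;1;1;0;0;0;1];
  [:: 1;1;1;1;1;0;0;0;1;0;0;0;0;0;1;0;1;0;0;1;1;1;1;1;1;1;1;0;1;1;1;0;1;1;0;1];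
  [:: 0;0;1;1;1;1;1;0;1;0;1;0;1;1;1;0;1;0;0;1;1;1;1;1;1;0;1;1;1;0;0;1;1;0;1;0];
  [:: 0;0;0;0;0;0;0;1;1;0;0;1;1;0;0;1;0;0;0;1;0;0;0;0;1;1;1;1;0;0;0;0;1;1;0;1];
  [:: 0;1;1;0;1;0;1;0;1;1;0;1;0;0;0;0;0;0;1;0;0;1;1;1;0;1;1;1;0;0;1;1;1;1;0;0];
  [:: 0;1;1;1;0;1;1;0;1;1;1;0;1;1;0;0;1;0;0;0;0;1;1;0;1;1;0;0;1;0;0;0;1;0;0;0];
  [:: 1;1;1;1;1;1;1;0;1;0;0;0;1;0;0;1;0;0;1;1;0;1;1;0;1;0;0;0;0;0;1;0;0;0;1;1];
  [:: 1;1;1;0;0;0;1;1;0;1;1;0;1;0;0;0;0;0;1;0;1;1;0;1;1;0;0;1;0;1;1;1;1;0;0;1];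
  [:: 1;0;0;1;1;1;1;1;1;1;0;0;1;0;0;0;0;1;1;1;1;1;1;1;0;1;0;1;0;0;1;1;1;1;0;0];
  [:: 0;1;1;0;0;0;1;0;0;1;0;0;1;0;1;0;0;1;1;1;1;1;1;0;1;1;1;1;1;0;1;1;0;1;0;0];
  [:: 1;0;1;1;0;1;0;1;0;0;0;0;0;0;0;0;1;1;1;1;0;1;0;0;1;0;1;1;0;0;0;1;1;0;0;0];
  [:: 1;1;0;0;0;1;0;1;0;1;1;0;0;1;1;1;0;1;0;1;1;1;0;0;0;1;0;0;0;1;0;0;0;0;0;1];
  [:: 0;0;1;1;1;1;0;1;1;0;0;0;0;1;1;1;1;0;1;1;1;0;1;1;1;0;1;0;0;1;1;0;0;0;1;1]].
Lemma c36_good : good (36 + 36) 36 7.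
Proof. apply: (@base_good 36 7 3 (dec c36_r) (dec c36_i) (dec c36_n) 0). vm_compute. reflexivity. Qed.

Definition c38_r : seq (seq nat) := [:: [:: 0;0;0;0;0;1;0;0;0;0;1;0;0;0;0;0;0;0;0;0;0;0;0;0;0;1;0;1;0;0;0;1;0;0;0;1;0;0];
  [:: 0;0;0;1;0;1;1;1;0;0;1;1;0;1;0;1;0;1;0;0;1;1;1;0;0;1;0;0;1;1;1;1;1;0;0;1;0;0];
  [:: 0;0;0;1;0;0;0;1;1;1;1;0;0;0;0;1;0;1;0;0;0;0;0;1;0;1;0;1;0;1;0;0;1;1;1;1;0;0];
  [:: 0;1;1;1;1;1;1;1;1;0;1;1;1;0;0;1;1;0;1;1;0;0;0;1;1;1;1;1;0;0;0;1;1;1;0;0;1;1];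
  [:: 0;0;0;1;1;0;0;1;1;0;0;0;1;0;0;0;0;0;0;1;0;0;1;1;0;1;1;0;1;1;1;1;0;0;1;0;1;0];
  [:: 1;1;0;1;0;1;0;1;0;1;0;1;1;1;0;0;0;1;0;1;1;1;0;1;1;0;1;0;0;0;1;0;1;1;0;0;0;1];
  [:: 0;1;0;1;0;0;0;1;1;1;0;0;0;0;1;0;0;0;1;1;1;1;1;1;1;1;1;0;0;0;1;0;0;1;0;1;0;0];
  [:: 0;1;1;1;1;1;1;1;0;1;0;1;1;1;1;1;0;1;0;1;0;1;1;1;1;0;1;0;1;1;1;0;0;0;0;1;1;0];
  [:: 0;0;1;1;1;0;1;0;0;0;1;0;0;0;1;1;1;1;0;1;1;1;1;0;1;1;0;1;0;1;1;0;1;0;0;0;1;1];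
  [:: 0;0;1;0;0;1;1;1;0;0;1;1;1;1;1;1;0;1;0;1;1;1;1;0;1;1;1;0;1;0;1;1;0;0;1;1;1;0];
  [:: 1;1;1;1;0;0;0;0;1;1;1;0;1;1;1;0;0;0;1;1;0;0;1;0;0;0;0;0;1;1;0;1;0;1;0;0;1;1];
  [:: 0;1;0;1;0;1;0;1;0;1;0;1;0;1;1;1;1;1;1;1;0;0;1;1;1;0;1;0;0;1;1;1;1;1;1;1;0;1];
  [:: 0;0;0;1;1;1;0;1;0;1;1;0;1;0;1;1;0;1;1;0;1;0;0;0;0;1;0;0;0;0;0;1;0;1;1;1;0;0];
  [:: 0;1;0;0;0;1;0;1;0;1;1;1;0;1;0;0;0;1;0;1;1;0;0;0;1;0;0;1;1;0;1;1;1;0;1;1;0;0];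
  [:: 0;0;0;0;0;0;1;1;1;1;1;1;1;0;1;0;1;1;0;0;0;0;1;0;0;1;0;0;0;0;0;1;0;1;1;1;1;1];
  [:: 0;1;1;1;0;0;0;1;1;1;0;1;1;0;0;0;0;1;1;0;1;1;1;1;1;0;0;0;0;0;0;1;1;1;1;0;0;1];
  [:: 0;0;0;1;0;0;0;0;1;0;0;1;0;0;1;0;1;0;1;1;1;0;1;1;1;1;1;1;0;0;1;0;1;1;1;0;1;0];
  [:: 0;1;1;0;0;1;0;1;1;1;0;1;1;1;1;1;0;1;1;0;0;0;1;1;0;0;0;1;1;1;1;0;1;0;1;0;1;0];
  [:: 0;0;0;1;0;0;1;0;0;0;1;1;1;0;0;1;1;1;1;1;1;1;1;1;1;1;1;0;0;1;1;0;0;0;1;0;0;1];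
  [:: 0;0;0;1;1;1;1;1;1;1;1;1;0;1;0;0;1;0;1;0;0;0;0;1;1;1;0;1;1;1;0;0;0;1;1;1;1;0];
  [:: 0;1;0;0;0;1;1;0;1;1;0;0;1;1;0;1;1;0;1;0;1;1;0;0;0;0;0;0;0;1;0;1;1;0;1;1;1;1];
  [:: 0;1;0;0;0;1;1;1;1;1;0;0;0;0;0;1;0;0;1;0;1;1;0;1;0;1;1;0;0;1;1;0;0;0;0;1;0;0];
  [:: 0;1;0;0;1;0;1;1;1;1;1;1;0;0;1;1;1;1;1;0;0;0;1;1;1;1;0;0;0;1;1;0;0;1;1;1;0;1];
  [:: 0;0;1;1;1;1;1;1;0;0;0;1;0;0;0;1;1;1;1;1;0;1;1;1;1;0;0;1;1;0;1;0;1;0;0;0;1;1];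
  [:: 0;0;0;1;0;1;1;1;1;1;0;1;0;1;0;1;1;0;1;1;0;0;1;1;0;1;1;1;0;1;1;1;0;1;1;0;0;1];
  [:: 1;1;1;1;1;0;1;0;1;1;0;0;1;0;1;0;1;0;1;1;0;1;1;0;1;0;1;0;1;1;1;1;0;1;1;1;0;0];
  [:: 0;0;0;1;1;1;1;1;0;1;0;1;0;0;0;0;1;0;1;0;0;1;0;0;1;1;0;1;0;0;1;0;1;0;0;1;0;0];
  [:: 1;0;1;1;0;0;0;0;1;0;0;0;0;1;0;0;1;1;0;1;0;0;0;1;1;0;1;0;1;1;0;0;0;0;0;1;1;1];
  [:: 0;1;0;0;1;0;0;1;0;1;1;0;0;1;0;0;0;1;0;1;0;0;0;1;0;1;0;1;0;0;0;0;0;0;0;1;0;1];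
  [:: 0;1;1;0;1;0;0;1;1;0;1;1;0;0;0;0;0;1;1;1;1;1;1;0;1;1;0;1;0;0;1;0;0;1;1;0;0;1];
  [:: 0;1;0;0;1;1;1;1;1;1;0;1;0;1;0;0;1;1;1;0;0;1;1;1;1;1;1;0;0;1;0;0;1;0;0;1;1;0];
  [:: 1;1;0;1;1;0;0;0;0;1;1;1;1;1;1;1;0;0;0;0;1;0;0;0;1;1;0;0;0;0;0;1;0;1;0;1;1;1];
  [:: 0;1;1;1;0;1;0;0;1;0;0;1;0;1;0;1;1;1;0;0;1;0;0;1;0;0;1;0;0;0;1;0;0;1;0;1;0;0];
  [:: 0;0;1;1;0;1;1;0;0;0;1;1;1;0;1;1;1;0;0;1;0;0;1;0;1;1;0;0;0;1;0;1;1;0;0;0;1;0];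
  [:: 0;0;1;0;1;0;0;0;0;1;0;1;1;1;1;1;1;1;1;1;1;0;1;0;1;1;0;0;0;1;0;0;0;0;1;1;0;1];
  [:: 1;1;1;0;0;0;1;1;0;1;0;1;1;1;1;0;0;0;0;1;1;1;1;0;0;1;1;1;1;0;1;1;1;0;1;1;1;1];
  [:: 0;0;0;1;1;0;0;1;1;1;1;0;0;0;1;0;1;1;0;1;1;0;0;1;0;0;0;1;0;0;1;1;0;1;0;1;1;0];
  [:: 0;0;0;1;0;1;0;0;1;0;1;1;0;0;1;1;0;0;1;0;1;0;1;1;1;0;0;1;1;1;0;1;0;0;1;1;0;0]].
Definition c38_i : seq (seq nat) := [:: [:: 0;0;0;1;1;0;0;0;0;0;0;1;1;1;1;0;1;0;0;0;0;1;1;1;1;1;1;0;1;1;0;1;0;1;0;1;0;1];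
  [:: 0;0;0;0;1;0;1;0;0;1;0;0;0;0;1;0;1;0;1;1;1;0;1;0;0;0;1;0;1;0;1;0;0;0;1;0;1;1];
  [:: 0;0;1;1;1;1;0;0;0;0;0;1;0;0;1;0;0;0;1;1;0;0;1;0;1;0;1;0;0;0;0;0;1;0;0;1;1;1];
  [:: 1;0;1;1;1;0;0;1;0;1;1;1;0;0;0;1;0;1;0;0;0;1;1;1;0;0;1;0;0;0;1;0;0;1;1;1;0;1];
  [:: 1;1;1;1;0;0;1;0;0;1;1;1;1;0;1;0;0;1;0;0;1;1;1;0;1;0;1;1;0;0;1;1;1;1;0;1;1;0];
  [:: 0;0;1;0;0;0;0;1;1;1;0;0;1;0;1;0;0;0;0;1;0;0;0;0;1;0;1;0;0;0;0;0;1;1;1;0;0;1];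
  [:: 0;1;0;0;1;0;1;1;0;0;1;1;1;1;1;0;1;0;1;1;0;0;0;1;0;0;1;0;1;1;1;1;1;1;0;0;0;1];
  [:: 0;0;0;1;0;1;1;0;1;0;0;0;1;1;0;0;0;1;1;0;0;0;0;1;1;1;1;0;0;0;1;0;1;0;0;0;1;0];
  [:: 0;0;0;0;0;1;0;1;0;0;1;0;0;1;1;1;1;0;1;1;1;1;0;0;1;0;0;0;1;0;0;0;0;1;0;0;1;0];
  [:: 0;1;0;1;1;1;0;0;0;1;0;1;1;0;1;0;0;1;0;0;0;1;1;1;0;1;0;1;1;0;1;0;0;0;1;1;1;0];
  [:: 0;0;0;1;1;0;1;0;1;0;1;1;0;1;0;1;0;0;1;0;0;0;0;1;0;0;1;0;1;1;1;1;0;0;0;0;1;0];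
  [:: 1;0;1;1;1;0;1;0;0;1;1;1;1;1;1;0;1;1;0;0;1;0;0;1;0;1;0;0;0;0;0;1;0;1;0;1;0;0];
  [:: 1;0;0;0;1;1;1;1;0;1;0;1;0;1;0;0;1;0;0;1;0;0;1;0;0;0;1;1;1;0;0;1;1;0;1;1;0;1];
  [:: 1;0;0;0;0;0;1;1;1;0;1;1;1;1;0;0;0;1;1;0;1;1;0;0;1;1;0;0;1;1;0;0;1;1;0;0;0;1];
  [:: 1;1;1;0;1;1;1;0;1;1;0;1;0;0;1;1;1;0;0;0;1;1;0;0;0;0;1;0;0;0;1;1;0;0;1;0;0;1];
  [:: 0;0;0;1;0;0;0;0;1;0;1;0;0;0;1;1;1;0;1;0;0;1;0;0;1;0;1;1;1;0;0;1;1;0;1;1;0;1];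
  [:: 1;1;0;0;0;0;1;0;1;0;0;1;1;0;1;1;1;1;1;0;1;1;0;1;0;1;0;0;1;1;0;1;0;0;0;0;1;0];
  [:: 0;0;0;1;1;0;0;1;0;1;0;1;0;1;0;0;1;1;1;1;0;1;0;0;1;0;0;1;0;1;1;1;1;0;1;0;0;1];
  [:: 0;1;1;0;0;0;1;1;1;0;1;0;0;1;0;1;1;1;1;1;0;1;1;0;0;0;0;0;0;1;1;0;1;1;1;1;1;1];
  [:: 0;1;1;0;0;1;1;0;1;0;0;0;1;0;0;0;0;1;1;0;0;1;0;1;1;0;1;0;0;1;0;0;0;0;1;1;0;0];
  [:: 0;1;0;0;1;0;0;0;1;0;0;1;0;1;1;0;1;0;0;0;0;1;1;1;1;1;0;0;0;0;1;1;1;1;1;0;0;1];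
  [:: 1;0;0;1;1;0;0;0;1;1;0;0;0;1;1;1;1;1;1;1;1;0;1;0;0;1;1;0;0;0;0;1;0;0;0;0;0;0];
  [:: 1;1;1;1;1;0;0;0;0;1;0;0;1;0;0;0;0;0;1;0;1;1;0;0;1;1;0;1;0;1;0;1;1;1;0;1;0;0];
  [:: 1;0;0;1;0;0;1;1;0;1;1;1;0;0;0;0;1;0;0;1;1;0;0;0;0;1;1;0;1;1;1;0;0;0;0;0;0;1];
  [:: 1;0;1;0;1;1;0;1;1;0;0;0;0;1;0;1;0;1;0;1;1;0;1;0;0;0;1;0;1;0;0;1;1;0;1;0;1;1];
  [:: 1;0;0;0;0;0;0;1;0;1;0;1;0;1;0;0;1;0;0;0;1;1;1;1;0;1;0;0;1;0;1;0;0;1;0;1;0;0];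
  [:: 1;1;1;1;1;1;1;1;0;0;1;0;1;0;1;1;0;0;0;1;0;1;0;1;1;0;0;0;0;1;0;0;0;0;0;0;1;0];
  [:: 0;0;0;0;1;0;0;0;0;1;0;0;1;0;0;1;0;1;0;0;0;0;1;0;0;0;0;1;0;0;1;0;1;0;0;1;0;1];
  [:: 1;1;0;0;0;0;1;0;1;1;1;0;1;1;0;1;1;0;0;0;0;0;0;1;1;1;0;0;1;0;0;1;0;1;0;1;0;0];
  [:: 1;0;0;0;0;0;1;0;0;0;1;0;0;1;0;0;1;1;1;1;0;0;1;1;0;0;1;0;0;1;1;1;0;0;0;0;1;1];
  [:: 0;1;0;1;1;0;1;1;0;1;1;0;0;0;1;0;0;1;1;0;1;0;0;1;0;1;0;1;0;1;0;0;1;0;1;1;1;0];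
  [:: 1;0;0;0;1;0;1;0;0;0;1;1;1;0;1;1;1;1;0;0;1;1;1;0;1;0;0;0;1;1;0;0;1;0;0;1;1;0];
  [:: 0;0;1;0;1;1;1;1;0;0;0;0;1;1;0;1;0;1;1;0;1;0;1;0;1;0;0;1;0;0;1;1;1;1;1;1;1;0];
  [:: 1;0;0;1;1;1;1;0;1;0;0;1;0;1;0;0;0;0;1;0;1;0;1;0;0;1;0;0;1;0;0;0;1;0;0;0;0;1];
  [:: 0;1;0;1;0;1;0;0;0;1;0;0;1;0;1;1;0;1;1;1;1;0;0;0;1;0;0;0;0;0;1;0;1;0;0;1;0;1];
  [:: 1;0;1;1;1;0;0;0;0;1;0;1;1;0;0;1;0;0;1;1;0;0;1;0;0;1;0;1;1;0;1;1;1;0;1;1;0;0];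
  [:: 0;1;1;0;1;0;0;1;1;1;1;0;0;0;0;0;1;0;1;0;0;0;0;0;1;0;1;0;0;1;1;1;1;0;0;0;1;1];
  [:: 1;1;1;1;0;1;1;0;0;0;0;0;1;1;1;1;0;1;1;0;1;0;0;1;1;0;0;1;0;1;0;0;0;1;1;0;1;1]].
Definition c38_n : seq (seq nat) := [:: [:: 0;0;1;1;1;0;1;0;1;1;1;1;0;0;0;1;1;0;0;0;0;0;1;1;1;1;1;0;1;1;1;0;1;1;0;1;1;1];
  [:: 0;0;1;1;1;1;1;0;1;0;0;0;0;0;1;0;0;1;0;1;0;1;1;1;1;0;0;0;0;1;0;0;1;0;0;1;0;1];
  [:: 1;1;0;1;0;1;1;1;0;1;1;1;0;0;0;1;0;1;1;1;0;0;1;0;1;0;0;1;0;1;0;0;1;1;1;0;0;1];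
  [:: 1;1;1;1;0;1;0;0;0;0;0;0;0;1;0;0;1;0;1;0;1;1;0;0;1;0;0;1;1;0;1;0;1;0;1;1;0;1];
  [:: 1;1;0;0;1;0;0;0;0;0;0;0;1;0;0;0;0;0;0;0;0;0;1;0;1;0;0;0;1;1;1;0;0;1;1;1;1;0];
  [:: 0;1;1;1;0;0;1;1;1;1;1;1;0;1;0;0;0;1;1;1;0;0;0;1;1;0;1;1;0;1;1;0;0;0;0;0;0;1];
  [:: 1;1;1;0;0;1;0;1;0;0;0;0;0;0;0;0;0;0;1;1;1;0;1;1;1;0;0;0;0;0;1;1;0;1;1;1;1;1];
  [:: 0;0;1;0;0;1;1;1;1;0;0;0;0;0;0;0;1;1;1;0;1;1;1;0;0;0;0;1;1;0;1;1;1;1;0;1;0;1];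
  [:: 1;1;0;0;0;1;0;1;0;0;0;0;0;0;1;0;1;0;1;0;0;1;0;0;1;0;1;1;1;0;1;1;1;0;1;0;0;0];
  [:: 1;0;1;0;0;1;0;0;0;0;1;1;0;0;0;0;1;1;1;0;0;0;0;0;0;0;0;1;1;1;0;1;0;0;0;1;1;1];
  [:: 1;0;1;0;0;1;0;0;0;1;1;1;1;0;0;1;0;0;0;0;0;1;0;1;0;1;0;0;1;1;1;1;1;0;1;1;0;0];
  [:: 1;0;1;0;0;1;0;0;0;1;1;0;0;1;0;1;1;0;0;0;1;1;1;0;0;1;0;0;1;1;1;1;1;1;1;1;1;0];
  [:: 0;0;0;0;1;0;0;0;0;0;1;0;1;1;1;1;1;1;0;1;1;0;1;0;1;0;0;1;1;0;1;1;0;1;0;1;0;0];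
  [:: 0;0;0;1;0;1;0;0;0;0;0;1;1;0;1;0;1;1;0;1;1;1;0;1;0;1;1;1;0;1;1;0;0;0;1;1;1;0];
  [:: 0;1;0;0;0;0;0;0;1;0;0;0;1;1;0;0;0;1;0;0;0;0;0;1;0;0;1;0;0;1;0;1;0;1;0;1;0;1];
  [:: 1;0;1;0;0;0;0;0;0;0;1;1;1;0;0;1;0;0;0;0;1;1;0;1;0;1;0;1;1;1;1;0;1;1;1;0;1;1];
  [:: 1;0;0;1;0;0;0;1;1;1;0;1;1;1;0;0;0;1;0;0;1;1;1;0;0;0;1;1;1;1;1;1;1;0;1;1;1;1];
  [:: 0;1;1;0;0;1;0;1;0;1;0;0;1;1;1;0;1;1;1;1;0;0;1;1;1;1;1;1;1;0;0;1;1;1;1;0;0;0];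
  [:: 0;0;1;1;0;1;1;1;1;1;0;0;0;0;0;0;0;1;0;1;1;1;0;0;1;0;1;0;0;0;1;1;1;1;0;0;1;0];
  [:: 0;1;1;0;0;1;1;0;0;0;0;0;1;1;0;0;0;1;1;1;0;0;0;0;1;1;1;0;0;1;0;1;1;0;0;1;0;0];
  [:: 0;0;0;1;0;0;1;1;0;0;0;1;1;1;0;1;1;0;1;0;1;0;1;1;0;1;0;0;0;1;0;1;1;0;1;0;1;0];
  [:: 0;1;0;1;0;0;0;1;1;0;1;1;0;1;0;1;1;0;1;0;0;1;1;1;0;0;0;0;0;1;1;0;0;0;0;1;1;0];
  [:: 1;1;1;0;1;0;1;1;0;0;0;1;1;0;0;0;1;1;0;0;1;1;1;0;1;0;0;0;1;0;1;0;1;1;0;1;1;0];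
  [:: 1;1;0;0;0;1;1;0;0;0;1;0;0;1;1;1;0;1;0;0;1;1;0;1;1;1;0;1;0;0;0;0;1;1;1;1;1;0];
  [:: 1;1;1;1;1;1;1;0;1;0;0;0;1;0;0;0;0;1;1;1;0;0;1;1;1;1;1;1;0;0;0;0;1;1;1;0;1;1];
  [:: 1;0;0;0;0;0;0;0;0;0;1;1;0;1;0;1;0;1;0;1;1;0;0;1;1;1;1;0;0;0;1;1;1;1;1;0;1;0];
  [:: 1;0;0;0;0;1;0;0;1;0;0;0;0;1;1;0;1;1;1;1;0;0;0;0;1;1;0;1;1;0;0;0;1;0;1;0;1;0];
  [:: 0;0;1;1;0;1;0;1;1;1;0;0;1;1;0;1;1;1;0;0;0;0;0;1;1;0;1;0;0;1;1;0;1;1;0;1;0;0];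
  [:: 1;0;0;1;1;0;0;1;1;1;1;1;1;0;0;1;1;1;0;0;0;0;1;0;0;0;1;0;1;1;0;0;1;0;1;0;1;1];
  [:: 1;1;1;0;1;1;0;0;0;1;1;1;0;1;1;1;1;0;0;1;1;1;0;0;0;0;0;1;1;0;1;0;0;1;0;0;1;0];
  [:: 1;0;0;1;1;1;1;1;1;0;1;1;1;1;0;1;1;0;1;0;0;1;1;0;0;1;0;1;0;1;0;1;1;0;1;0;1;0];
  [:: 0;0;0;0;0;0;1;1;1;1;1;1;1;0;1;0;1;1;1;1;1;0;0;0;0;1;0;0;0;0;1;0;0;0;0;0;0;0];
  [:: 1;1;1;1;0;0;0;1;1;0;1;1;0;0;0;1;1;1;1;1;1;0;1;1;1;1;1;1;1;0;1;0;0;1;1;0;1;1];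
  [:: 1;0;1;0;1;0;1;1;0;0;0;1;1;0;1;1;0;1;1;0;0;0;1;1;1;1;0;1;0;1;0;0;1;1;1;1;1;1];
  [:: 0;0;1;1;1;0;1;0;1;0;1;1;0;1;0;1;1;1;0;0;1;0;0;1;1;1;1;0;1;0;1;0;1;1;0;0;1;1];
  [:: 1;1;0;1;1;0;1;1;0;1;1;1;1;1;1;0;1;0;0;1;0;1;1;1;0;0;0;1;0;0;0;0;0;1;0;1;0;0];
  [:: 1;0;0;0;1;0;1;0;0;1;0;1;0;1;0;1;1;0;1;0;1;1;1;1;1;1;1;0;1;1;1;0;1;1;1;0;0;0];
  [:: 1;1;1;1;0;1;1;1;0;1;0;0;0;0;1;1;1;0;0;0;0;0;0;0;1;0;0;0;1;0;0;0;1;1;1;0;0;0]].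
Lemma c38_good : good (38 + 38) 38 7.
Proof. apply: (@base_good 38 7 3 (dec c38_r) (dec c38_i) (dec c38_n) 0). vm_compute. reflexivity. Qed.

Definition c22_r : seq (seq nat) := [:: [:: 0;0;0;0;0;0;0;0;0;1;1;0;0;1;0;0;0;0;0;0;1;0];
  [:: 0;1;1;0;1;0;0;1;1;1;1;0;0;1;0;1;0;0;1;0;0;1];
  [:: 0;1;1;0;1;0;0;1;1;0;0;1;0;1;0;1;0;1;0;1;1;0];
  [:: 0;0;0;0;0;1;1;1;1;1;0;0;0;1;1;1;0;1;1;0;1;1];
  [:: 0;1;1;0;1;0;1;0;1;1;0;0;0;1;0;0;1;0;1;1;0;1];
  [:: 0;0;0;1;0;1;0;1;0;0;1;1;0;1;0;1;1;1;0;1;1;1];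
  [:: 0;0;0;1;1;0;1;0;1;0;0;1;1;0;0;0;1;0;0;1;0;1];
  [:: 0;1;1;1;0;1;0;0;0;0;1;0;0;0;0;0;1;1;0;0;0;0];
  [:: 0;1;1;1;1;0;1;0;1;0;0;0;1;0;1;1;1;1;1;1;1;1];
  [:: 1;1;0;1;1;0;0;0;0;1;1;0;0;0;0;0;1;0;0;1;1;1];
  [:: 1;1;0;0;0;1;0;1;0;1;1;1;0;0;0;1;0;1;0;1;1;0];
  [:: 0;0;1;0;0;1;1;0;0;0;1;0;1;0;0;0;0;1;1;0;1;0];
  [:: 0;0;0;0;0;0;1;0;1;0;0;1;1;0;1;0;1;1;1;0;1;1];
  [:: 1;1;1;1;1;1;0;0;0;0;0;0;0;0;1;0;0;1;0;1;0;0];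
  [:: 0;0;0;1;0;0;0;0;1;0;0;0;1;1;1;1;0;0;0;0;1;1];
  [:: 0;1;1;1;0;1;0;0;1;0;1;0;0;0;1;1;0;1;1;1;1;1];
  [:: 0;0;0;0;1;1;1;1;1;1;0;0;1;0;0;0;0;0;1;0;0;0];
  [:: 0;0;1;1;0;1;0;1;1;0;1;1;1;1;0;1;0;0;1;0;0;1];
  [:: 0;1;0;1;1;0;0;0;1;0;0;1;1;0;0;1;1;1;0;0;0;1];
  [:: 0;0;1;0;1;1;1;0;1;1;1;0;0;1;0;1;0;0;0;1;0;0];
  [:: 1;0;1;1;0;1;0;0;1;1;1;1;1;0;1;1;0;0;0;0;1;0];
  [:: 0;1;0;1;1;1;1;0;1;1;0;0;1;0;1;1;0;1;1;0;0;1]].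
Definition c22_i : seq (seq nat) := [:: [:: 1;0;1;1;1;1;1;1;1;1;0;1;1;0;1;1;0;1;1;1;0;1];
  [:: 0;1;0;1;1;0;0;0;1;1;0;1;0;1;0;0;1;1;1;0;0;1];
  [:: 1;0;1;1;1;0;1;0;0;0;0;0;0;0;1;0;0;0;0;1;0;0];
  [:: 1;1;1;0;0;0;1;1;1;0;0;0;1;1;1;0;0;0;0;0;1;1];
  [:: 1;1;1;0;0;1;1;1;0;1;0;0;1;0;1;1;1;0;1;1;1;0];
  [:: 1;0;0;0;1;1;0;1;0;0;0;0;0;1;0;1;0;1;1;0;1;1];
  [:: 1;0;1;1;1;0;0;1;0;1;1;0;1;1;0;1;1;0;0;0;1;1];
  [:: 1;0;0;1;1;1;1;1;1;0;0;0;1;0;0;1;0;1;0;1;0;0];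
  [:: 1;1;0;1;0;0;0;1;1;1;1;0;1;0;0;0;1;0;0;1;0;1];
  [:: 1;1;0;0;1;0;1;0;1;1;0;0;1;0;0;1;1;0;1;1;1;0];
  [:: 0;0;0;0;0;0;1;0;1;0;0;0;0;0;0;1;1;1;0;1;0;0];
  [:: 1;1;0;0;0;0;0;0;0;0;0;0;1;1;0;1;1;0;1;0;1;0];
  [:: 1;0;0;1;1;0;1;1;1;1;0;1;0;0;0;0;0;1;1;0;1;1];
  [:: 0;1;0;1;0;1;1;0;0;0;0;1;0;1;1;1;0;1;0;0;1;1];
  [:: 1;0;1;1;1;0;0;0;0;0;0;0;0;1;0;0;1;1;1;1;1;0];
  [:: 1;0;0;0;1;1;1;1;0;1;1;1;0;1;0;0;1;1;1;0;1;0];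
  [:: 0;1;0;0;1;0;1;0;1;1;1;1;0;0;1;1;1;1;1;0;0;1];
  [:: 1;1;0;0;0;1;0;1;0;0;1;0;1;1;1;1;1;0;1;0;0;0];
  [:: 1;1;0;0;1;1;0;0;0;1;0;1;1;0;1;1;1;1;0;0;1;0];
  [:: 1;0;1;0;1;0;0;1;1;1;1;0;0;0;1;0;0;0;0;0;0;0];
  [:: 0;0;0;1;1;1;1;0;0;1;0;1;1;1;1;1;0;0;1;0;0;1];
  [:: 1;1;0;1;0;1;1;0;1;0;0;0;1;1;0;0;1;0;0;0;1;1]].
Definition c22_n : seq (seq nat) := [:: [:: 0;1;0;1;0;1;0;0;1;1;1;1;0;1;1;1;0;0;1;1;0;0];
  [:: 1;0;0;0;0;0;0;1;1;1;1;0;1;1;1;0;1;1;1;0;0;1];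
  [:: 0;0;1;0;1;0;1;0;0;0;0;1;1;0;0;1;0;1;1;1;0;0];
  [:: 1;0;0;1;0;1;1;0;1;1;1;1;1;0;1;1;0;1;1;1;1;1];
  [:: 0;0;1;0;1;1;0;0;1;1;1;0;0;0;1;0;0;1;0;1;0;1];
  [:: 1;0;0;1;1;1;1;0;1;0;1;0;1;0;1;1;1;0;0;1;0;0];
  [:: 0;0;1;1;0;1;0;0;0;1;0;0;0;0;1;1;0;1;0;1;1;1];
  [:: 0;1;0;0;0;0;0;0;0;0;1;1;0;0;1;1;0;1;0;1;1;0];
  [:: 1;1;0;1;1;1;0;0;0;0;0;0;0;1;0;1;0;1;0;1;0;1];
  [:: 1;1;0;1;1;0;1;0;0;0;1;1;1;0;0;1;1;0;0;0;0;1];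
  [:: 1;1;0;1;1;1;0;1;0;1;0;0;1;1;1;0;1;1;0;0;1;0];
  [:: 1;0;1;1;0;0;0;1;0;1;0;1;0;0;1;0;0;1;0;1;0;1];
  [:: 0;1;1;1;0;1;0;0;0;1;1;0;0;0;1;0;0;1;0;0;0;1];
  [:: 1;1;0;0;0;0;0;0;1;0;1;0;0;0;1;0;0;0;1;0;0;1];
  [:: 1;1;0;1;1;1;1;1;0;0;1;1;1;1;1;1;0;1;1;0;1;0];
  [:: 1;0;1;1;0;1;1;1;1;1;0;0;0;0;1;1;1;1;0;0;0;1];
  [:: 0;1;0;0;0;1;0;0;0;1;1;0;0;0;0;1;1;0;0;0;0;1];
  [:: 0;1;1;1;1;0;1;1;1;0;1;1;1;0;1;1;0;1;1;0;1;1];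
  [:: 1;1;1;1;0;0;0;0;0;0;0;0;0;1;1;0;0;1;0;1;0;0];
  [:: 1;0;1;1;1;1;1;1;1;0;0;1;0;0;0;0;0;0;1;1;1;1];
  [:: 0;0;0;1;0;0;1;1;0;0;1;0;0;0;1;0;0;1;0;1;1;0];
  [:: 0;1;0;1;1;0;1;0;1;1;0;1;1;1;0;1;1;1;0;1;0;1]].
Lemma c22_good : good (22 + 22) 22 5.
Proof. apply: (@base_good 22 5 2 (dec c22_r) (dec c22_i) (dec c22_n) 0). vm_compute. reflexivity. Qed.

Definition c40_r : seq (seq nat) := [:: [:: 0;0;0;0;0;0;1;0;0;0;0;0;0;0;0;1;1;0;0;0;0;0;0;0;0;0;0;0;0;0;0;0;1;0;1;1;0;0;1;0];
  [:: 0;1;1;1;1;0;0;1;0;0;1;0;1;0;0;0;1;1;0;1;1;1;1;0;1;0;0;0;1;1;0;0;0;1;1;1;0;1;0;0];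
  [:: 0;1;1;1;1;1;0;0;1;1;1;0;1;1;0;0;1;0;1;1;0;0;0;1;0;1;0;1;1;0;1;0;1;0;0;1;0;0;0;0];
  [:: 0;1;1;0;0;1;0;0;1;0;1;0;1;1;1;1;0;0;1;1;0;0;1;1;0;0;0;0;1;0;1;0;1;0;1;0;0;1;1;0];
  [:: 0;1;1;0;1;1;0;0;0;0;1;1;1;1;1;1;0;0;1;1;1;1;1;1;1;0;0;0;0;1;1;1;1;0;1;0;1;1;0;1];
  [:: 0;0;1;1;1;1;1;1;1;0;0;0;0;1;1;1;1;0;1;1;0;1;1;0;1;0;1;0;0;1;0;1;0;0;1;0;0;1;1;0];
  [:: 1;0;0;0;0;1;0;1;1;1;0;0;1;0;0;1;1;0;0;0;1;1;0;1;0;1;0;0;0;0;1;1;0;1;0;1;0;0;1;1];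
  [:: 0;1;0;0;0;1;1;1;1;1;1;0;1;1;1;0;1;1;1;0;0;0;1;0;1;0;1;0;1;1;0;0;0;0;1;0;1;1;0;0];
  [:: 0;0;1;1;0;1;1;1;0;1;0;0;1;1;0;0;1;0;0;1;1;1;1;0;0;0;1;1;1;1;1;0;1;0;0;1;1;0;0;0];
  [:: 0;0;1;0;0;0;1;1;1;0;0;0;0;0;0;1;0;1;0;0;0;0;1;0;1;1;1;1;0;1;1;0;1;0;0;0;0;1;1;0];
  [:: 0;1;1;1;1;0;0;1;0;0;0;0;0;1;1;0;0;1;0;1;0;0;1;1;0;0;0;1;1;0;1;0;1;0;0;1;0;1;1;0];
  [:: 0;0;0;0;1;0;0;0;0;0;0;1;0;1;1;1;1;1;1;1;1;1;0;1;1;1;0;0;1;0;0;0;0;1;1;1;0;1;1;1];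
  [:: 0;1;1;1;1;0;1;1;1;0;0;0;0;1;1;0;0;1;1;1;0;0;1;0;1;0;1;1;1;1;1;1;0;1;0;1;1;1;1;0];
  [:: 0;0;1;1;1;1;0;1;1;0;1;1;1;0;0;1;1;1;1;0;1;1;0;1;0;0;0;1;1;1;0;1;0;1;0;1;1;0;1;1];
  [:: 0;0;0;1;1;1;0;1;0;0;1;1;1;0;1;0;0;1;0;1;0;1;0;0;1;0;1;0;0;1;0;1;0;0;1;0;1;1;1;0];
  [:: 1;0;0;1;1;1;1;0;0;1;0;1;0;1;0;1;0;0;0;1;0;1;1;1;0;0;0;0;0;0;0;0;0;1;1;1;0;0;0;0];
  [:: 1;1;1;0;0;1;1;1;1;0;0;1;0;1;0;0;0;0;1;1;0;0;1;1;0;1;1;0;0;0;0;0;0;1;0;1;0;1;1;1];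
  [:: 0;1;0;0;0;0;0;1;0;1;1;1;1;1;1;0;0;1;0;0;1;1;0;0;1;0;0;0;1;0;0;0;1;1;1;1;0;0;0;1];
  [:: 0;0;1;1;1;1;0;1;0;0;0;1;1;1;0;0;1;0;1;1;1;1;1;1;0;1;1;0;1;0;1;0;0;1;1;1;1;1;0;1];
  [:: 0;1;1;1;1;1;0;0;1;0;1;1;1;0;1;1;1;0;1;0;1;1;0;1;0;0;1;0;0;0;0;1;1;1;1;0;1;0;1;0];
  [:: 0;1;0;0;1;0;1;0;1;0;0;1;0;1;0;0;0;1;1;1;1;0;0;1;1;0;0;1;1;0;1;0;1;1;0;1;0;0;1;0];
  [:: 0;1;0;0;1;1;1;0;1;0;0;1;0;1;1;1;0;1;1;1;0;0;1;1;1;1;0;0;0;0;1;0;1;1;1;0;0;1;0;1];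
  [:: 0;1;0;1;1;1;0;1;1;1;1;0;1;0;0;1;1;0;1;0;0;1;1;1;1;0;0;0;0;0;0;0;1;1;0;0;0;0;1;1];
  [:: 0;0;1;1;1;0;1;0;0;0;1;1;0;1;0;1;1;0;1;1;1;1;1;0;1;0;1;1;0;0;0;1;1;0;0;1;0;1;1;0];
  [:: 0;1;0;0;1;1;0;1;0;1;0;1;1;0;1;0;0;1;0;0;1;1;1;1;1;1;0;0;0;1;1;1;1;0;1;0;1;1;0;1];
  [:: 0;0;1;0;0;0;1;0;0;1;0;1;0;0;0;0;1;0;1;0;0;1;0;0;1;1;1;1;1;1;0;1;0;0;1;1;1;0;1;0];
  [:: 0;0;0;0;0;1;0;1;1;1;0;0;1;0;1;0;1;0;1;1;0;0;0;1;0;1;1;1;0;0;1;1;0;0;1;1;0;0;0;0];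
  [:: 0;0;1;0;0;0;0;0;1;1;1;0;1;1;0;0;0;0;0;0;1;0;0;1;0;1;1;1;1;1;1;1;0;1;1;1;0;0;1;1];
  [:: 0;1;1;1;0;0;0;1;1;0;1;1;1;1;0;0;0;1;1;0;1;0;0;0;0;1;0;1;0;0;1;1;0;1;1;1;1;0;0;1];
  [:: 0;1;0;0;1;1;0;1;1;1;0;0;1;1;1;0;0;0;0;0;0;0;0;0;1;1;0;1;0;0;1;1;0;0;1;1;0;1;0;0];
  [:: 0;0;1;1;1;0;1;0;1;1;1;0;1;0;0;0;0;0;1;0;1;1;0;0;1;0;1;1;1;1;0;0;0;1;0;0;0;1;0;0];
  [:: 0;0;0;0;1;1;1;0;0;0;0;0;1;1;1;0;0;0;0;1;0;0;0;1;1;1;1;1;1;1;0;1;1;0;0;1;0;0;1;1];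
  [:: 1;0;1;1;1;0;0;0;1;1;1;0;0;0;0;0;0;1;0;1;1;1;1;1;1;0;0;0;0;0;0;1;1;0;1;0;1;0;0;1];
  [:: 0;1;0;0;0;0;1;0;0;0;0;1;1;1;0;1;1;1;1;1;1;1;1;0;0;0;0;1;1;0;1;0;0;0;0;1;0;0;1;1];
  [:: 1;1;0;1;1;1;0;1;0;0;0;1;0;0;1;1;0;1;1;1;0;1;0;0;1;1;1;1;1;1;0;0;1;0;0;0;1;0;0;1];
  [:: 1;1;1;0;0;0;1;0;1;0;1;1;1;1;0;1;1;1;1;0;1;0;0;1;0;1;1;1;1;1;0;1;0;1;0;0;0;0;0;0];
  [:: 0;0;0;0;1;0;0;1;1;0;0;0;1;1;1;0;0;0;1;1;0;0;0;0;1;1;0;0;1;0;0;0;1;0;1;0;0;0;0;0];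
  [:: 0;1;0;1;1;1;0;1;0;1;1;1;1;0;1;0;1;0;1;0;0;1;0;1;1;0;0;0;0;1;1;0;0;0;0;0;0;0;1;0];
  [:: 1;0;0;1;0;1;1;0;0;1;1;1;1;1;1;0;1;0;0;1;1;0;1;1;0;1;0;1;0;0;0;1;0;1;0;0;0;1;1;0];
  [:: 0;0;0;0;1;0;1;0;0;0;0;1;0;1;0;0;1;1;1;0;0;1;1;0;1;0;0;1;1;0;0;1;1;1;1;0;0;0;0;0]].
Definition c40_i : seq (seq nat) := [:: [:: 1;0;1;1;1;1;1;0;1;0;0;1;0;0;0;0;0;0;0;1;0;1;1;0;1;0;0;1;1;0;0;1;1;0;0;1;1;1;0;0];
  [:: 0;1;1;1;0;0;1;1;1;1;0;1;1;0;0;0;1;0;0;1;1;0;0;0;0;0;0;1;0;1;0;0;1;0;1;0;0;1;0;0];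
  [:: 1;1;1;1;0;0;1;0;1;1;0;0;1;0;1;0;1;1;1;0;1;0;1;1;0;0;1;0;0;1;1;0;1;1;1;0;0;1;0;1];
  [:: 1;1;1;1;1;1;1;1;1;0;0;0;0;1;1;0;0;1;0;1;0;0;1;0;1;1;0;0;1;1;0;1;0;1;1;0;0;1;0;1];
  [:: 1;0;0;1;0;0;1;0;1;0;0;1;1;0;1;1;1;1;0;0;1;1;0;0;1;1;1;1;1;1;1;0;0;0;0;0;1;1;1;0];
  [:: 1;0;0;1;0;0;1;1;1;1;1;0;0;1;1;1;1;0;1;1;1;0;1;1;1;1;0;0;1;0;0;1;0;1;1;1;1;0;1;1];
  [:: 1;1;1;1;1;1;1;1;1;1;0;1;1;1;0;0;1;1;0;1;0;1;1;1;1;0;0;0;0;1;0;1;0;1;1;0;1;1;1;1];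
  [:: 0;1;0;1;0;1;1;0;0;1;0;1;0;0;0;0;1;1;1;0;0;0;0;0;0;1;0;0;1;1;1;0;1;1;0;0;1;1;1;1];
  [:: 1;1;1;1;1;1;1;0;1;0;1;1;0;1;1;0;0;1;0;1;1;1;0;1;0;1;1;1;1;0;1;0;0;1;1;0;1;0;0;1];
  [:: 0;1;1;0;0;1;1;1;0;0;0;1;0;1;1;0;1;1;0;0;0;0;0;1;0;0;0;1;0;0;0;0;1;1;0;0;0;0;1;0];
  [:: 0;0;0;0;0;1;0;0;1;0;0;1;1;0;0;0;1;0;1;1;1;0;0;1;1;0;1;1;1;0;1;0;1;0;1;1;1;0;0;0];
  [:: 1;1;0;0;1;0;1;1;1;1;1;0;0;0;0;0;0;1;0;0;0;0;1;0;0;0;0;0;1;0;1;1;0;0;0;1;1;0;0;1];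
  [:: 0;1;1;0;1;0;1;0;0;0;1;0;0;1;0;1;1;0;0;1;1;0;1;1;0;1;0;0;0;1;0;1;0;0;0;1;1;0;0;1];
  [:: 0;0;0;1;0;1;1;0;1;1;0;0;1;0;0;1;1;0;0;0;1;0;0;0;0;0;1;0;0;1;1;0;1;0;1;0;1;0;1;1];
  [:: 0;0;1;1;1;1;0;0;1;1;0;0;0;0;1;0;0;1;1;0;0;0;1;0;0;0;1;0;0;1;1;1;0;1;0;0;0;1;0;0];
  [:: 0;0;0;0;1;1;0;0;0;0;0;0;1;1;0;0;1;0;1;1;0;0;1;0;1;1;0;1;1;1;1;1;0;1;0;1;1;0;0;0];
  [:: 0;1;1;0;1;1;1;1;0;1;1;0;1;1;0;1;1;1;0;1;1;1;0;1;0;0;0;0;0;0;1;1;1;0;0;1;0;0;1;1];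
  [:: 0;0;1;1;1;0;1;1;1;1;0;1;0;0;1;0;1;0;1;1;0;0;0;1;0;1;0;1;1;1;0;0;0;1;0;0;0;1;0;1];
  [:: 0;0;1;0;0;1;0;1;0;0;1;0;0;0;1;1;0;1;1;0;1;1;1;1;1;0;0;1;1;1;1;0;0;0;1;0;0;1;0;1];
  [:: 1;1;0;1;0;1;1;0;1;0;1;0;1;0;0;1;1;1;0;1;1;0;0;1;1;0;1;1;0;0;0;0;1;1;1;1;1;0;0;0];
  [:: 0;1;1;0;1;1;0;0;1;0;1;0;1;1;0;0;1;0;1;1;0;0;1;0;1;1;0;0;0;1;0;1;0;1;0;0;0;1;1;0];
  [:: 1;0;0;0;1;0;1;0;1;0;0;0;0;0;0;0;1;0;1;0;0;0;1;1;0;1;0;0;0;0;1;1;0;0;0;1;1;0;1;1];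
  [:: 1;0;1;1;0;1;1;0;0;0;0;1;1;0;1;1;0;0;1;0;1;1;1;1;0;1;0;0;1;0;0;1;1;0;0;1;1;0;0;0];
  [:: 0;0;1;0;0;1;1;0;1;1;1;0;1;0;0;0;1;1;1;1;0;1;1;1;1;0;0;0;1;0;1;1;0;1;0;0;1;1;0;0];
  [:: 1;0;0;1;1;1;1;0;0;0;1;0;0;0;0;1;0;0;1;1;1;0;0;1;1;1;1;1;0;0;1;1;1;1;0;1;0;0;0;0];
  [:: 0;0;0;1;1;1;0;1;1;0;0;0;1;0;0;1;0;1;0;0;1;1;1;0;1;1;0;0;1;0;0;1;0;0;1;1;1;0;1;1];
  [:: 0;0;1;0;1;0;0;0;1;0;1;0;0;1;1;0;0;0;0;1;0;0;0;0;1;0;1;0;0;0;1;1;0;0;0;1;0;0;1;1];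
  [:: 1;1;0;0;1;0;0;0;1;1;1;0;0;0;0;1;0;1;1;1;0;0;0;0;1;0;0;1;0;0;0;0;0;0;1;0;1;1;0;0];
  [:: 1;0;0;1;1;1;0;1;1;0;1;1;0;0;0;1;0;1;1;0;0;0;1;1;0;1;0;0;0;1;0;1;1;1;0;1;1;1;1;1];
  [:: 0;1;1;1;1;0;1;1;0;0;0;0;1;1;1;1;0;1;1;0;1;0;0;0;0;0;0;0;1;1;0;1;1;0;0;1;1;1;0;0];
  [:: 0;0;1;0;1;0;0;1;1;0;1;1;0;1;1;1;1;0;1;0;0;1;0;1;1;0;1;0;0;0;1;0;1;0;0;0;0;1;1;0];
  [:: 1;0;0;1;0;1;1;0;0;0;0;1;1;0;1;1;1;0;0;0;1;1;1;1;1;1;1;0;1;1;0;1;1;1;0;0;0;0;0;1];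
  [:: 1;1;1;0;0;0;0;1;0;1;1;0;0;1;0;0;1;0;0;1;0;0;1;0;1;0;0;0;1;1;1;1;1;1;0;0;1;1;0;1];
  [:: 0;0;1;1;0;1;1;1;1;1;0;0;0;0;1;1;0;1;0;1;1;0;0;1;1;0;0;0;1;0;0;1;1;1;1;1;1;1;1;1];
  [:: 0;1;1;1;0;1;1;0;1;0;1;0;0;1;0;0;0;0;1;1;0;0;0;0;0;1;0;1;0;0;0;0;0;1;1;1;0;0;1;0];
  [:: 1;0;0;0;0;1;0;0;0;0;1;1;1;0;0;1;1;0;0;1;0;1;1;0;1;1;1;0;1;1;0;0;0;1;1;1;0;0;0;1];
  [:: 1;0;0;0;1;1;1;1;1;0;1;1;1;1;0;1;0;0;0;1;0;1;1;1;0;1;0;1;1;1;0;0;1;1;0;0;0;0;1;1];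
  [:: 1;1;1;1;1;0;1;1;0;0;0;0;0;0;1;0;0;1;1;0;1;0;0;1;0;0;0;1;1;1;1;0;1;1;0;0;0;0;0;0];
  [:: 0;0;0;0;1;1;1;1;0;1;0;0;0;1;0;0;1;0;0;0;1;1;0;0;0;1;1;0;1;0;1;0;0;1;1;0;1;0;1;0];
  [:: 0;0;1;1;0;1;1;1;1;0;0;1;1;1;0;0;1;1;1;0;0;1;0;0;0;1;1;0;1;0;0;1;1;1;0;1;1;0;0;0]].
Definition c40_n : seq (seq nat) := [:: [:: 1;1;1;1;0;0;0;1;1;0;1;0;1;1;0;1;0;1;0;0;1;1;1;1;0;0;1;1;0;1;0;1;1;0;1;1;0;0;0;0];
  [:: 1;0;0;1;1;0;0;0;0;0;1;1;1;1;0;0;1;1;1;1;0;0;1;1;0;0;0;0;1;1;0;1;0;0;0;0;0;1;0;1];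
  [:: 1;0;0;1;1;1;1;0;0;0;0;1;1;0;1;0;0;1;1;0;0;1;1;0;0;1;0;0;0;1;1;1;0;1;1;0;0;1;1;0];
  [:: 1;1;1;1;0;0;0;0;0;0;1;1;1;0;1;1;1;0;0;1;0;1;0;0;0;0;0;1;1;1;1;0;1;1;0;0;1;0;0;1];
  [:: 0;1;1;0;1;0;1;1;0;1;1;0;1;0;1;1;0;1;1;0;1;1;0;1;0;1;1;1;1;0;0;1;1;0;0;1;0;0;0;1];
  [:: 0;0;1;0;0;0;1;1;1;1;0;0;0;1;0;1;0;0;0;0;1;1;0;1;1;0;0;0;1;0;1;0;0;0;1;0;0;1;1;0];
  [:: 0;0;1;0;1;1;0;0;1;0;0;0;1;1;1;0;1;1;0;1;1;0;1;1;0;1;0;1;1;1;0;1;0;0;1;1;1;0;1;1];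
  [:: 1;0;0;0;1;1;0;0;0;1;1;0;1;1;1;0;1;1;1;0;0;1;0;1;1;1;1;1;0;1;0;1;1;1;0;0;0;1;1;1];
  [:: 1;0;0;0;0;1;1;0;0;1;1;0;0;0;1;1;1;0;1;1;1;0;1;1;1;0;1;1;0;0;0;0;1;1;1;1;0;1;1;1];
  [:: 0;0;0;0;1;1;0;1;1;0;1;0;0;0;1;1;1;1;1;0;1;0;1;0;1;1;1;0;1;1;0;0;1;0;0;1;1;1;0;0];
  [:: 1;1;0;1;1;0;0;1;1;1;0;0;1;0;0;1;1;0;0;0;1;0;1;1;1;1;1;0;1;1;0;1;1;0;1;1;1;0;0;0];
  [:: 0;1;1;1;0;0;0;0;0;0;0;1;0;1;0;0;1;1;0;1;1;0;1;1;1;1;1;1;0;1;0;1;1;0;1;1;0;1;0;0];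
  [:: 1;1;1;1;1;0;1;1;0;0;1;0;0;0;1;1;1;1;1;1;1;1;1;1;1;1;0;0;1;1;0;0;1;1;0;1;1;0;0;1];
  [:: 1;1;0;0;0;1;1;1;0;0;0;1;0;1;0;0;1;0;0;1;0;0;0;0;0;1;1;1;1;0;1;0;0;1;0;1;1;0;0;1];
  [:: 0;0;1;1;1;0;1;1;1;1;0;0;1;0;0;1;0;1;0;1;0;0;1;0;0;1;0;0;0;0;1;1;0;0;0;0;0;0;0;1];
  [:: 1;0;0;1;1;1;0;0;1;1;1;0;1;0;1;1;0;1;1;1;0;1;0;1;0;1;1;0;0;1;1;1;0;0;1;0;0;1;1;0];
  [:: 0;1;0;1;0;0;1;1;1;1;1;1;1;1;0;0;1;1;0;1;0;1;1;1;1;1;1;1;1;0;1;1;1;0;0;1;1;0;0;0];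
  [:: 1;1;1;0;1;0;1;1;0;1;0;1;1;0;1;1;1;1;1;0;0;1;1;1;0;1;1;1;1;1;0;0;1;1;0;1;0;0;0;0];
  [:: 0;1;1;0;1;0;0;1;1;1;0;0;1;0;0;1;0;1;1;0;0;0;0;0;0;1;0;0;0;0;0;1;1;1;1;0;0;1;1;1];
  [:: 0;1;0;1;0;0;1;0;1;0;0;1;1;1;1;1;1;0;0;1;1;0;1;1;0;1;1;1;0;0;1;1;0;1;1;1;1;1;1;1];
  [:: 1;0;0;0;1;1;1;0;1;1;1;1;1;0;0;0;0;0;0;1;0;0;1;0;1;1;0;0;1;0;1;1;1;0;1;1;1;1;1;1];
  [:: 1;0;1;1;1;1;0;1;0;0;0;0;1;0;0;1;1;1;0;0;0;1;1;1;0;1;0;0;1;0;0;0;0;1;0;0;1;1;1;1];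
  [:: 1;1;1;0;0;0;1;0;1;1;1;1;1;0;1;0;1;1;0;1;1;1;1;1;1;0;0;0;1;0;0;0;1;1;1;0;0;1;1;1];
  [:: 1;1;0;0;1;1;1;1;1;0;1;1;1;0;0;1;1;1;0;1;0;1;1;0;1;1;1;0;1;1;1;1;1;1;1;0;0;0;0;1];
  [:: 0;0;0;0;0;1;0;1;1;1;1;1;1;0;0;0;1;0;0;0;1;0;1;1;0;0;0;0;1;0;1;0;0;1;1;1;1;0;1;0];
  [:: 0;0;1;0;1;0;1;1;0;1;1;1;1;1;1;1;1;1;1;1;1;1;0;1;0;0;0;1;0;0;1;1;0;1;0;1;1;0;0;1];
  [:: 1;0;0;0;1;0;0;1;1;1;1;1;0;1;0;1;1;1;0;1;0;0;0;1;0;0;0;1;1;1;1;1;1;1;0;0;1;1;0;0];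
  [:: 1;0;0;1;1;0;1;1;1;0;0;1;0;1;0;0;1;1;0;1;0;0;0;0;0;1;1;1;1;1;1;0;0;0;1;0;0;1;0;1];
  [:: 0;1;0;1;1;1;1;0;0;1;1;0;1;1;0;0;1;1;0;0;1;1;1;1;1;0;1;1;1;1;0;1;0;0;1;0;0;1;1;0];
  [:: 1;1;1;1;0;0;1;1;0;1;1;1;1;0;0;1;0;1;0;0;0;0;0;1;0;0;1;1;1;0;1;1;0;1;0;1;1;1;0;1];
  [:: 0;0;1;1;0;1;0;0;0;0;0;0;0;1;1;1;1;0;0;1;1;0;0;1;1;1;1;1;0;1;0;0;0;0;1;0;0;0;1;1];
  [:: 1;1;1;0;1;0;1;1;0;0;1;1;0;0;1;1;1;0;1;1;1;0;0;1;0;1;1;0;1;1;0;1;1;0;0;0;0;1;1;0];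
  [:: 1;0;0;1;1;0;0;1;1;1;1;1;1;0;0;0;1;1;1;0;1;0;1;1;0;0;1;0;0;0;0;1;0;1;1;1;0;0;0;1];
  [:: 0;0;1;1;0;0;0;1;1;0;0;0;1;1;0;0;0;1;1;1;0;1;1;1;1;1;1;0;0;1;0;0;1;1;0;1;1;0;0;0];
  [:: 1;0;1;0;0;1;1;0;1;0;1;1;0;0;0;1;0;0;1;1;1;0;1;1;1;0;0;1;1;0;1;0;1;0;1;0;1;0;1;1];
  [:: 1;0;0;0;1;0;1;0;1;1;1;1;1;1;0;0;1;1;0;1;1;0;0;0;1;1;0;0;0;1;0;0;1;1;0;0;0;0;0;1];
  [:: 0;0;0;1;0;0;1;0;0;1;1;0;1;1;0;0;1;0;0;1;1;1;0;0;1;1;1;0;0;1;0;0;0;1;1;0;1;1;1;1];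
  [:: 0;1;1;0;0;1;0;1;1;1;0;1;0;0;0;1;0;0;1;1;1;1;1;0;0;0;1;1;1;1;0;1;0;0;0;0;1;0;1;1];
  [:: 0;0;1;0;0;1;1;1;1;0;0;0;0;0;0;1;0;0;1;1;1;1;1;0;1;0;0;0;1;0;1;1;0;0;1;0;1;1;1;0];
  [:: 0;1;0;1;1;0;1;1;1;0;0;0;1;1;1;0;0;0;1;1;1;1;1;1;0;1;0;1;0;1;1;0;1;0;1;1;1;1;0;0]].
Lemma c40_good : good (40 + 40) 40 8.
Proof. apply: (@base_good 40 8 3 (dec c40_r) (dec c40_i) (dec c40_n) 0). vm_compute. reflexivity. Qed.

Definition c50_r : seq (seq nat) := [:: [:: 0;1;0;0;0;0;0;0;0;1;0;0;1;0;0;0;0;0;0;1;0;0;0;0;0;0;0;0;0;0;0;1;1;0;0;0;0;0;1;0;0;0;0;0;0;0;1;0;0;0];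
  [:: 1;0;1;0;1;1;1;1;1;0;1;1;1;1;1;0;0;0;1;0;1;0;1;0;1;1;0;0;1;1;1;1;0;1;1;0;0;1;1;0;1;1;0;0;0;1;1;0;1;0];
  [:: 0;1;0;1;1;1;0;0;1;1;1;0;0;0;0;0;1;0;1;0;1;0;0;1;0;1;0;0;1;0;1;0;0;1;0;1;1;1;0;1;1;0;0;1;1;0;1;0;1;0];
  [:: 0;0;1;1;0;1;1;1;1;0;0;1;1;1;1;1;0;1;1;0;1;1;0;0;1;1;1;1;0;1;1;1;0;0;0;1;1;1;0;0;0;1;0;0;0;0;1;0;0;0];
  [:: 0;1;1;0;1;0;0;1;1;0;0;0;0;0;1;0;1;1;1;1;0;1;1;0;0;1;1;1;0;0;1;1;0;0;1;0;1;0;1;1;0;1;1;1;0;1;0;0;0;0];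
  [:: 0;1;1;1;0;0;0;0;0;0;0;0;0;1;0;1;0;0;0;0;1;1;0;1;1;1;0;1;0;0;1;1;1;1;0;0;0;0;1;1;1;0;1;1;1;1;0;0;0;0];
  [:: 0;1;0;1;0;0;0;0;0;0;1;1;1;1;1;1;1;1;1;0;0;0;1;1;0;1;1;1;0;1;1;1;1;1;1;0;1;1;0;0;0;1;1;0;1;0;0;1;1;0];
  [:: 0;1;0;1;1;0;0;1;0;0;0;1;1;0;0;1;0;0;0;1;1;0;1;1;0;1;0;0;0;1;0;0;0;1;1;0;1;1;0;1;0;1;0;0;1;1;0;1;1;1];
  [:: 0;1;1;1;1;0;0;0;1;1;1;1;0;0;0;1;1;0;1;1;0;0;1;0;0;0;1;0;0;1;1;0;1;0;0;1;0;0;1;0;0;1;0;0;0;0;0;0;0;0];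
  [:: 1;0;1;0;0;0;0;0;1;1;1;0;0;0;0;1;0;0;0;0;0;1;0;1;0;0;0;1;1;0;0;0;1;1;1;1;1;1;1;0;0;1;1;0;1;0;1;0;0;0];
  [:: 0;1;1;0;0;0;1;0;1;1;0;1;0;1;0;0;0;1;0;1;1;0;0;1;0;0;1;1;1;1;0;0;0;0;1;1;1;0;1;0;0;0;0;0;0;0;0;1;1;0];
  [:: 0;1;0;1;0;0;1;1;1;0;1;1;1;0;0;1;1;0;1;0;1;1;0;1;0;0;0;1;0;0;1;0;1;1;1;1;0;1;1;1;1;0;1;0;0;1;1;0;1;1];
  [:: 1;1;0;1;0;0;1;1;0;0;0;1;1;0;1;1;1;1;0;1;1;0;0;1;1;1;1;0;0;0;0;0;1;1;0;0;0;1;0;0;1;1;1;0;1;1;0;1;0;1];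
  [:: 0;1;0;1;0;1;1;0;0;0;1;0;0;1;1;0;1;0;0;1;0;1;0;0;1;1;1;0;0;0;1;1;1;1;0;1;1;0;1;1;0;0;1;0;1;1;1;0;0;0];
  [:: 0;1;0;1;1;0;1;0;0;0;0;0;1;1;0;1;1;0;0;0;1;1;0;1;1;1;1;0;0;1;1;0;1;0;1;0;0;1;1;1;1;0;1;1;1;1;1;1;0;1];
  [:: 0;0;0;1;0;1;1;1;1;1;0;1;1;0;1;1;1;0;0;0;1;0;0;0;0;0;0;0;1;1;1;1;0;0;1;1;1;0;1;0;0;1;1;1;0;0;0;0;0;0];
  [:: 0;0;1;0;1;0;1;0;1;0;0;1;1;1;1;1;0;1;0;0;0;0;1;0;1;1;0;0;0;1;0;1;0;0;1;0;0;1;0;1;0;1;0;0;0;1;1;1;1;1];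
  [:: 0;0;0;1;1;0;1;0;0;0;1;0;1;0;0;0;1;0;1;0;0;1;0;0;0;0;0;1;0;1;1;0;0;1;0;0;0;0;1;0;1;0;0;0;1;0;1;1;0;0];
  [:: 0;1;1;1;1;0;1;0;1;0;0;1;0;0;0;0;0;1;1;1;1;1;1;0;0;0;0;0;0;1;1;1;0;1;1;1;1;0;1;1;0;0;0;0;1;0;1;0;1;1];
  [:: 1;0;0;0;1;0;0;1;1;0;1;0;1;1;0;0;0;0;1;0;1;1;1;0;1;1;0;0;1;1;1;1;1;1;0;1;1;0;1;0;1;1;0;0;1;0;1;1;0;0];
  [:: 0;1;1;1;0;1;0;1;0;0;1;1;1;0;1;1;0;0;1;1;0;0;0;0;1;1;1;1;1;0;1;1;0;1;0;1;1;0;1;1;1;1;1;1;1;1;0;1;1;0];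
  [:: 0;0;0;1;1;1;0;0;0;1;0;1;0;1;1;0;0;1;1;1;0;1;0;0;0;0;1;0;1;1;1;1;1;1;1;0;1;1;0;1;1;0;0;0;1;1;0;0;0;0];
  [:: 0;1;0;0;1;0;1;1;1;0;0;0;0;0;0;0;1;0;1;1;0;0;1;1;0;0;0;0;0;1;1;0;1;1;1;0;0;0;1;1;1;1;0;0;0;1;0;1;1;0];
  [:: 0;0;1;0;0;1;1;1;0;1;1;1;1;0;1;0;0;0;0;0;0;0;1;0;0;1;1;1;0;0;0;0;1;1;1;1;0;0;0;0;1;0;1;0;1;0;0;0;1;1];
  [:: 0;1;0;1;0;1;0;0;0;0;0;0;1;1;1;0;1;0;0;1;1;0;0;0;1;1;1;1;0;0;1;0;1;1;1;0;1;0;1;1;1;1;1;0;0;0;1;0;0;1];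
  [:: 0;1;1;1;1;1;1;1;0;0;0;0;1;1;1;0;1;0;0;1;1;0;0;1;1;1;1;1;1;0;0;1;1;1;0;1;0;0;1;1;0;1;1;1;0;1;0;1;0;0];
  [:: 0;0;0;1;1;0;1;0;1;0;1;0;1;1;1;0;0;0;0;0;1;1;0;1;1;1;0;1;0;0;1;0;0;1;1;0;1;1;0;1;0;1;1;0;0;0;1;1;1;1];
  [:: 0;0;0;1;1;1;1;0;0;1;1;1;0;0;0;0;0;1;0;0;1;0;0;1;1;1;1;0;0;1;0;1;0;0;0;0;0;0;0;0;1;1;1;1;0;1;1;0;1;1];
  [:: 0;1;1;0;0;0;0;0;0;1;1;0;0;0;0;1;0;0;0;1;1;1;0;0;0;1;0;0;1;1;1;0;1;0;1;0;0;1;1;1;0;1;0;1;0;0;1;1;0;1];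
  [:: 0;1;0;1;0;0;1;1;1;0;1;0;0;0;1;1;1;1;1;1;0;1;1;0;0;0;0;1;1;1;0;1;0;1;0;1;1;1;1;0;1;0;1;1;1;1;0;0;0;1];
  [:: 0;1;1;1;1;1;1;0;1;0;0;1;0;1;1;1;0;1;1;1;1;1;1;0;1;0;1;0;1;0;0;1;1;0;1;0;0;0;1;0;1;0;1;0;1;0;0;0;0;1];
  [:: 1;1;0;1;1;1;1;0;0;0;0;0;0;1;0;1;1;0;1;1;1;1;0;0;0;1;0;1;0;1;1;1;0;0;1;1;0;0;0;1;0;0;1;0;1;0;0;0;1;0];
  [:: 1;0;0;0;0;1;1;0;1;1;0;1;1;1;1;0;0;0;0;1;0;1;1;1;1;1;0;0;1;0;1;0;0;1;1;1;0;0;1;0;1;0;1;1;0;0;0;1;0;0];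
  [:: 0;1;1;0;0;1;1;1;0;1;0;1;1;1;0;0;0;1;1;1;1;1;1;1;1;1;1;0;0;1;0;0;1;1;1;1;0;0;1;0;0;0;1;1;1;1;1;1;0;0];
  [:: 0;1;0;0;1;0;1;1;0;1;1;1;0;0;1;1;1;0;1;0;0;1;1;1;1;0;1;0;1;0;1;1;1;1;1;1;0;0;0;0;1;1;1;0;0;1;1;0;0;0];
  [:: 0;0;1;1;0;0;0;0;1;1;1;1;0;1;0;1;0;0;1;1;1;0;0;1;0;1;0;0;0;1;0;1;1;1;1;0;0;0;0;0;1;0;1;0;1;0;0;0;1;1];
  [:: 0;0;1;1;1;0;1;1;0;1;1;0;0;1;0;1;0;0;1;1;1;1;0;0;1;0;1;0;0;1;0;0;0;0;0;0;1;1;0;1;0;0;1;1;1;0;1;1;0;0];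
  [:: 0;1;1;1;0;0;1;1;0;1;0;1;1;0;1;0;1;0;0;0;0;1;0;0;0;0;1;0;1;1;0;0;0;0;0;0;1;0;1;0;1;0;1;0;0;1;1;0;1;0];
  [:: 1;1;0;0;1;1;0;0;1;1;1;1;0;1;1;1;0;1;1;1;1;0;1;0;1;1;0;0;1;1;1;0;1;1;0;0;0;1;1;1;0;1;0;0;0;1;1;0;1;1];
  [:: 0;0;1;0;1;1;0;1;0;0;0;1;0;1;1;0;1;0;1;0;1;1;1;0;1;1;1;0;1;0;0;1;0;0;0;0;1;0;1;0;1;0;0;0;0;1;1;0;0;1];
  [:: 0;1;1;0;0;1;0;0;0;0;0;1;1;0;1;0;0;1;0;1;1;1;1;1;1;0;0;1;0;1;1;0;1;0;1;1;0;1;0;1;1;1;1;0;1;0;0;1;0;0];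
  [:: 0;1;0;1;1;0;1;1;1;1;0;0;1;0;0;1;1;0;0;1;1;0;1;0;1;1;1;1;1;0;0;0;0;0;1;0;0;0;1;0;1;1;1;0;0;0;0;1;1;0];
  [:: 0;0;0;0;1;1;1;0;0;1;0;1;1;1;1;1;0;0;0;0;1;0;0;1;1;1;1;1;0;1;1;1;1;1;1;1;1;1;0;0;1;1;0;1;1;0;0;0;0;0];
  [:: 0;0;1;0;1;1;0;0;0;0;0;0;0;0;1;1;0;0;0;0;1;0;0;0;0;1;0;1;1;1;0;0;1;1;0;0;1;0;0;0;0;0;1;0;1;1;0;0;0;1];
  [:: 0;0;1;0;0;1;1;1;0;1;0;0;1;1;1;0;0;1;1;1;1;1;0;1;0;0;0;0;0;1;1;1;0;1;0;1;1;0;0;0;1;0;1;1;1;1;1;0;1;1];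
  [:: 0;1;0;0;1;1;0;1;0;0;0;1;1;1;1;0;1;0;0;0;1;1;1;0;0;1;0;1;0;1;0;0;0;1;1;0;0;1;1;1;0;0;0;1;1;0;1;1;0;1];
  [:: 1;1;1;1;0;0;0;0;0;1;0;1;0;1;1;0;1;1;1;1;0;0;0;0;1;0;1;1;1;0;0;0;0;1;1;0;1;1;1;1;0;0;0;0;1;1;0;0;0;0];
  [:: 0;0;0;0;0;0;1;1;0;0;1;0;1;0;1;0;1;1;0;1;1;0;1;0;0;1;1;0;1;0;0;0;1;1;0;0;1;0;0;0;1;1;0;0;0;1;0;0;0;0];
  [:: 0;1;1;0;0;0;1;1;0;0;1;1;0;0;0;0;1;0;1;0;1;0;1;1;0;0;1;1;0;0;0;1;0;0;0;1;0;1;1;0;0;1;0;0;1;0;0;0;1;0];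
  [:: 0;0;0;0;0;0;0;1;0;0;0;1;1;0;1;0;1;0;1;0;0;0;0;1;1;0;1;1;1;1;1;0;0;0;0;1;0;0;1;1;0;0;0;1;1;1;0;0;0;0]].
Definition c50_i : seq (seq nat) := [:: [:: 0;0;0;1;1;0;1;0;0;1;1;1;1;0;1;0;0;1;0;1;1;0;0;0;1;0;0;1;1;1;1;0;0;0;0;0;1;0;1;0;0;1;1;0;1;0;1;1;0;1];
  [:: 0;1;0;1;1;1;0;1;1;1;1;1;0;1;0;1;0;1;1;1;0;1;1;1;1;1;1;0;0;0;1;1;0;0;0;0;0;0;1;1;0;0;1;1;1;1;1;1;1;1];
  [:: 0;0;1;0;1;1;1;1;0;1;1;0;1;1;1;1;0;1;1;0;1;1;0;0;1;1;0;0;0;1;0;0;1;1;1;0;0;0;1;0;0;1;1;1;1;1;0;0;1;1];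
  [:: 1;1;0;0;0;1;0;1;0;0;1;0;1;1;1;1;1;0;0;1;0;1;1;1;1;0;0;0;0;0;0;0;1;1;0;1;0;0;0;0;1;0;0;1;0;0;0;0;1;1];
  [:: 1;1;1;0;0;1;0;1;1;0;0;0;1;1;0;1;0;1;1;0;0;0;1;0;1;1;1;1;0;0;1;1;0;1;0;1;1;1;0;0;0;1;0;0;1;1;1;1;0;1];
  [:: 0;1;1;1;1;1;1;1;0;0;1;0;1;0;1;1;1;1;0;0;1;1;0;0;1;1;0;1;0;0;0;1;0;0;1;0;0;1;0;0;1;1;0;0;1;1;1;1;0;0];
  [:: 1;0;1;0;0;1;1;1;0;1;1;1;0;1;1;1;0;1;1;1;1;1;0;1;1;0;1;1;0;1;0;1;0;1;1;0;0;1;1;0;1;0;0;0;0;0;0;1;1;0];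
  [:: 0;1;1;1;1;1;1;0;0;1;1;1;1;0;1;1;0;1;0;0;0;0;1;1;0;0;0;1;0;1;1;1;0;1;1;1;1;1;1;1;1;1;0;0;0;0;1;0;1;1];
  [:: 0;1;0;0;1;0;0;0;1;1;1;0;0;1;1;0;0;0;1;0;0;1;0;0;0;1;0;1;0;0;0;0;0;0;0;1;0;0;1;1;1;1;0;0;1;1;1;1;0;0];
  [:: 1;1;1;0;0;0;1;1;1;1;0;1;1;0;1;1;1;1;1;1;0;0;1;0;0;1;0;1;1;0;0;1;1;0;0;1;0;0;0;1;1;0;1;1;1;0;0;1;0;1];
  [:: 1;1;1;1;0;1;1;1;1;0;0;0;0;1;0;1;0;0;0;0;1;0;1;1;0;0;0;0;0;0;1;1;0;0;1;1;1;1;1;0;1;1;0;0;0;1;1;0;0;0];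
  [:: 1;1;0;0;0;0;1;1;0;1;0;1;1;1;1;1;0;0;1;0;1;0;0;1;0;0;0;1;0;1;1;1;0;1;0;0;0;0;0;1;0;1;0;0;1;1;0;0;1;0];
  [:: 1;0;1;1;1;1;0;1;0;1;0;1;1;1;1;1;0;1;0;0;0;1;1;0;0;0;0;0;0;0;1;1;0;1;1;1;1;1;1;1;0;0;0;0;1;1;0;0;1;1];
  [:: 0;1;1;1;1;0;1;0;1;0;1;1;1;1;1;1;0;1;1;0;1;1;0;0;0;1;0;0;1;1;1;0;1;1;0;0;1;0;1;1;0;1;0;0;1;0;0;0;0;0];
  [:: 1;0;1;1;0;1;1;1;1;1;0;1;1;1;0;0;1;1;0;0;0;1;0;0;0;0;0;1;1;0;1;0;1;0;1;0;0;0;0;0;0;0;0;0;0;1;1;0;0;0];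
  [:: 0;1;1;1;1;1;1;1;0;1;1;1;1;1;0;1;0;0;1;0;0;1;0;1;1;0;1;1;0;1;0;0;0;1;1;0;1;0;0;0;0;1;1;0;1;0;1;0;0;0];
  [:: 0;0;0;1;0;1;0;0;0;1;0;0;0;0;1;0;0;1;1;0;1;1;0;1;1;1;1;1;0;1;0;0;1;0;0;1;1;1;1;0;1;0;1;0;1;0;1;1;1;0];
  [:: 1;1;1;0;1;1;1;1;0;1;0;0;1;1;1;0;1;1;1;1;0;0;1;0;0;0;0;0;0;0;1;1;1;1;1;0;0;1;1;0;0;1;1;1;1;1;1;1;0;1];
  [:: 0;1;1;0;1;0;1;0;1;1;0;1;0;1;0;1;1;1;1;0;1;0;0;1;0;0;1;0;0;0;0;0;1;0;1;0;0;0;1;1;0;0;0;1;0;0;0;1;0;1];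
  [:: 1;1;0;1;0;0;1;0;0;1;0;0;0;0;0;0;0;1;0;0;1;0;0;1;0;0;1;1;0;0;1;1;0;0;1;1;1;1;1;1;0;1;0;1;0;0;0;1;1;1];
  [:: 1;0;1;0;0;1;1;0;0;0;1;1;0;1;0;0;1;0;1;1;0;0;1;1;0;0;0;1;0;1;1;1;1;1;1;0;0;1;0;1;1;0;0;0;0;0;1;0;1;0];
  [:: 0;1;1;1;0;1;1;0;1;0;0;0;1;1;1;1;1;0;0;0;0;1;1;0;0;1;0;0;0;1;0;0;0;1;1;0;1;1;0;0;1;0;1;0;1;1;0;1;1;1];
  [:: 0;1;0;1;1;0;0;1;0;1;1;0;1;0;0;0;0;1;0;0;1;1;0;1;1;0;1;1;0;0;1;1;0;1;1;0;0;0;1;1;0;0;1;0;0;1;1;0;1;0];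
  [:: 0;1;0;1;0;0;1;1;0;0;1;1;0;0;0;1;1;0;1;1;1;0;1;1;1;1;0;0;1;1;0;1;1;0;0;0;1;1;1;0;1;0;0;0;1;0;1;0;0;0];
  [:: 1;1;1;1;1;1;1;0;0;0;0;0;0;0;0;1;1;0;0;0;0;0;1;1;0;0;0;1;0;0;1;1;1;0;1;0;1;1;0;1;0;1;1;1;0;0;1;1;0;0];
  [:: 0;1;1;0;1;1;0;0;1;1;0;0;0;1;0;0;1;0;0;0;0;1;0;1;0;1;0;1;0;0;1;1;1;1;0;0;1;0;0;1;0;0;1;0;0;1;0;0;0;0];
  [:: 0;1;0;0;1;0;1;0;0;0;0;0;0;0;0;1;1;0;1;1;0;0;1;0;0;0;1;1;1;1;0;1;0;0;1;1;0;1;1;0;1;1;0;0;0;0;0;0;0;1];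
  [:: 1;0;0;0;1;1;1;1;1;1;0;1;0;0;1;1;1;0;0;1;1;0;1;0;1;1;1;1;0;1;1;1;0;1;0;1;1;0;1;0;0;1;0;1;0;0;0;0;0;0];
  [:: 1;0;0;0;0;0;0;0;0;1;0;0;0;1;1;0;0;0;0;0;0;0;0;1;0;0;1;0;0;1;0;0;0;0;1;1;0;0;1;0;1;1;0;1;1;0;0;0;0;1];
  [:: 1;0;1;0;0;0;1;1;0;0;0;1;0;1;0;1;1;0;0;0;1;1;0;1;0;0;1;1;1;1;1;1;1;1;1;0;1;0;1;0;0;1;0;0;0;0;1;1;0;1];
  [:: 1;1;0;0;1;0;0;1;0;0;1;1;1;1;1;0;0;1;0;1;1;0;1;0;1;1;0;1;0;1;0;0;0;0;0;1;1;0;0;0;0;0;0;0;0;0;1;0;0;1];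
  [:: 0;1;0;0;1;1;1;1;0;1;1;1;1;0;0;0;0;1;0;1;1;0;1;1;1;1;1;1;0;1;0;1;0;1;1;0;1;0;0;1;1;1;1;1;0;0;1;1;0;1];
  [:: 0;0;1;1;0;0;0;0;0;1;0;0;0;1;1;0;1;1;1;0;1;0;0;1;1;1;0;0;0;1;0;0;1;1;1;1;0;1;0;1;1;0;1;1;1;0;0;1;0;1];
  [:: 0;0;1;1;1;0;1;1;0;0;0;1;1;1;0;1;0;1;0;0;1;1;1;0;0;1;0;1;0;1;0;1;1;0;0;1;0;0;0;1;1;1;1;0;1;0;1;0;1;0];
  [:: 0;0;1;0;0;1;1;1;0;0;1;0;1;0;1;1;0;1;1;1;1;1;1;0;1;0;1;0;1;1;0;1;1;0;0;1;0;0;1;0;0;1;0;1;0;1;1;0;0;1];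
  [:: 0;0;0;1;1;0;0;1;1;1;1;0;1;0;0;0;1;0;0;1;0;0;0;0;0;0;1;1;1;0;1;0;1;1;1;0;1;0;0;1;1;0;1;1;0;1;0;1;1;0];
  [:: 1;0;0;0;1;0;0;1;0;0;1;0;1;1;0;1;1;0;0;1;0;1;0;1;1;1;0;1;0;1;1;1;0;0;0;1;1;0;0;1;1;0;1;0;0;0;1;0;1;1];
  [:: 0;0;0;0;1;1;1;1;0;0;1;0;1;0;0;0;1;1;0;1;1;1;0;1;1;0;1;0;0;0;0;0;1;0;0;0;0;0;0;1;0;0;1;1;0;0;1;1;1;1];
  [:: 1;1;1;0;0;0;1;1;1;0;1;0;1;1;0;0;1;1;1;1;0;0;1;1;0;0;1;1;1;1;0;0;0;0;1;0;0;0;1;0;1;1;1;1;1;0;0;0;0;0];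
  [:: 0;1;0;0;0;0;0;1;1;1;0;1;1;1;0;0;0;0;1;1;1;0;1;0;1;1;0;0;0;0;0;1;1;1;0;1;1;1;0;0;0;1;0;0;0;0;0;1;0;1];
  [:: 0;0;0;1;0;1;1;1;1;1;1;0;0;0;0;0;1;0;0;0;1;1;0;1;0;0;1;0;1;0;0;1;1;1;0;1;1;0;1;0;0;1;1;1;1;1;0;0;0;1];
  [:: 1;0;1;0;1;1;0;1;1;0;1;1;0;1;0;1;0;1;0;1;0;0;0;0;1;0;1;1;1;1;0;1;0;1;1;0;0;0;1;1;1;0;1;1;0;0;1;0;0;1];
  [:: 1;1;1;0;0;0;0;0;0;1;0;0;0;0;0;1;1;1;0;0;0;1;1;0;1;1;0;0;0;0;0;1;1;1;0;1;1;1;1;0;1;1;1;1;0;1;1;0;1;0];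
  [:: 0;1;1;1;0;0;0;0;0;1;0;0;0;0;0;0;0;1;1;1;0;0;0;0;1;0;0;1;1;0;0;1;1;0;1;1;0;1;1;0;1;1;1;1;1;0;0;0;0;1];
  [:: 1;1;1;0;1;1;0;0;1;1;0;1;1;1;0;1;1;1;0;0;0;1;0;1;0;0;0;0;1;0;0;0;1;1;0;0;0;0;1;0;1;0;0;1;0;1;1;0;0;0];
  [:: 0;1;1;0;1;1;0;0;1;0;1;1;1;0;1;0;0;1;0;0;0;1;1;0;0;1;0;0;0;0;0;0;0;0;1;1;0;0;0;0;1;0;1;0;1;1;0;0;1;0];
  [:: 1;1;0;0;1;1;0;1;1;0;1;0;0;0;1;1;1;1;0;0;1;0;1;1;1;0;0;0;0;1;1;1;0;1;1;0;1;1;0;0;0;1;1;0;1;0;0;1;1;0];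
  [:: 1;1;0;0;1;1;1;0;1;1;0;0;0;0;0;0;1;1;1;1;0;1;0;0;1;0;0;0;0;1;0;1;1;0;0;1;0;1;0;1;0;0;0;0;0;0;1;1;1;0];
  [:: 0;1;1;1;0;0;1;1;0;0;0;1;1;0;0;0;1;0;0;1;1;1;1;0;0;0;0;0;0;0;0;0;0;1;0;1;1;1;0;0;0;0;1;0;0;1;1;1;1;0];
  [:: 1;1;1;1;1;0;0;1;0;1;0;0;1;0;0;0;0;1;1;1;0;1;0;0;0;0;1;0;1;1;1;1;1;0;1;0;1;1;0;1;1;1;0;1;0;0;0;0;0;0]].
Definition c50_n : seq (seq nat) := [:: [:: 1;0;1;0;0;1;1;1;0;0;1;0;1;1;1;1;0;0;0;0;1;0;1;1;1;0;0;1;1;1;0;1;0;0;0;1;1;1;0;1;1;0;1;0;1;1;0;1;0;0];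
  [:: 0;0;0;0;1;0;1;1;1;1;0;0;0;1;1;1;1;1;1;0;0;0;0;1;0;1;1;0;1;0;0;0;0;1;1;0;0;1;0;0;1;0;1;1;1;1;1;1;0;0];
  [:: 1;0;0;0;0;1;0;1;1;0;0;1;1;1;1;1;1;1;0;1;0;0;0;0;0;1;0;1;0;1;0;0;1;0;1;1;0;0;0;1;0;1;0;1;0;0;0;1;0;0];
  [:: 0;0;0;1;0;1;1;0;1;1;1;1;1;0;1;0;0;1;0;0;0;0;1;0;1;1;0;0;1;1;1;0;0;0;1;1;1;0;0;1;0;0;1;1;1;1;0;0;1;0];
  [:: 0;1;0;0;1;1;1;1;0;0;1;1;0;1;1;0;0;0;0;1;1;1;0;0;0;1;0;0;0;1;0;0;0;1;0;1;1;1;1;1;0;0;1;1;1;0;1;1;0;1];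
  [:: 1;0;1;1;1;0;0;0;1;1;1;1;1;1;1;0;0;1;1;0;1;1;0;1;1;0;1;1;1;0;1;1;1;1;1;1;0;0;1;0;1;0;0;1;1;1;0;1;0;1];
  [:: 1;1;0;1;1;0;1;0;0;1;0;0;1;1;1;1;1;0;1;0;0;0;1;1;1;0;1;1;1;1;1;1;0;0;1;0;1;1;0;1;0;1;1;0;1;0;1;1;0;1];
  [:: 1;1;1;0;1;0;0;0;1;1;1;0;1;0;0;1;0;0;1;1;0;1;0;1;0;0;0;0;0;0;1;1;1;1;0;0;1;0;0;1;0;0;1;1;0;0;1;0;0;0];
  [:: 0;1;1;1;0;1;0;1;1;0;1;0;1;0;0;0;0;1;0;1;1;0;0;0;1;1;0;0;0;1;0;0;1;1;1;0;1;1;0;0;0;0;0;1;0;0;0;0;0;1];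
  [:: 0;1;0;1;0;1;1;1;0;0;0;1;0;1;0;1;0;0;1;0;1;0;1;0;1;0;0;0;0;1;1;0;0;0;0;0;1;1;0;0;0;0;1;0;0;1;1;0;1;1];
  [:: 1;0;0;1;1;1;0;1;1;0;0;0;0;1;0;0;0;0;1;1;1;0;0;0;1;0;0;0;1;1;1;1;1;1;0;0;0;1;0;0;0;1;1;1;0;1;0;0;1;0];
  [:: 0;0;1;1;1;1;0;0;0;1;0;0;0;0;1;1;0;1;0;0;0;1;1;1;1;1;0;0;1;0;0;1;1;1;0;1;0;1;1;0;1;1;1;0;0;0;0;1;0;0];
  [:: 1;0;1;1;0;1;1;1;1;0;0;0;1;0;0;1;1;0;1;0;1;0;1;1;1;0;0;0;0;0;0;0;1;0;0;1;1;1;0;1;1;0;0;0;0;0;1;1;0;0];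
  [:: 1;1;1;0;1;1;1;0;0;1;1;0;0;1;1;1;0;1;1;1;1;1;0;1;0;1;0;1;1;0;0;1;0;0;1;1;0;0;0;0;0;1;1;1;1;0;1;1;1;0];
  [:: 1;1;1;1;1;1;1;0;0;0;0;1;0;1;1;1;1;0;1;1;0;0;0;0;0;1;0;1;1;1;0;0;1;0;1;0;1;1;0;1;1;1;1;0;1;1;0;1;0;0];
  [:: 1;1;1;0;0;0;1;1;0;1;0;1;1;1;1;0;1;1;0;0;0;1;1;0;1;1;0;0;0;0;0;0;1;1;0;1;0;1;1;1;1;1;0;1;1;1;0;1;0;0];
  [:: 0;1;1;0;0;0;1;0;0;0;0;0;1;0;1;1;0;0;1;0;1;1;0;0;0;0;0;1;0;1;1;0;1;1;1;1;1;0;0;1;1;0;1;0;1;1;1;1;0;0];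
  [:: 0;1;1;1;0;1;0;0;1;0;0;1;0;1;0;1;0;0;1;1;1;1;1;0;0;0;1;1;1;1;1;0;1;0;1;0;0;0;0;0;0;0;1;0;0;0;1;0;0;1];
  [:: 0;1;0;0;0;1;1;1;0;1;1;0;1;1;1;0;1;1;0;1;1;0;1;0;1;0;1;1;1;0;1;1;1;1;1;0;0;0;0;0;0;1;0;1;1;0;0;1;1;1];
  [:: 0;0;1;0;1;0;0;1;1;0;1;0;0;1;1;0;0;1;1;1;0;0;0;1;0;0;0;0;0;1;0;1;1;0;0;1;0;1;1;1;0;1;1;1;0;1;0;0;0;0];
  [:: 1;0;0;0;1;1;0;0;1;1;1;0;1;1;0;0;1;1;1;0;0;0;1;1;0;0;0;0;0;0;1;0;0;0;1;0;0;1;1;0;0;0;0;0;1;0;0;1;1;1];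
  [:: 0;0;0;0;1;1;0;1;0;0;0;1;0;1;0;1;1;1;0;0;0;0;0;1;1;0;1;1;0;0;0;0;1;0;1;1;1;1;0;1;0;1;1;1;1;1;1;0;1;0];
  [:: 1;0;0;1;0;0;1;0;0;1;0;1;1;0;0;1;0;1;1;0;1;0;1;1;0;0;0;1;1;1;0;1;1;1;1;0;1;0;1;1;0;1;1;0;0;1;0;1;1;0];
  [:: 1;1;0;0;0;1;1;1;0;0;0;1;1;1;0;0;0;0;0;1;1;1;1;0;0;1;1;1;0;0;0;1;1;0;0;0;0;0;1;1;0;1;0;1;1;1;1;1;0;0];
  [:: 1;0;0;1;0;1;1;0;1;1;1;1;1;0;0;1;0;0;1;0;0;1;0;0;0;0;1;1;0;1;0;0;1;0;1;1;1;1;0;0;1;0;1;0;0;0;0;1;0;1];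
  [:: 0;1;1;1;1;0;0;0;1;0;0;1;0;1;1;1;0;0;0;0;0;0;0;1;0;0;0;1;0;1;1;1;1;0;0;0;1;1;0;0;1;1;0;1;0;0;1;1;0;1];
  [:: 0;1;0;0;0;1;1;0;0;0;0;0;0;0;0;0;0;1;1;0;0;1;0;1;1;0;0;0;0;0;1;1;1;1;1;1;1;0;0;1;1;1;0;0;1;0;1;1;0;1];
  [:: 1;0;1;0;0;1;1;0;0;0;0;0;0;1;1;0;1;1;1;0;0;1;1;1;1;1;0;1;0;0;0;1;0;1;0;1;0;0;0;1;1;1;0;1;0;1;0;0;1;0];
  [:: 1;1;0;1;0;1;1;0;0;0;1;1;0;1;1;0;0;1;1;0;0;0;1;0;0;0;0;0;0;0;0;1;1;0;0;1;1;0;0;1;1;0;1;1;0;0;0;0;0;0];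
  [:: 1;0;1;1;1;0;1;0;1;1;1;0;0;0;1;0;1;1;0;1;0;0;1;0;1;1;0;0;0;0;0;0;0;0;0;0;1;1;1;1;0;1;0;1;0;1;0;1;0;1];
  [:: 0;0;0;1;0;1;1;1;0;1;1;0;0;0;0;0;1;1;1;0;1;0;0;0;0;1;1;0;0;0;1;1;0;1;0;1;0;1;1;0;0;1;1;1;0;0;1;0;0;0];
  [:: 1;0;0;0;0;1;1;1;0;0;1;1;0;1;0;0;0;0;1;1;0;0;1;1;0;1;1;1;1;0;1;1;0;0;0;1;1;0;0;1;0;0;1;0;1;0;1;1;0;1];
  [:: 0;0;1;0;0;1;0;1;1;0;1;1;1;0;1;1;1;1;1;1;0;1;1;1;1;1;1;0;1;0;0;0;1;0;1;0;1;0;1;0;0;1;1;1;1;0;0;0;0;1];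
  [:: 0;1;0;0;1;1;0;1;1;0;1;1;0;0;0;1;1;0;1;0;0;0;1;0;0;0;1;1;0;0;1;0;0;1;0;1;1;1;0;0;1;1;0;1;0;0;1;1;1;1];
  [:: 0;1;1;1;0;1;1;0;1;0;0;0;0;1;1;0;1;1;1;0;1;1;1;0;1;0;1;0;0;0;0;0;1;0;1;1;1;1;1;0;0;0;1;0;1;0;1;1;1;0];
  [:: 1;0;1;1;1;1;0;0;0;0;0;1;1;1;0;1;1;0;0;1;0;1;0;0;1;0;1;1;1;0;1;1;0;1;1;0;0;1;0;1;1;1;0;0;0;1;0;1;1;0];
  [:: 1;0;0;1;1;0;1;1;1;1;0;0;1;0;1;0;1;0;0;0;0;1;1;0;1;1;1;0;1;1;0;1;1;1;1;0;1;1;1;1;0;1;0;1;1;1;0;0;1;1];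
  [:: 1;1;0;0;1;0;1;0;1;1;1;1;1;0;1;1;0;0;0;1;1;1;0;0;1;1;0;0;0;1;1;0;0;1;1;1;1;1;1;1;1;1;1;1;1;0;0;1;0;1];
  [:: 0;0;0;0;1;1;0;0;0;0;0;1;0;0;0;1;0;0;0;1;1;0;1;1;0;0;0;0;0;1;1;0;1;0;1;0;1;1;1;0;1;1;0;1;1;0;1;1;1;1];
  [:: 1;0;1;1;1;0;1;1;0;0;0;0;1;0;1;1;1;0;0;1;0;1;1;1;0;0;1;1;1;1;0;1;0;0;0;1;1;1;0;1;1;0;1;0;1;1;0;0;0;1];
  [:: 1;1;0;0;0;1;0;0;0;0;0;1;1;0;1;1;1;0;0;0;0;0;0;0;1;1;1;1;1;0;0;0;0;1;0;1;0;1;1;1;1;1;0;1;1;0;0;1;0;1];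
  [:: 0;0;1;0;0;0;1;0;0;0;1;1;0;1;1;1;0;0;1;1;0;1;1;1;0;1;1;1;0;1;1;0;1;1;0;1;1;1;1;0;1;1;1;0;1;0;1;0;1;1];
  [:: 1;1;0;1;1;0;1;1;0;1;1;1;0;1;1;0;1;1;0;1;0;1;1;0;1;0;0;0;1;0;1;1;1;0;1;0;0;1;0;1;0;1;0;0;0;1;0;0;0;1];
  [:: 0;1;1;1;1;1;0;1;1;0;1;0;0;1;0;1;0;0;1;1;0;1;0;1;0;1;0;1;1;1;1;0;1;1;0;0;1;1;1;0;1;0;0;1;1;1;0;0;0;1];
  [:: 1;1;0;1;1;1;1;0;0;0;0;0;0;1;1;1;1;0;1;0;1;1;0;1;0;0;1;0;0;0;0;1;1;0;1;0;1;1;1;1;1;1;0;1;1;1;1;0;1;0];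
  [:: 1;1;0;1;0;1;0;0;0;1;1;0;0;0;1;1;1;0;0;1;0;1;1;1;0;0;0;1;0;1;0;0;0;0;0;1;1;0;0;1;0;0;1;1;1;1;0;1;0;0];
  [:: 0;1;0;0;1;0;1;1;0;1;0;0;1;1;0;0;1;1;0;0;0;1;0;1;0;1;1;0;0;0;1;1;0;1;1;0;0;0;1;0;0;1;0;0;1;0;1;1;0;0];
  [:: 1;1;1;0;1;1;1;0;0;0;0;1;1;1;1;1;1;0;1;0;1;0;1;1;1;1;1;0;0;1;0;1;0;1;1;1;0;1;1;0;1;0;0;0;0;1;1;0;0;0];
  [:: 0;0;0;1;0;0;0;0;0;1;1;0;0;1;0;0;0;0;1;0;1;1;1;0;0;0;0;1;0;0;0;0;0;1;1;1;1;0;1;0;0;1;0;0;1;0;0;0;1;1];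
  [:: 0;0;0;0;1;1;1;0;1;1;0;0;0;0;0;0;0;1;1;0;1;0;0;0;1;1;1;0;0;1;0;1;1;1;0;0;1;1;1;1;1;1;1;1;0;0;0;0;1;0]].
Lemma c50_good : good (50 + 50) 50 9.
Proof. apply: (@base_good 50 9 4 (dec c50_r) (dec c50_i) (dec c50_n) 0). vm_compute. reflexivity. Qed.

From mathcomp Require Import zify.

Lemma mk k d N K s : good (k + k) k d -> (0 < s)%N -> N = (s * (k + k))%N -> K = (s * k)%N ->
  exists_FSD_LCD N K d.
Proof. by move=> g; case: s => // s _ -> ->; apply/good_exists/good_mul. Qed.

Theorem theorem6 :
  (forall n1 n2 s : nat,
      (2 * n1)%N \in [:: 24; 26; 28; 30; 32]%N ->
      (2 * n2)%N \in [:: 34; 36; 38]%N ->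
      (1 <= s)%N ->
      exists_FSD_LCD (4 * s * n1) (2 * s * n1) 6 /\
      exists_FSD_LCD (4 * s * n2) (2 * s * n2) 7) /\
  (forall s : nat, (1 <= s)%N ->
      [/\ exists_FSD_LCD (44 * s) (22 * s) 5,
          exists_FSD_LCD (80 * s) (40 * s) 8 &
          exists_FSD_LCD (100 * s) (50 * s) 9]).
Proof.
split.
  move=> n1 n2 s h1 h2 hs; split.
    move: h1; rewrite !inE.
    case/orP => [/eqP e|]; first by apply: (mk c24_good hs); lia.
    case/orP => [/eqP e|]; first by apply: (mk c26_good hs); lia.
    case/orP => [/eqP e|]; first by apply: (mk c28_good hs); lia.
    case/orP => [/eqP e|/eqP e]; first by apply: (mk c30_good hs); lia.
    by apply: (mk c32_good hs); lia.
  move: h2; rewrite !inE.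
  case/orP => [/eqP e|]; first by apply: (mk c34_good hs); lia.
  case/orP => [/eqP e|/eqP e]; first by apply: (mk c36_good hs); lia.
  by apply: (mk c38_good hs); lia.
move=> s hs; split.
- by apply: (mk c22_good hs); lia.
- by apply: (mk c40_good hs); lia.
- by apply: (mk c50_good hs); lia.
Qed.
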